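(* Let $(M,g)$ be a four-dimensional spacetime with signature $(+,-,-,-)$ and let $X_{abcd}$ be an irreducible $(2,2)$ double form at a point, i.e. $X$ lies in one of the six invariant subspaces listed in the context. Let $I=\tfrac14X_{abcd}X^{abcd}$. Then $$X^{a k_1k_2k_3}X_{b k_1k_2k_3}=I\,\delta^a_b.$$
   Context: A $(2,2)$ double form is a covariant 4-tensor with $X_{abcd}=-X_{bacd}=-X_{abdc}$. Call it symmetric if $X_{abcd}=X_{cdab}$ and antisymmetric if $X_{abcd}=-X_{cdab}$. With $X_{ac}=g^{bd}X_{abcd}$ (first trace), $X=g^{ac}X_{ac}$ and $\hat X_{ab}=X_{ab}-\tfrac14Xg_{ab}$, the six invariant subspaces (in dimension 4) are: (1) symmetric double forms with $X_{abcd}+X_{acdb}+X_{adbc}=0$ and all traces zero; (2) forms $\tfrac12(g_{ac}h_{bd}-g_{ad}h_{bc}+g_{bd}h_{ac}-g_{bc}h_{ad})$ with $h$ symmetric and traceless; (3) multiples of $g_{ac}g_{bd}-g_{ad}g_{bc}$; (4) totally antisymmetric 4-tensors; (5) antisymmetric double forms with vanishing first trace; (6) forms $\tfrac12(g_{ac}h_{bd}-g_{ad}h_{bc}+g_{bd}h_{ac}-g_{bc}h_{ad})$ with $h$ antisymmetric. Every double form is uniquely the sum of one element from each. *)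

(* Defs.v *)
From HB Require Import structures.
From mathcomp Require Import all_boot all_order all_algebra.
Set Implicit Arguments. Unset Strict Implicit. Unset Printing Implicit Defensive.
Import Order.TTheory GRing.Theory Num.Theory.
Local Open Scope ring_scope.

Notation idx := 'I_4.

(* A covariant 4-tensor at a point (components in a fixed basis). *)
Definition tensor4 (R : Type) := idx -> idx -> idx -> idx -> R.

Section DoubleForms.
Variable R : realFieldType.
Variable g : 'M[R]_4.

Definition ginv : 'M[R]_4 := invmx g.

Definition minkowski : 'M[R]_4 :=
  \matrix_(i, j) (if i == j then (if i == ord0 then 1 else -1) else 0).

Definition lorentzian_metric : Prop :=
  g^T = g /\ exists P : 'M[R]_4, P \in unitmx /\ P^T *m g *m P = minkowski.

Definition double_form (X : tensor4 R) : Prop :=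
  (forall a b c d, X a b c d = - X b a c d) /\
  (forall a b c d, X a b c d = - X a b d c).

Definition symmetric_df (X : tensor4 R) : Prop :=
  forall a b c d, X a b c d = X c d a b.

Definition antisymmetric_df (X : tensor4 R) : Prop :=
  forall a b c d, X a b c d = - X c d a b.

Definition first_trace (X : tensor4 R) (a c : idx) : R :=
  \sum_(b < 4) \sum_(d < 4) ginv b d * X a b c d.

Definition full_trace (X : tensor4 R) : R :=
  \sum_(a < 4) \sum_(c < 4) ginv a c * first_trace X a c.

Definition all_traces_zero (X : tensor4 R) : Prop :=
  (forall c d, \sum_(a < 4) \sum_(b < 4) ginv a b * X a b c d = 0) /\
  (forall b d, \sum_(a < 4) \sum_(c < 4) ginv a c * X a b c d = 0) /\
  (forall b c, \sum_(a < 4) \sum_(d < 4) ginv a d * X a b c d = 0) /\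
  (forall a d, \sum_(b < 4) \sum_(c < 4) ginv b c * X a b c d = 0) /\
  (forall a c, \sum_(b < 4) \sum_(d < 4) ginv b d * X a b c d = 0) /\
  (forall a b, \sum_(c < 4) \sum_(d < 4) ginv c d * X a b c d = 0).

Definition gh_form (h : 'M[R]_4) : tensor4 R :=
  fun a b c d => 2^-1 * (g a c * h b d - g a d * h b c + g b d * h a c - g b c * h a d).

Definition gg_form : tensor4 R :=
  fun a b c d => g a c * g b d - g a d * g b c.

Definition subspace1 (X : tensor4 R) : Prop :=
  symmetric_df X /\
  (forall a b c d, X a b c d + X a c d b + X a d b c = 0) /\
  all_traces_zero X.
Definition subspace2 (X : tensor4 R) : Prop :=
  exists h : 'M[R]_4, h^T = h /\
    \sum_(a < 4) \sum_(b < 4) ginv a b * h a b = 0 /\ X = gh_form h.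
Definition subspace3 (X : tensor4 R) : Prop :=
  exists lam : R, X = (fun a b c d => lam * gg_form a b c d).
Definition subspace4 (X : tensor4 R) : Prop :=
  (forall a b c d, X a b c d = - X b a c d) /\
  (forall a b c d, X a b c d = - X c b a d) /\
  (forall a b c d, X a b c d = - X d b c a) /\
  (forall a b c d, X a b c d = - X a c b d) /\
  (forall a b c d, X a b c d = - X a d c b) /\
  (forall a b c d, X a b c d = - X a b d c).
Definition subspace5 (X : tensor4 R) : Prop :=
  antisymmetric_df X /\ (forall a c, first_trace X a c = 0).
Definition subspace6 (X : tensor4 R) : Prop :=
  exists h : 'M[R]_4, h^T = - h /\ X = gh_form h.

Definition irreducible_df (X : tensor4 R) : Prop :=
  double_form X /\
  (subspace1 X \/ subspace2 X \/ subspace3 X \/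
   subspace4 X \/ subspace5 X \/ subspace6 X).

Definition raise_all (X : tensor4 R) : tensor4 R :=
  fun a b c d => \sum_(p < 4) \sum_(q < 4) \sum_(r < 4) \sum_(s < 4)
    ginv a p * ginv b q * ginv c r * ginv d s * X p q r s.

Definition invI (X : tensor4 R) : R :=
  4^-1 * \sum_(a < 4) \sum_(b < 4) \sum_(c < 4) \sum_(d < 4)
    X a b c d * raise_all X a b c d.

Definition XX (X : tensor4 R) (a b : idx) : R :=
  \sum_(k1 < 4) \sum_(k2 < 4) \sum_(k3 < 4) raise_all X a k1 k2 k3 * X b k1 k2 k3.

End DoubleForms.

(* Main.v *)
Require Import Defs.
From mathcomp Require Import all_boot all_order all_algebra ring lra.
From Stdlib Require Import FunctionalExtensionality.
Set Implicit Arguments. Unset Strict Implicit. Unset Printing Implicit Defensive.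
Import GRing.Theory Num.Theory.
Local Open Scope ring_scope.

Ltac fx := let a := fresh "a" in let b := fresh "b" in let c := fresh "c" in
  let d := fresh "d" in
  apply: functional_extensionality => a; apply: functional_extensionality => b;
  apply: functional_extensionality => c; apply: functional_extensionality => d.

Notation o0 := (@Ordinal 4 0 isT).
Notation o1 := (@Ordinal 4 1 isT).
Notation o2 := (@Ordinal 4 2 isT).
Notation o3 := (@Ordinal 4 3 isT).

Lemma ord4_cases (a : 'I_4) : [\/ a = o0, a = o1, a = o2 | a = o3].
Proof.
case: a => [[|[|[|[|//]]]] H].
- by apply: Or41; apply: val_inj.
- by apply: Or42; apply: val_inj.
- by apply: Or43; apply: val_inj.
- by apply: Or44; apply: val_inj.
Qed.

Section Tens.
Variable R : realFieldType.
Implicit Types (M N A B : 'M[R]_4) (X U V W : tensor4 R).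

Lemma big_ord4 (F : 'I_4 -> R) : \sum_(i < 4) F i = F o0 + F o1 + F o2 + F o3.
Proof.
rewrite !big_ord_recl big_ord0 addr0 !addrA.
by congr (_ + _ + _ + _); congr F; apply: val_inj.
Qed.

Lemma sum4_2 (F : 'I_4 -> 'I_4 -> R) :
  \sum_(a < 4) \sum_(b < 4) F a b =
  (F o0 o0 + F o0 o1 + F o0 o2 + F o0 o3) + (F o1 o0 + F o1 o1 + F o1 o2 + F o1 o3) + (F o2 o0 + F o2 o1 + F o2 o2 + F o2 o3) + (F o3 o0 + F o3 o1 + F o3 o2 + F o3 o3).
Proof. by rewrite big_ord4 !big_ord4. Qed.

Lemma sum4_3 (F : 'I_4 -> 'I_4 -> 'I_4 -> R) :
  \sum_(a < 4) \sum_(b < 4) \sum_(c < 4) F a b c =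
  ((F o0 o0 o0 + F o0 o0 o1 + F o0 o0 o2 + F o0 o0 o3) + (F o0 o1 o0 + F o0 o1 o1 + F o0 o1 o2 + F o0 o1 o3) + (F o0 o2 o0 + F o0 o2 o1 + F o0 o2 o2 + F o0 o2 o3) + (F o0 o3 o0 + F o0 o3 o1 + F o0 o3 o2 + F o0 o3 o3)) + ((F o1 o0 o0 + F o1 o0 o1 + F o1 o0 o2 + F o1 o0 o3) + (F o1 o1 o0 + F o1 o1 o1 + F o1 o1 o2 + F o1 o1 o3) + (F o1 o2 o0 + F o1 o2 o1 + F o1 o2 o2 + F o1 o2 o3) + (F o1 o3 o0 + F o1 o3 o1 + F o1 o3 o2 + F o1 o3 o3)) + ((F o2 o0 o0 + F o2 o0 o1 + F o2 o0 o2 + F o2 o0 o3) + (F o2 o1 o0 + F o2 o1 o1 + F o2 o1 o2 + F o2 o1 o3) + (F o2 o2 o0 + F o2 o2 o1 + F o2 o2 o2 + F o2 o2 o3) + (F o2 o3 o0 + F o2 o3 o1 + F o2 o3 o2 + F o2 o3 o3)) + ((F o3 o0 o0 + F o3 o0 o1 + F o3 o0 o2 + F o3 o0 o3) + (F o3 o1 o0 + F o3 o1 o1 + F o3 o1 o2 + F o3 o1 o3) + (F o3 o2 o0 + F o3 o2 o1 + F o3 o2 o2 + F o3 o2 o3) + (F o3 o3 o0 + F o3 o3 o1 + F o3 o3 o2 + F o3 o3 o3)).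
Proof. by rewrite big_ord4 !sum4_2. Qed.

Lemma sum4_4 (F : 'I_4 -> 'I_4 -> 'I_4 -> 'I_4 -> R) :
  \sum_(a < 4) \sum_(b < 4) \sum_(c < 4) \sum_(d < 4) F a b c d =
  (((F o0 o0 o0 o0 + F o0 o0 o0 o1 + F o0 o0 o0 o2 + F o0 o0 o0 o3) + (F o0 o0 o1 o0 + F o0 o0 o1 o1 + F o0 o0 o1 o2 + F o0 o0 o1 o3) + (F o0 o0 o2 o0 + F o0 o0 o2 o1 + F o0 o0 o2 o2 + F o0 o0 o2 o3) + (F o0 o0 o3 o0 + F o0 o0 o3 o1 + F o0 o0 o3 o2 + F o0 o0 o3 o3)) + ((F o0 o1 o0 o0 + F o0 o1 o0 o1 + F o0 o1 o0 o2 + F o0 o1 o0 o3) + (F o0 o1 o1 o0 + F o0 o1 o1 o1 + F o0 o1 o1 o2 + F o0 o1 o1 o3) + (F o0 o1 o2 o0 + F o0 o1 o2 o1 + F o0 o1 o2 o2 + F o0 o1 o2 o3) + (F o0 o1 o3 o0 + F o0 o1 o3 o1 + F o0 o1 o3 o2 + F o0 o1 o3 o3)) + ((F o0 o2 o0 o0 + F o0 o2 o0 o1 + F o0 o2 o0 o2 + F o0 o2 o0 o3) + (F o0 o2 o1 o0 + F o0 o2 o1 o1 + F o0 o2 o1 o2 + F o0 o2 o1 o3) + (F o0 o2 o2 o0 + F o0 o2 o2 o1 + F o0 o2 o2 o2 + F o0 o2 o2 o3) + (F o0 o2 o3 o0 + F o0 o2 o3 o1 + F o0 o2 o3 o2 +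 F o0 o2 o3 o3)) + ((F o0 o3 o0 o0 + F o0 o3 o0 o1 + F o0 o3 o0 o2 + F o0 o3 o0 o3) + (F o0 o3 o1 o0 + F o0 o3 o1 o1 + F o0 o3 o1 o2 + F o0 o3 o1 o3) + (F o0 o3 o2 o0 + F o0 o3 o2 o1 + F o0 o3 o2 o2 + F o0 o3 o2 o3) + (F o0 o3 o3 o0 + F o0 o3 o3 o1 + F o0 o3 o3 o2 + F o0 o3 o3 o3))) + (((F o1 o0 o0 o0 + F o1 o0 o0 o1 + F o1 o0 o0 o2 + F o1 o0 o0 o3) + (F o1 o0 o1 o0 + F o1 o0 o1 o1 + F o1 o0 o1 o2 + F o1 o0 o1 o3) + (F o1 o0 o2 o0 + F o1 o0 o2 o1 + F o1 o0 o2 o2 + F o1 o0 o2 o3) + (F o1 o0 o3 o0 + F o1 o0 o3 o1 + F o1 o0 o3 o2 + F o1 o0 o3 o3)) + ((F o1 o1 o0 o0 + F o1 o1 o0 o1 + F o1 o1 o0 o2 + F o1 o1 o0 o3) + (F o1 o1 o1 o0 + F o1 o1 o1 o1 + F o1 o1 o1 o2 + F o1 o1 o1 o3) + (F o1 o1 o2 o0 + F o1 o1 o2 o1 + F o1 o1 o2 o2 + F o1 o1 o2 o3) + (F o1 o1 o3 o0 + F o1 o1 o3 o1 + F o1 o1 o3 o2 + F o1 o1 o3 o3)) + ((F o1 o2 o0 o0 + F o1 o2 o0 o1 + F o1 o2 o0 o2 + F o1 o2 o0 o3) + (F o1 o2 o1 o0 + F o1 o2 o1 o1 + F o1 o2 o1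 o2 + F o1 o2 o1 o3) + (F o1 o2 o2 o0 + F o1 o2 o2 o1 + F o1 o2 o2 o2 + F o1 o2 o2 o3) + (F o1 o2 o3 o0 + F o1 o2 o3 o1 + F o1 o2 o3 o2 + F o1 o2 o3 o3)) + ((F o1 o3 o0 o0 + F o1 o3 o0 o1 + F o1 o3 o0 o2 + F o1 o3 o0 o3) + (F o1 o3 o1 o0 + F o1 o3 o1 o1 + F o1 o3 o1 o2 + F o1 o3 o1 o3) + (F o1 o3 o2 o0 + F o1 o3 o2 o1 + F o1 o3 o2 o2 + F o1 o3 o2 o3) + (F o1 o3 o3 o0 + F o1 o3 o3 o1 + F o1 o3 o3 o2 + F o1 o3 o3 o3))) + (((F o2 o0 o0 o0 + F o2 o0 o0 o1 + F o2 o0 o0 o2 + F o2 o0 o0 o3) + (F o2 o0 o1 o0 + F o2 o0 o1 o1 + F o2 o0 o1 o2 + F o2 o0 o1 o3) + (F o2 o0 o2 o0 + F o2 o0 o2 o1 + F o2 o0 o2 o2 + F o2 o0 o2 o3) + (F o2 o0 o3 o0 + F o2 o0 o3 o1 + F o2 o0 o3 o2 + F o2 o0 o3 o3)) + ((F o2 o1 o0 o0 + F o2 o1 o0 o1 + F o2 o1 o0 o2 + F o2 o1 o0 o3) + (F o2 o1 o1 o0 + F o2 o1 o1 o1 + F o2 o1 o1 o2 + F o2 o1 o1 o3) + (F o2 o1 o2 o0 + F o2 o1 o2 o1 + F o2 o1 o2 o2 + F o2 o1 o2 o3) + (F o2 o1 o3 o0 + F o2 o1 o3 o1 + F o2 o1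 o3 o2 + F o2 o1 o3 o3)) + ((F o2 o2 o0 o0 + F o2 o2 o0 o1 + F o2 o2 o0 o2 + F o2 o2 o0 o3) + (F o2 o2 o1 o0 + F o2 o2 o1 o1 + F o2 o2 o1 o2 + F o2 o2 o1 o3) + (F o2 o2 o2 o0 + F o2 o2 o2 o1 + F o2 o2 o2 o2 + F o2 o2 o2 o3) + (F o2 o2 o3 o0 + F o2 o2 o3 o1 + F o2 o2 o3 o2 + F o2 o2 o3 o3)) + ((F o2 o3 o0 o0 + F o2 o3 o0 o1 + F o2 o3 o0 o2 + F o2 o3 o0 o3) + (F o2 o3 o1 o0 + F o2 o3 o1 o1 + F o2 o3 o1 o2 + F o2 o3 o1 o3) + (F o2 o3 o2 o0 + F o2 o3 o2 o1 + F o2 o3 o2 o2 + F o2 o3 o2 o3) + (F o2 o3 o3 o0 + F o2 o3 o3 o1 + F o2 o3 o3 o2 + F o2 o3 o3 o3))) + (((F o3 o0 o0 o0 + F o3 o0 o0 o1 + F o3 o0 o0 o2 + F o3 o0 o0 o3) + (F o3 o0 o1 o0 + F o3 o0 o1 o1 + F o3 o0 o1 o2 + F o3 o0 o1 o3) + (F o3 o0 o2 o0 + F o3 o0 o2 o1 + F o3 o0 o2 o2 + F o3 o0 o2 o3) + (F o3 o0 o3 o0 + F o3 o0 o3 o1 + F o3 o0 o3 o2 + F o3 o0 o3 o3)) + ((F o3 o1 o0 o0 + F o3 o1 o0 o1 + F o3 o1 o0 o2 + F o3 o1 o0 o3) + (F o3 o1 o1 o0 + F o3 o1 o1 o1 +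 F o3 o1 o1 o2 + F o3 o1 o1 o3) + (F o3 o1 o2 o0 + F o3 o1 o2 o1 + F o3 o1 o2 o2 + F o3 o1 o2 o3) + (F o3 o1 o3 o0 + F o3 o1 o3 o1 + F o3 o1 o3 o2 + F o3 o1 o3 o3)) + ((F o3 o2 o0 o0 + F o3 o2 o0 o1 + F o3 o2 o0 o2 + F o3 o2 o0 o3) + (F o3 o2 o1 o0 + F o3 o2 o1 o1 + F o3 o2 o1 o2 + F o3 o2 o1 o3) + (F o3 o2 o2 o0 + F o3 o2 o2 o1 + F o3 o2 o2 o2 + F o3 o2 o2 o3) + (F o3 o2 o3 o0 + F o3 o2 o3 o1 + F o3 o2 o3 o2 + F o3 o2 o3 o3)) + ((F o3 o3 o0 o0 + F o3 o3 o0 o1 + F o3 o3 o0 o2 + F o3 o3 o0 o3) + (F o3 o3 o1 o0 + F o3 o3 o1 o1 + F o3 o3 o1 o2 + F o3 o3 o1 o3) + (F o3 o3 o2 o0 + F o3 o3 o2 o1 + F o3 o3 o2 o2 + F o3 o3 o2 o3) + (F o3 o3 o3 o0 + F o3 o3 o3 o1 + F o3 o3 o3 o2 + F o3 o3 o3 o3))).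
Proof. by rewrite big_ord4 !sum4_3. Qed.


Definition t1 M X : tensor4 R := fun a b c d => \sum_(p < 4) M p a * X p b c d.
Definition t2 M X : tensor4 R := fun a b c d => \sum_(p < 4) M p b * X a p c d.
Definition t3 M X : tensor4 R := fun a b c d => \sum_(p < 4) M p c * X a b p d.
Definition t4 M X : tensor4 R := fun a b c d => \sum_(p < 4) M p d * X a b c p.
Definition TT M X := t1 M (t2 M (t3 M (t4 M X))).


Lemma comm_helper (u v : 'I_4 -> R) (F : 'I_4 -> 'I_4 -> R) :
  \sum_(p < 4) u p * \sum_(q < 4) v q * F p q =
  \sum_(q < 4) v q * \sum_(p < 4) u p * F p q.
Proof. rewrite !big_ord4; ring. Qed.

Lemma tC21 M N X : t2 N (t1 M X) = t1 M (t2 N X).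
Proof. fx; exact: (comm_helper _ _ (fun q p => X p q _ _)). Qed.
Lemma tC31 M N X : t3 N (t1 M X) = t1 M (t3 N X).
Proof. fx; exact: (comm_helper _ _ (fun q p => X p _ q _)). Qed.
Lemma tC41 M N X : t4 N (t1 M X) = t1 M (t4 N X).
Proof. fx; exact: (comm_helper _ _ (fun q p => X p _ _ q)). Qed.
Lemma tC32 M N X : t3 N (t2 M X) = t2 M (t3 N X).
Proof. fx; exact: (comm_helper _ _ (fun q p => X _ p q _)). Qed.
Lemma tC42 M N X : t4 N (t2 M X) = t2 M (t4 N X).
Proof. fx; exact: (comm_helper _ _ (fun q p => X _ p _ q)). Qed.
Lemma tC43 M N X : t4 N (t3 M X) = t3 M (t4 N X).
Proof. fx; exact: (comm_helper _ _ (fun q p => X _ _ p q)). Qed.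

Ltac tsort := repeat (first [rewrite tC21 | rewrite tC31 | rewrite tC41 |
                           rewrite tC32 | rewrite tC42 | rewrite tC43]).

Lemma comp_helper (m : 'I_4 -> R) (n : 'I_4 -> 'I_4 -> R) (f : 'I_4 -> R) :
  \sum_(p < 4) m p * \sum_(q < 4) n q p * f q =
  \sum_(q < 4) (\sum_(p < 4) n q p * m p) * f q.
Proof. rewrite !big_ord4; ring. Qed.

Lemma t1_comp M N X : t1 M (t1 N X) = t1 (N *m M) X.
Proof. fx; rewrite /t1; under [RHS]eq_bigr do rewrite mxE; exact: comp_helper. Qed.
Lemma t2_comp M N X : t2 M (t2 N X) = t2 (N *m M) X.
Proof. fx; rewrite /t2; under [RHS]eq_bigr do rewrite mxE; exact: comp_helper. Qed.
Lemma t3_comp M N X : t3 M (t3 N X) = t3 (N *m M) X.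
Proof. fx; rewrite /t3; under [RHS]eq_bigr do rewrite mxE; exact: comp_helper. Qed.
Lemma t4_comp M N X : t4 M (t4 N X) = t4 (N *m M) X.
Proof. fx; rewrite /t4; under [RHS]eq_bigr do rewrite mxE; exact: comp_helper. Qed.

Lemma id_helper (f : 'I_4 -> R) a : \sum_(p < 4) (1%:M : 'M[R]_4) p a * f p = f a.
Proof.
rewrite (bigD1 a) //= big1 ?addr0; first by rewrite mxE eqxx mul1r.
by move=> p /negbTE pa; rewrite mxE pa mul0r.
Qed.

Lemma t1_id X : t1 1%:M X = X. Proof. fx; exact: id_helper. Qed.
Lemma t2_id X : t2 1%:M X = X. Proof. fx; exact: id_helper. Qed.
Lemma t3_id X : t3 1%:M X = X. Proof. fx; exact: id_helper. Qed.
Lemma t4_id X : t4 1%:M X = X. Proof. fx; exact: id_helper. Qed.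

Lemma TT_comp M N X : TT M (TT N X) = TT (N *m M) X.
Proof.
rewrite /TT. tsort. by rewrite t1_comp t2_comp t3_comp t4_comp.
Qed.

Lemma TT_id X : TT 1%:M X = X.
Proof. by rewrite /TT t4_id t3_id t2_id t1_id. Qed.

End Tens.

Ltac tsort := repeat (first [rewrite tC21 | rewrite tC31 | rewrite tC41 |
                           rewrite tC32 | rewrite tC42 | rewrite tC43]).

Section Lin.
Variable R : realFieldType.
Implicit Types (M N A B : 'M[R]_4) (X U V W : tensor4 R).

Definition addT U V : tensor4 R := fun a b c d => U a b c d + V a b c d.
Definition oppT U : tensor4 R := fun a b c d => - U a b c d.
Definition scaleT (k : R) U : tensor4 R := fun a b c d => k * U a b c d.
Definition zeroT : tensor4 R := fun _ _ _ _ => 0.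

Lemma add_helper (m f g : 'I_4 -> R) :
  \sum_(p < 4) m p * (f p + g p) = \sum_(p < 4) m p * f p + \sum_(p < 4) m p * g p.
Proof. rewrite !big_ord4; ring. Qed.
Lemma opp_helper (m f : 'I_4 -> R) :
  \sum_(p < 4) m p * (- f p) = - \sum_(p < 4) m p * f p.
Proof. rewrite !big_ord4; ring. Qed.
Lemma scale_helper k (m f : 'I_4 -> R) :
  \sum_(p < 4) m p * (k * f p) = k * \sum_(p < 4) m p * f p.
Proof. rewrite !big_ord4; ring. Qed.
Lemma zero_helper (m : 'I_4 -> R) : \sum_(p < 4) m p * 0 = 0.
Proof. rewrite !big_ord4; ring. Qed.

Lemma t1_add M U V : t1 M (addT U V) = addT (t1 M U) (t1 M V). Proof. fx; exact: add_helper. Qed.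
Lemma t2_add M U V : t2 M (addT U V) = addT (t2 M U) (t2 M V). Proof. fx; exact: add_helper. Qed.
Lemma t3_add M U V : t3 M (addT U V) = addT (t3 M U) (t3 M V). Proof. fx; exact: add_helper. Qed.
Lemma t4_add M U V : t4 M (addT U V) = addT (t4 M U) (t4 M V). Proof. fx; exact: add_helper. Qed.
Lemma t1_opp M U : t1 M (oppT U) = oppT (t1 M U). Proof. fx; exact: opp_helper. Qed.
Lemma t2_opp M U : t2 M (oppT U) = oppT (t2 M U). Proof. fx; exact: opp_helper. Qed.
Lemma t3_opp M U : t3 M (oppT U) = oppT (t3 M U). Proof. fx; exact: opp_helper. Qed.
Lemma t4_opp M U : t4 M (oppT U) = oppT (t4 M U). Proof. fx; exact: opp_helper. Qed.
Lemma t1_scale M k U : t1 M (scaleT k U) = scaleT k (t1 M U). Proof. fx; exact: scale_helper. Qed.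
Lemma t2_scale M k U : t2 M (scaleT k U) = scaleT k (t2 M U). Proof. fx; exact: scale_helper. Qed.
Lemma t3_scale M k U : t3 M (scaleT k U) = scaleT k (t3 M U). Proof. fx; exact: scale_helper. Qed.
Lemma t4_scale M k U : t4 M (scaleT k U) = scaleT k (t4 M U). Proof. fx; exact: scale_helper. Qed.
Lemma t1_zero M : t1 M zeroT = zeroT. Proof. fx; exact: zero_helper. Qed.
Lemma t2_zero M : t2 M zeroT = zeroT. Proof. fx; exact: zero_helper. Qed.
Lemma t3_zero M : t3 M zeroT = zeroT. Proof. fx; exact: zero_helper. Qed.
Lemma t4_zero M : t4 M zeroT = zeroT. Proof. fx; exact: zero_helper. Qed.

Lemma TT_add M U V : TT M (addT U V) = addT (TT M U) (TT M V).
Proof. by rewrite /TT t4_add t3_add t2_add t1_add. Qed.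
Lemma TT_opp M U : TT M (oppT U) = oppT (TT M U).
Proof. by rewrite /TT t4_opp t3_opp t2_opp t1_opp. Qed.
Lemma TT_scale M k U : TT M (scaleT k U) = scaleT k (TT M U).
Proof. by rewrite /TT t4_scale t3_scale t2_scale t1_scale. Qed.
Lemma TT_zero M : TT M zeroT = zeroT.
Proof. by rewrite /TT t4_zero t3_zero t2_zero t1_zero. Qed.

Definition sw12 X : tensor4 R := fun a b c d => X b a c d.
Definition sw34 X : tensor4 R := fun a b c d => X a b d c.
Definition swP X : tensor4 R := fun a b c d => X c d a b.
Definition cyA X : tensor4 R := fun a b c d => X a c d b.
Definition cyB X : tensor4 R := fun a b c d => X a d b c.
Definition sw13 X : tensor4 R := fun a b c d => X c b a d.
Definition sw14 X : tensor4 R := fun a b c d => X d b c a.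
Definition sw23 X : tensor4 R := fun a b c d => X a c b d.
Definition sw24 X : tensor4 R := fun a b c d => X a d c b.
Definition pA X : tensor4 R := fun a b c d => X c a b d.
Definition pB X : tensor4 R := fun a b c d => X c a d b.

Lemma TT_sw12 M X : sw12 (TT M X) = TT M (sw12 X).
Proof. transitivity (t2 M (t1 M (t3 M (t4 M (sw12 X))))); first by []. by rewrite /TT; tsort. Qed.
Lemma TT_sw34 M X : sw34 (TT M X) = TT M (sw34 X).
Proof. transitivity (t1 M (t2 M (t4 M (t3 M (sw34 X))))); first by []. by rewrite /TT; tsort. Qed.
Lemma TT_swP M X : swP (TT M X) = TT M (swP X).
Proof. transitivity (t3 M (t4 M (t1 M (t2 M (swP X))))); first by []. by rewrite /TT; tsort. Qed.
Lemma TT_cyA M X : cyA (TT M X) = TT M (cyA X).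
Proof. transitivity (t1 M (t3 M (t4 M (t2 M (cyA X))))); first by []. by rewrite /TT; tsort. Qed.
Lemma TT_cyB M X : cyB (TT M X) = TT M (cyB X).
Proof. transitivity (t1 M (t4 M (t2 M (t3 M (cyB X))))); first by []. by rewrite /TT; tsort. Qed.
Lemma TT_sw13 M X : sw13 (TT M X) = TT M (sw13 X).
Proof. transitivity (t3 M (t2 M (t1 M (t4 M (sw13 X))))); first by []. by rewrite /TT; tsort. Qed.
Lemma TT_sw14 M X : sw14 (TT M X) = TT M (sw14 X).
Proof. transitivity (t4 M (t2 M (t3 M (t1 M (sw14 X))))); first by []. by rewrite /TT; tsort. Qed.
Lemma TT_sw23 M X : sw23 (TT M X) = TT M (sw23 X).
Proof. transitivity (t1 M (t3 M (t2 M (t4 M (sw23 X))))); first by []. by rewrite /TT; tsort. Qed.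
Lemma TT_sw24 M X : sw24 (TT M X) = TT M (sw24 X).
Proof. transitivity (t1 M (t4 M (t3 M (t2 M (sw24 X))))); first by []. by rewrite /TT; tsort. Qed.
Lemma TT_pA M X : pA (TT M X) = TT M (pA X).
Proof. transitivity (t3 M (t1 M (t2 M (t4 M (pA X))))); first by []. by rewrite /TT; tsort. Qed.
Lemma TT_pB M X : pB (TT M X) = TT M (pB X).
Proof. transitivity (t3 M (t1 M (t4 M (t2 M (pB X))))); first by []. by rewrite /TT; tsort. Qed.

End Lin.


Section C.
Variable R : realFieldType.
Implicit Types (M N A B : 'M[R]_4) (X U V W Z : tensor4 R).

Lemma one_eval (i j : 'I_4) : (1%:M : 'M[R]_4) i j = (i == j)%:R.
Proof. by rewrite mxE. Qed.

Lemma delta2 (F : 'I_4 -> 'I_4 -> R) :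
  \sum_(p < 4) \sum_(q < 4) (1%:M : 'M[R]_4) p q * F p q = \sum_(p < 4) F p p.
Proof. rewrite sum4_2 big_ord4 !one_eval /=. ring. Qed.

Definition tr12 B X (c d : 'I_4) : R := \sum_(a < 4) \sum_(b < 4) B a b * X a b c d.

Lemma tr_helper (B m : 'I_4 -> 'I_4 -> R) (w : 'I_4 -> 'I_4 -> R) :
  \sum_(a < 4) \sum_(b < 4) B a b * (\sum_(p < 4) m p a * \sum_(q < 4) m q b * w p q) =
  \sum_(p < 4) \sum_(q < 4) (\sum_(b < 4) (\sum_(a < 4) m p a * B a b) * m q b) * w p q.
Proof. rewrite !sum4_2 !big_ord4. ring. Qed.

Lemma tr12_t12 B M W c d : tr12 B (t1 M (t2 M W)) c d = tr12 (M *m B *m M^T) W c d.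
Proof.
rewrite /tr12 /t1 /t2 tr_helper; apply: eq_bigr => p _; apply: eq_bigr => q _.
rewrite mxE; congr (_ * _); apply: eq_bigr => b _; by rewrite !mxE.
Qed.

Lemma tr3_helper (B : 'I_4 -> 'I_4 -> R) (m : 'I_4 -> R) (w : 'I_4 -> 'I_4 -> 'I_4 -> R) :
  \sum_(a < 4) \sum_(b < 4) B a b * (\sum_(p < 4) m p * w a b p) =
  \sum_(p < 4) m p * \sum_(a < 4) \sum_(b < 4) B a b * w a b p.
Proof. rewrite !sum4_2 !big_ord4. ring. Qed.

Lemma tr12_t3 B M W c d : tr12 B (t3 M W) c d = \sum_(r < 4) M r c * tr12 B W r d.
Proof. exact: tr3_helper. Qed.
Lemma tr12_t4 B M W c d : tr12 B (t4 M W) c d = \sum_(r < 4) M r d * tr12 B W c r.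
Proof. exact: tr3_helper. Qed.

Lemma tr_transfer B B' M X :
  M *m B' *m M^T = B -> (forall c d, tr12 B X c d = 0) ->
  forall c d, tr12 B' (TT M X) c d = 0.
Proof.
move=> hB h0 c d; rewrite /TT tr12_t12 hB tr12_t3 big1 // => r _.
by rewrite tr12_t4 big1 ?mulr0 // => s _; rewrite h0 mulr0.
Qed.

Definition O4 (A B : 'M[R]_4) : tensor4 R := fun a b c d => A a c * B b d.

Lemma o_helper (k : R) (m f : 'I_4 -> R) :
  \sum_(p < 4) m p * (k * f p) = k * \sum_(p < 4) f p * m p.
Proof. rewrite !big_ord4. ring. Qed.
Lemma o_helper2 (k : R) (m f : 'I_4 -> R) :
  \sum_(p < 4) m p * (f p * k) = (\sum_(p < 4) m p * f p) * k.
Proof. rewrite !big_ord4. ring. Qed.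

Lemma t4_O M A B : t4 M (O4 A B) = O4 A (B *m M).
Proof. fx; rewrite /t4 /O4 o_helper mxE //. Qed.
Lemma t3_O M A B : t3 M (O4 A B) = O4 (A *m M) B.
Proof. fx; rewrite /t3 /O4 (o_helper2 (B _ _)) mxE. congr (_ * _); apply: eq_bigr => p _; by rewrite mulrC. Qed.
Lemma t2_O M A B : t2 M (O4 A B) = O4 A (M^T *m B).
Proof. fx; rewrite /t2 /O4 o_helper mxE. congr (_ * _); apply: eq_bigr => p _; by rewrite mxE mulrC. Qed.
Lemma t1_O M A B : t1 M (O4 A B) = O4 (M^T *m A) B.
Proof. fx; rewrite /t1 /O4 (o_helper2 (B _ _)) mxE. congr (_ * _); apply: eq_bigr => p _; by rewrite mxE. Qed.

Lemma TT_O M A B : TT M (O4 A B) = O4 (M^T *m A *m M) (M^T *m B *m M).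
Proof. by rewrite /TT t4_O t3_O t2_O t1_O !mulmxA. Qed.

Definition PC U V (a b : 'I_4) : R :=
  \sum_(k < 4) \sum_(l < 4) \sum_(m < 4) U a k l m * V b k l m.

Lemma cc_helper (A B : 'M[R]_4) (u v : 'I_4 -> R) :
  \sum_(k < 4) (\sum_(p < 4) A p k * u p) * (\sum_(q < 4) B q k * v q) =
  \sum_(p < 4) \sum_(q < 4) (A *m B^T) p q * (u p * v q).
Proof. rewrite sum4_2 !big_ord4 !mxE !big_ord4 !mxE. ring. Qed.

Lemma cc1 (A B : 'M[R]_4) (u v : 'I_4 -> R) : A *m B^T = 1%:M ->
  \sum_(k < 4) (\sum_(p < 4) A p k * u p) * (\sum_(q < 4) B q k * v q) =
  \sum_(p < 4) u p * v p.
Proof. move=> h; by rewrite cc_helper h delta2. Qed.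

Lemma sum3_rot (F : 'I_4 -> 'I_4 -> 'I_4 -> R) :
  \sum_(k < 4) \sum_(l < 4) \sum_(m < 4) F k l m = \sum_(l < 4) \sum_(m < 4) \sum_(k < 4) F k l m.
Proof. rewrite !sum4_3. ring. Qed.

Lemma PC_t2 A B U V a b : A *m B^T = 1%:M -> PC (t2 A U) (t2 B V) a b = PC U V a b.
Proof.
move=> h; rewrite /PC sum3_rot [RHS]sum3_rot; apply: eq_bigr => l _; apply: eq_bigr => m _.
exact: cc1.
Qed.
Lemma PC_t3 A B U V a b : A *m B^T = 1%:M -> PC (t3 A U) (t3 B V) a b = PC U V a b.
Proof.
move=> h; rewrite /PC; apply: eq_bigr => k _.
rewrite exchange_big [RHS]exchange_big; apply: eq_bigr => m _; exact: cc1.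
Qed.
Lemma PC_t4 A B U V a b : A *m B^T = 1%:M -> PC (t4 A U) (t4 B V) a b = PC U V a b.
Proof.
move=> h; rewrite /PC; apply: eq_bigr => k _; apply: eq_bigr => l _; exact: cc1.
Qed.

Lemma pc1_helper (x y : 'I_4 -> R) (F : 'I_4 -> 'I_4 -> 'I_4 -> 'I_4 -> 'I_4 -> R) :
  \sum_(k < 4) \sum_(l < 4) \sum_(m < 4)
     (\sum_(p < 4) x p * F p k l m o0) * (\sum_(q < 4) y q * F q k l m o1) = 0 -> True.
Proof. by []. Qed.

Lemma pull2 (F : 'I_4 -> 'I_4 -> 'I_4 -> R) :
  \sum_(m < 4) \sum_(p < 4) \sum_(q < 4) F m p q = \sum_(p < 4) \sum_(q < 4) \sum_(m < 4) F m p q.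
Proof. rewrite exchange_big; apply: eq_bigr => p _; by rewrite exchange_big. Qed.

Lemma prod_sums (x y : 'I_4 -> R) (u v : 'I_4 -> R) :
  (\sum_(p < 4) x p * u p) * (\sum_(q < 4) y q * v q) =
  \sum_(p < 4) \sum_(q < 4) x p * y q * (u p * v q).
Proof. rewrite sum4_2 !big_ord4. ring. Qed.

Lemma PC_t1 A B U V a b :
  PC (t1 A U) (t1 B V) a b = \sum_(p < 4) \sum_(q < 4) A p a * B q b * PC U V p q.
Proof.
rewrite /PC /t1.
transitivity (\sum_(k < 4) \sum_(l < 4) \sum_(m < 4) \sum_(p < 4) \sum_(q < 4)
   A p a * B q b * (U p k l m * V q k l m)).
  by apply: eq_bigr => k _; apply: eq_bigr => l _; apply: eq_bigr => m _; exact: prod_sums.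
rewrite (eq_bigr _ (fun k _ => eq_bigr _ (fun l _ => pull2 _))).
rewrite (eq_bigr _ (fun k _ => pull2 _)) pull2.
apply: eq_bigr => p _; apply: eq_bigr => q _.
rewrite mulr_sumr; apply: eq_bigr => k _; rewrite mulr_sumr; apply: eq_bigr => l _.
by rewrite mulr_sumr.
Qed.

Lemma raise_TT g X : raise_all g X = TT (ginv g)^T X.
Proof.
fx; rewrite /raise_all /TT /t1 /t2 /t3 /t4.
apply: eq_bigr => p _; rewrite !mulr_sumr; apply: eq_bigr => q _.
rewrite !mulr_sumr; apply: eq_bigr => r _; rewrite !mulr_sumr; apply: eq_bigr => s _.
rewrite !mxE; ring.
Qed.

End C.

Section D.
Variable R : realFieldType.
Implicit Types (M N A B : 'M[R]_4) (X U V W Z : tensor4 R).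
Notation e := (minkowski R).

Lemma e_tr : e^T = e.
Proof. apply/matrixP => i j; rewrite !mxE.
by case: (ord4_cases i) => ->; case: (ord4_cases j) => ->. Qed.

Lemma e_sq : e *m e = 1%:M.
Proof.
apply/matrixP => i j; rewrite !mxE big_ord4 !mxE.
by case: (ord4_cases i) => ->; case: (ord4_cases j) => -> /=; ring.
Qed.

Lemma ginv_e : ginv e = e.
Proof.
have [u _] := mulmx1_unit e_sq.
by rewrite /ginv -[invmx e]mulmx1 -e_sq mulmxA mulVmx // mul1mx.
Qed.

Lemma deltaAB A B a b (k : R) :
  \sum_(p < 4) \sum_(q < 4) A p a * B q b * (k * (p == q)%:R) = k * (A^T *m B) a b.
Proof. rewrite sum4_2 !mxE big_ord4 !mxE /=. ring. Qed.

Lemma deltaAB2 A B (F : 'I_4 -> 'I_4 -> R) :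
  \sum_(a < 4) \sum_(p < 4) \sum_(q < 4) A p a * B q a * F p q =
  \sum_(p < 4) \sum_(q < 4) (A *m B^T) p q * F p q.
Proof. rewrite sum4_3 sum4_2 !mxE !big_ord4 !mxE. ring. Qed.

Lemma frame g P X : g^T = g -> P \in unitmx -> P^T *m g *m P = e ->
  (forall p q, XX e (TT P X) p q = invI e (TT P X) * (p == q)%:R) ->
  forall a b, XX g X a b = invI g X * (a == b)%:R.
Proof.
move=> gT Pu hPg HY a b.
set Pi := invmx P.
have PPi : P *m Pi = 1%:M by rewrite mulmxV.
have PiP : Pi *m P = 1%:M by rewrite mulVmx.
set K := P *m e *m P^T.
have Kg : K *m g = 1%:M.
  have KgP : K *m g *m P = P.
    by rewrite /K -!mulmxA [P^T *m _]mulmxA hPg e_sq mulmx1.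
  by rewrite -[K *m g]mulmx1 -PPi mulmxA KgP.
have G : ginv g = K.
  have [_ gu] := mulmx1_unit Kg.
  by rewrite /ginv -[invmx g]mul1mx -Kg -mulmxA mulmxV // mulmx1.
have GT : (ginv g)^T = ginv g.
  by rewrite G /K !trmx_mul trmxK e_tr mulmxA.
set Y := TT P X.
have XY : X = TT Pi Y by rewrite /Y TT_comp PPi TT_id.
have rX : raise_all g X = TT P^T (raise_all e Y).
  rewrite raise_TT GT G {1}XY TT_comp raise_TT ginv_e e_tr TT_comp.
  by rewrite /K !mulmxA PiP mul1mx.
have c1 : P^T *m Pi^T = 1%:M by rewrite -trmx_mul PiP trmx1.
have c2 : Pi *m (P^T)^T = 1%:M by rewrite trmxK PiP.
have IE : invI g X = invI e Y.
  rewrite /invI; congr (_ * _).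
  change (\sum_(a < 4) PC X (raise_all g X) a a = \sum_(a < 4) PC Y (raise_all e Y) a a).
  rewrite rX {1}XY /TT.
  transitivity (\sum_(a < 4) \sum_(p < 4) \sum_(q < 4) Pi p a * P^T q a * PC Y (raise_all e Y) p q).
    apply: eq_bigr => a' _; rewrite PC_t1; apply: eq_bigr => p _; apply: eq_bigr => q _.
    by rewrite PC_t2 // PC_t3 // PC_t4.
  by rewrite deltaAB2 c2 delta2.
change (PC (raise_all g X) X a b = invI g X * (a == b)%:R).
rewrite IE rX {1}XY /TT PC_t1.
transitivity (\sum_(p < 4) \sum_(q < 4) P^T p a * Pi q b * (invI e Y * (p == q)%:R)).
  apply: eq_bigr => p _; apply: eq_bigr => q _.
  rewrite PC_t2 // PC_t3 // PC_t4 //; congr (_ * _); exact: HY.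
by rewrite deltaAB trmxK PPi one_eval.
Qed.

End D.


Section E.
Variable R : realFieldType.
Implicit Types (M N A B P g h : 'M[R]_4) (X U V W Z : tensor4 R).
Notation e := (minkowski R).

Lemma anti_tr P (s : tensor4 R -> tensor4 R) (Hs : forall X, s (TT P X) = TT P (s X)) X :
  (forall a b c d, X a b c d = - s X a b c d) ->
  forall a b c d, TT P X a b c d = - s (TT P X) a b c d.
Proof.
move=> h.
have h0 : addT X (s X) = zeroT R by fx; rewrite /addT /zeroT h; ring.
have := congr1 (TT P) h0; rewrite TT_add TT_zero -Hs => h1 a b c d.
have := congr1 (fun F => F a b c d) h1; rewrite /addT /zeroT => h2.
by apply/eqP; rewrite -subr_eq0 opprK h2.
Qed.

Lemma sym_tr P (s : tensor4 R -> tensor4 R) (Hs : forall X, s (TT P X) = TT P (s X)) X :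
  (forall a b c d, X a b c d = s X a b c d) ->
  forall a b c d, TT P X a b c d = s (TT P X) a b c d.
Proof.
move=> h.
have h0 : addT X (oppT (s X)) = zeroT R by fx; rewrite /addT /oppT /zeroT -h; ring.
have := congr1 (TT P) h0; rewrite TT_add TT_opp TT_zero -Hs => h1 a b c d.
have := congr1 (fun F => F a b c d) h1; rewrite /addT /oppT /zeroT => h2.
by apply/eqP; rewrite -subr_eq0 h2.
Qed.

Lemma bianchi_tr P X :
  (forall a b c d, X a b c d + X a c d b + X a d b c = 0) ->
  forall a b c d, TT P X a b c d + TT P X a c d b + TT P X a d b c = 0.
Proof.
move=> h.
have h0 : addT (addT X (cyA X)) (cyB X) = zeroT R by fx; rewrite /addT /zeroT /cyA /cyB h.
have := congr1 (TT P) h0; rewrite !TT_add TT_zero -TT_cyA -TT_cyB => h1 a b c d.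
exact: (congr1 (fun F => F a b c d) h1).
Qed.

Lemma tr_tr P g (s : tensor4 R -> tensor4 R) (Hs : forall X, s (TT P X) = TT P (s X)) X :
  P *m e *m P^T = ginv g ->
  (forall c d, tr12 (ginv g) (s X) c d = 0) ->
  forall c d, tr12 e (s (TT P X)) c d = 0.
Proof. move=> hG h c d; rewrite Hs; exact: (tr_transfer hG h). Qed.

Lemma tr12_e W c d : tr12 e W c d = W o0 o0 c d - W o1 o1 c d - W o2 o2 c d - W o3 o3 c d.
Proof. rewrite /tr12 sum4_2 !mxE /=. ring. Qed.

Lemma gh_decomp g h : gh_form g h =
  scaleT 2^-1 (addT (addT (addT (O4 g h) (oppT (sw34 (O4 g h)))) (O4 h g)) (oppT (sw34 (O4 h g)))).
Proof. fx; rewrite /gh_form /scaleT /addT /oppT /sw34 /O4. ring. Qed.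

Lemma gh_tr P g h : P^T *m g *m P = e -> TT P (gh_form g h) = gh_form e (P^T *m h *m P).
Proof.
move=> hP; rewrite gh_decomp TT_scale !TT_add !TT_opp -(TT_sw34 P (O4 g h)) -(TT_sw34 P (O4 h g)) !TT_O hP.
by rewrite gh_decomp.
Qed.

Lemma gg_decomp g : gg_form g = addT (O4 g g) (oppT (sw34 (O4 g g))).
Proof. fx; rewrite /gg_form /addT /oppT /sw34 /O4. ring. Qed.

Lemma gg_tr P g lam : P^T *m g *m P = e ->
  TT P (fun a b c d => lam * gg_form g a b c d) = (fun a b c d => lam * gg_form e a b c d).
Proof.
move=> hP.
have -> : (fun a b c d => lam * gg_form g a b c d) = scaleT lam (gg_form g) by [].
by rewrite gg_decomp TT_scale TT_add TT_opp -(TT_sw34 P (O4 g g)) TT_O hP -gg_decomp.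
Qed.

Lemma trsum (B C : 'M[R]_4) :
  \sum_(a < 4) \sum_(b < 4) B a b * C a b = \tr (B^T *m C).
Proof.
rewrite /mxtrace exchange_big; apply: eq_bigr => b _; rewrite mxE.
by apply: eq_bigr => a _; rewrite mxE.
Qed.

Lemma htr P g h : P *m e *m P^T = ginv g ->
  \sum_(a < 4) \sum_(b < 4) ginv g a b * h a b = 0 ->
  \sum_(a < 4) \sum_(b < 4) e a b * (P^T *m h *m P) a b = 0.
Proof.
move=> hG; rewrite !trsum -hG !trmx_mul trmxK !mulmxA => h0.
by rewrite mxtrace_mulC !mulmxA.
Qed.

End E.


Section G.
Variable R : realFieldType.
Notation e := (minkowski R).

Definition XXgoal (Y : tensor4 R) := forall p q, XX e Y p q = invI e Y * (p == q)%:R.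

Definition sg (a : 'I_4) : R := if Nat.eqb (nat_of_ord a) 0 then 1 else -1.
Definition ee (a b : 'I_4) : R := if Nat.eqb (nat_of_ord a) (nat_of_ord b) then sg a else 0.
Definition dd (a b : 'I_4) : R := if Nat.eqb (nat_of_ord a) (nat_of_ord b) then 1 else 0.

Lemma dd_eq (a b : 'I_4) : (a == b)%:R = dd a b.
Proof. by case: (ord4_cases a) => ->; case: (ord4_cases b) => ->. Qed.

Lemma e_ee a b : e a b = ee a b.
Proof.
rewrite mxE /ee /sg.
by case: (ord4_cases a) => ->; case: (ord4_cases b) => ->.
Qed.

Lemma diag_e (f : 'I_4 -> R) a : \sum_(p < 4) e p a * f p = sg a * f a.
Proof. rewrite big_ord4 !e_ee /ee /sg. case: (ord4_cases a) => -> /=; ring. Qed.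

Lemma raise_e Y : raise_all e Y = fun a b c d => sg a * sg b * sg c * sg d * Y a b c d.
Proof.
rewrite raise_TT ginv_e e_tr; fx.
rewrite /TT {1}/t1 diag_e {1}/t2 diag_e {1}/t3 diag_e /t4 diag_e; ring.
Qed.

Lemma XX_e Y p q : XX e Y p q =
  \sum_(k < 4) \sum_(l < 4) \sum_(m < 4) sg p * sg k * sg l * sg m * Y p k l m * Y q k l m.
Proof. by rewrite /XX raise_e. Qed.

Lemma invI_e Y : invI e Y =
  4^-1 * \sum_(a < 4) \sum_(b < 4) \sum_(c < 4) \sum_(d < 4)
      Y a b c d * (sg a * sg b * sg c * sg d * Y a b c d).
Proof. by rewrite /invI raise_e. Qed.

Lemma gg_ee : gg_form e = fun a b c d => ee a c * ee b d - ee a d * ee b c.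
Proof. fx; by rewrite /gg_form !e_ee. Qed.

Lemma gh_ee h : gh_form e h = fun a b c d =>
  2^-1 * (ee a c * h b d - ee a d * h b c + ee b d * h a c - ee b c * h a d).
Proof. fx; by rewrite /gh_form !e_ee. Qed.

Lemma invI_XX Y : invI e Y = 4^-1 * \sum_(p < 4) XX e Y p p.
Proof.
rewrite /invI /XX; congr (_ * _); apply: eq_bigr => a _; apply: eq_bigr => b _.
apply: eq_bigr => c _; apply: eq_bigr => d _; exact: mulrC.
Qed.

Lemma XXgoal_suff Y :
  (forall p q, p != q -> XX e Y p q = 0) ->
  XX e Y o1 o1 = XX e Y o0 o0 -> XX e Y o2 o2 = XX e Y o0 o0 ->
  XX e Y o3 o3 = XX e Y o0 o0 -> XXgoal Y.
Proof.
move=> H0 H1 H2 H3 p q; rewrite invI_XX big_ord4 H1 H2 H3.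
case: eqP => [<-|/eqP pq]; last by rewrite H0 // mulr0.
have -> : XX e Y p p = XX e Y o0 o0.
  by case: (ord4_cases p) => ->.
have h4 : (4 : R) != 0 by rewrite pnatr_eq0.
rewrite mulr1 -[XX e Y o0 o0 + _ + _ + _]mulr1n.
rewrite (_ : XX e Y o0 o0 + XX e Y o0 o0 + XX e Y o0 o0 + XX e Y o0 o0 = 4 * XX e Y o0 o0).
  by rewrite mulr1n mulrA mulVf // mul1r.
ring.
Qed.

Ltac finish_eta :=
  apply: XXgoal_suff; [ let p := fresh "p" in let q := fresh "q" in move=> p q; case: (ord4_cases p) => ->; case: (ord4_cases q) => -> // _ | | | ];
  rewrite !XX_e !sum4_3;
  cbv beta iota delta [sg ee dd Nat.eqb nat_of_ord].

Lemma eta3' (lam : R) : XXgoal (fun a b c d => lam * gg_form e a b c d).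
Proof.
rewrite gg_ee. finish_eta. all: ring.
Qed.





Definition ghf (H : 'I_4 -> 'I_4 -> R) : tensor4 R := fun a b c d =>
  2^-1 * (ee a c * H b d - ee a d * H b c + ee b d * H a c - ee b c * H a d).

Lemma gh_ghf h : gh_form e h = ghf (fun i j => h i j).
Proof. fx; by rewrite /gh_form /ghf !e_ee. Qed.

Definition HS (x11 x22 x33 x01 x02 x03 x12 x13 x23 : R) (i j : 'I_4) : R :=
  match nat_of_ord i, nat_of_ord j with
  | 0, 0 => x11 + x22 + x33 | 0, 1 => x01 | 0, 2 => x02 | 0, 3 => x03
  | 1, 0 => x01 | 1, 1 => x11 | 1, 2 => x12 | 1, 3 => x13
  | 2, 0 => x02 | 2, 1 => x12 | 2, 2 => x22 | 2, 3 => x23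
  | 3, 0 => x03 | 3, 1 => x13 | 3, 2 => x23 | 3, 3 => x33
  | _, _ => 0 end.

Definition HA (x01 x02 x03 x12 x13 x23 : R) (i j : 'I_4) : R :=
  match nat_of_ord i, nat_of_ord j with
  | 0, 0 => 0 | 0, 1 => x01 | 0, 2 => x02 | 0, 3 => x03
  | 1, 0 => - x01 | 1, 1 => 0 | 1, 2 => x12 | 1, 3 => x13
  | 2, 0 => - x02 | 2, 1 => - x12 | 2, 2 => 0 | 2, 3 => x23
  | 3, 0 => - x03 | 3, 1 => - x13 | 3, 2 => - x23 | 3, 3 => 0
  | _, _ => 0 end.

Lemma eta2' (x11 x22 x33 x01 x02 x03 x12 x13 x23 : R) :
  XXgoal (ghf (HS x11 x22 x33 x01 x02 x03 x12 x13 x23)).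
Proof. finish_eta; cbv beta iota delta [ghf HS ee sg Nat.eqb nat_of_ord]; ring. Qed.

Lemma eta6' (x01 x02 x03 x12 x13 x23 : R) : XXgoal (ghf (HA x01 x02 x03 x12 x13 x23)).
Proof. finish_eta; cbv beta iota delta [ghf HA ee sg Nat.eqb nat_of_ord]; ring. Qed.

Lemma eta2 (h : 'M[R]_4) : h^T = h ->
  \sum_(a < 4) \sum_(b < 4) e a b * h a b = 0 -> XXgoal (gh_form e h).
Proof.
move=> hT htr.
have s : forall k l, h k l = h l k.
  by move=> k l; have := congr1 (fun M : 'M[R]_4 => M l k) hT; rewrite mxE.
have t0 : h o0 o0 = h o1 o1 + h o2 o2 + h o3 o3.
  move: htr; rewrite sum4_2 !e_ee; cbv beta iota delta [ee sg Nat.eqb nat_of_ord] => ht; lra.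
have hE : (fun i j => h i j) = HS (h o1 o1) (h o2 o2) (h o3 o3) (h o0 o1) (h o0 o2) (h o0 o3)
                                   (h o1 o2) (h o1 o3) (h o2 o3).
  apply: functional_extensionality => i; apply: functional_extensionality => j;
  case: (ord4_cases i) => ->; case: (ord4_cases j) => ->; cbv beta iota delta [HS nat_of_ord];
  first [by [] | by rewrite t0 | by rewrite s].
by rewrite gh_ghf hE; exact: eta2'.
Qed.

Lemma eta6 (h : 'M[R]_4) : h^T = - h -> XXgoal (gh_form e h).
Proof.
move=> hT.
have s : forall k l, h k l = - h l k.
  by move=> k l; have := congr1 (fun M : 'M[R]_4 => M l k) hT; rewrite !mxE.
have d : forall k, h k k = 0 by move=> k; move: (s k k) => hk; lra.
have hE : (fun i j => h i j) = HA (h o0 o1) (h o0 o2) (h o0 o3) (h o1 o2) (h o1 o3) (h o2 o3).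
  apply: functional_extensionality => i; apply: functional_extensionality => j;
  case: (ord4_cases i) => ->; case: (ord4_cases j) => ->; cbv beta iota delta [HA nat_of_ord];
  first [by [] | by rewrite d | by rewrite s].
by rewrite gh_ghf hE; exact: eta6'.
Qed.

End G.


Ltac finish_eta :=
  apply: XXgoal_suff; [ let p := fresh "p" in let q := fresh "q" in move=> p q; case: (ord4_cases p) => ->; case: (ord4_cases q) => -> // _ | | | ];
  rewrite !XX_e !sum4_3;
  cbv beta iota delta [sg ee dd Nat.eqb nat_of_ord].


Section G2.
Variable R : realFieldType.
Notation e := (minkowski R).

Definition Wp1 (x0 x1 x2 x3 x4 x5 x6 x7 x8 x9 : R) (a b c d : 'I_4) : R :=
  match nat_of_ord a, nat_of_ord b, nat_of_ord c, nat_of_ord d with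
  | 0, 0, 0, 0 => 0
  | 0, 0, 0, 1 => 0
  | 0, 0, 0, 2 => 0
  | 0, 0, 0, 3 => 0
  | 0, 0, 1, 0 => 0
  | 0, 0, 1, 1 => 0
  | 0, 0, 1, 2 => 0
  | 0, 0, 1, 3 => 0
  | 0, 0, 2, 0 => 0
  | 0, 0, 2, 1 => 0
  | 0, 0, 2, 2 => 0
  | 0, 0, 2, 3 => 0
  | 0, 0, 3, 0 => 0
  | 0, 0, 3, 1 => 0
  | 0, 0, 3, 2 => 0
  | 0, 0, 3, 3 => 0
  | 0, 1, 0, 0 => 0
  | 0, 1, 0, 1 => x9
  | 0, 1, 0, 2 => x8
  | 0, 1, 0, 3 => x7
  | 0, 1, 1, 0 => - x9
  | 0, 1, 1, 1 => 0
  | 0, 1, 1, 2 => x6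
  | 0, 1, 1, 3 => x5
  | 0, 1, 2, 0 => - x8
  | 0, 1, 2, 1 => - x6
  | 0, 1, 2, 2 => 0
  | 0, 1, 2, 3 => x4
  | 0, 1, 3, 0 => - x7
  | 0, 1, 3, 1 => - x5
  | 0, 1, 3, 2 => - x4
  | 0, 1, 3, 3 => 0
  | 0, 2, 0, 0 => 0
  | 0, 2, 0, 1 => x8
  | 0, 2, 0, 2 => x3
  | 0, 2, 0, 3 => x2
  | 0, 2, 1, 0 => - x8
  | 0, 2, 1, 1 => 0
  | 0, 2, 1, 2 => x1
  | 0, 2, 1, 3 => x0
  | 0, 2, 2, 0 => - x3
  | 0, 2, 2, 1 => - x1
  | 0, 2, 2, 2 => 0
  | 0, 2, 2, 3 => - x5
  | 0, 2, 3, 0 => - x2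
  | 0, 2, 3, 1 => - x0
  | 0, 2, 3, 2 => x5
  | 0, 2, 3, 3 => 0
  | 0, 3, 0, 0 => 0
  | 0, 3, 0, 1 => x7
  | 0, 3, 0, 2 => x2
  | 0, 3, 0, 3 => - x9 - x3
  | 0, 3, 1, 0 => - x7
  | 0, 3, 1, 1 => 0
  | 0, 3, 1, 2 => - x4 + x0
  | 0, 3, 1, 3 => - x1
  | 0, 3, 2, 0 => - x2
  | 0, 3, 2, 1 => x4 - x0
  | 0, 3, 2, 2 => 0
  | 0, 3, 2, 3 => x6
  | 0, 3, 3, 0 => x9 + x3
  | 0, 3, 3, 1 => x1
  | 0, 3, 3, 2 => - x6
  | 0, 3, 3, 3 => 0
  | 1, 0, 0, 0 => 0
  | 1, 0, 0, 1 => - x9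
  | 1, 0, 0, 2 => - x8
  | 1, 0, 0, 3 => - x7
  | 1, 0, 1, 0 => x9
  | 1, 0, 1, 1 => 0
  | 1, 0, 1, 2 => - x6
  | 1, 0, 1, 3 => - x5
  | 1, 0, 2, 0 => x8
  | 1, 0, 2, 1 => x6
  | 1, 0, 2, 2 => 0
  | 1, 0, 2, 3 => - x4
  | 1, 0, 3, 0 => x7
  | 1, 0, 3, 1 => x5
  | 1, 0, 3, 2 => x4
  | 1, 0, 3, 3 => 0
  | 1, 1, 0, 0 => 0
  | 1, 1, 0, 1 => 0
  | 1, 1, 0, 2 => 0
  | 1, 1, 0, 3 => 0
  | 1, 1, 1, 0 => 0
  | 1, 1, 1, 1 => 0
  | 1, 1, 1, 2 => 0
  | 1, 1, 1, 3 => 0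
  | 1, 1, 2, 0 => 0
  | 1, 1, 2, 1 => 0
  | 1, 1, 2, 2 => 0
  | 1, 1, 2, 3 => 0
  | 1, 1, 3, 0 => 0
  | 1, 1, 3, 1 => 0
  | 1, 1, 3, 2 => 0
  | 1, 1, 3, 3 => 0
  | 1, 2, 0, 0 => 0
  | 1, 2, 0, 1 => x6
  | 1, 2, 0, 2 => x1
  | 1, 2, 0, 3 => - x4 + x0
  | 1, 2, 1, 0 => - x6
  | 1, 2, 1, 1 => 0
  | 1, 2, 1, 2 => x9 + x3
  | 1, 2, 1, 3 => x2
  | 1, 2, 2, 0 => - x1
  | 1, 2, 2, 1 => - x9 - x3
  | 1, 2, 2, 2 => 0
  | 1, 2, 2, 3 => - x7
  | 1, 2, 3, 0 => x4 - x0
  | 1, 2, 3, 1 => - x2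
  | 1, 2, 3, 2 => x7
  | 1, 2, 3, 3 => 0
  | 1, 3, 0, 0 => 0
  | 1, 3, 0, 1 => x5
  | 1, 3, 0, 2 => x0
  | 1, 3, 0, 3 => - x1
  | 1, 3, 1, 0 => - x5
  | 1, 3, 1, 1 => 0
  | 1, 3, 1, 2 => x2
  | 1, 3, 1, 3 => - x3
  | 1, 3, 2, 0 => - x0
  | 1, 3, 2, 1 => - x2
  | 1, 3, 2, 2 => 0
  | 1, 3, 2, 3 => x8
  | 1, 3, 3, 0 => x1
  | 1, 3, 3, 1 => x3
  | 1, 3, 3, 2 => - x8
  | 1, 3, 3, 3 => 0
  | 2, 0, 0, 0 => 0
  | 2, 0, 0, 1 => - x8
  | 2, 0, 0, 2 => - x3
  | 2, 0, 0, 3 => - x2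
  | 2, 0, 1, 0 => x8
  | 2, 0, 1, 1 => 0
  | 2, 0, 1, 2 => - x1
  | 2, 0, 1, 3 => - x0
  | 2, 0, 2, 0 => x3
  | 2, 0, 2, 1 => x1
  | 2, 0, 2, 2 => 0
  | 2, 0, 2, 3 => x5
  | 2, 0, 3, 0 => x2
  | 2, 0, 3, 1 => x0
  | 2, 0, 3, 2 => - x5
  | 2, 0, 3, 3 => 0
  | 2, 1, 0, 0 => 0
  | 2, 1, 0, 1 => - x6
  | 2, 1, 0, 2 => - x1
  | 2, 1, 0, 3 => x4 - x0
  | 2, 1, 1, 0 => x6
  | 2, 1, 1, 1 => 0
  | 2, 1, 1, 2 => - x9 - x3
  | 2, 1, 1, 3 => - x2
  | 2, 1, 2, 0 => x1
  | 2, 1, 2, 1 => x9 + x3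
  | 2, 1, 2, 2 => 0
  | 2, 1, 2, 3 => x7
  | 2, 1, 3, 0 => - x4 + x0
  | 2, 1, 3, 1 => x2
  | 2, 1, 3, 2 => - x7
  | 2, 1, 3, 3 => 0
  | 2, 2, 0, 0 => 0
  | 2, 2, 0, 1 => 0
  | 2, 2, 0, 2 => 0
  | 2, 2, 0, 3 => 0
  | 2, 2, 1, 0 => 0
  | 2, 2, 1, 1 => 0
  | 2, 2, 1, 2 => 0
  | 2, 2, 1, 3 => 0
  | 2, 2, 2, 0 => 0
  | 2, 2, 2, 1 => 0
  | 2, 2, 2, 2 => 0
  | 2, 2, 2, 3 => 0
  | 2, 2, 3, 0 => 0
  | 2, 2, 3, 1 => 0
  | 2, 2, 3, 2 => 0
  | 2, 2, 3, 3 => 0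
  | 2, 3, 0, 0 => 0
  | 2, 3, 0, 1 => x4
  | 2, 3, 0, 2 => - x5
  | 2, 3, 0, 3 => x6
  | 2, 3, 1, 0 => - x4
  | 2, 3, 1, 1 => 0
  | 2, 3, 1, 2 => - x7
  | 2, 3, 1, 3 => x8
  | 2, 3, 2, 0 => x5
  | 2, 3, 2, 1 => x7
  | 2, 3, 2, 2 => 0
  | 2, 3, 2, 3 => - x9
  | 2, 3, 3, 0 => - x6
  | 2, 3, 3, 1 => - x8
  | 2, 3, 3, 2 => x9
  | 2, 3, 3, 3 => 0
  | 3, 0, 0, 0 => 0
  | 3, 0, 0, 1 => - x7
  | 3, 0, 0, 2 => - x2
  | 3, 0, 0, 3 => x9 + x3
  | 3, 0, 1, 0 => x7
  | 3, 0, 1, 1 => 0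
  | 3, 0, 1, 2 => x4 - x0
  | 3, 0, 1, 3 => x1
  | 3, 0, 2, 0 => x2
  | 3, 0, 2, 1 => - x4 + x0
  | 3, 0, 2, 2 => 0
  | 3, 0, 2, 3 => - x6
  | 3, 0, 3, 0 => - x9 - x3
  | 3, 0, 3, 1 => - x1
  | 3, 0, 3, 2 => x6
  | 3, 0, 3, 3 => 0
  | 3, 1, 0, 0 => 0
  | 3, 1, 0, 1 => - x5
  | 3, 1, 0, 2 => - x0
  | 3, 1, 0, 3 => x1
  | 3, 1, 1, 0 => x5
  | 3, 1, 1, 1 => 0
  | 3, 1, 1, 2 => - x2
  | 3, 1, 1, 3 => x3
  | 3, 1, 2, 0 => x0
  | 3, 1, 2, 1 => x2
  | 3, 1, 2, 2 => 0
  | 3, 1, 2, 3 => - x8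
  | 3, 1, 3, 0 => - x1
  | 3, 1, 3, 1 => - x3
  | 3, 1, 3, 2 => x8
  | 3, 1, 3, 3 => 0
  | 3, 2, 0, 0 => 0
  | 3, 2, 0, 1 => - x4
  | 3, 2, 0, 2 => x5
  | 3, 2, 0, 3 => - x6
  | 3, 2, 1, 0 => x4
  | 3, 2, 1, 1 => 0
  | 3, 2, 1, 2 => x7
  | 3, 2, 1, 3 => - x8
  | 3, 2, 2, 0 => - x5
  | 3, 2, 2, 1 => - x7
  | 3, 2, 2, 2 => 0
  | 3, 2, 2, 3 => x9
  | 3, 2, 3, 0 => x6
  | 3, 2, 3, 1 => x8
  | 3, 2, 3, 2 => - x9
  | 3, 2, 3, 3 => 0
  | 3, 3, 0, 0 => 0
  | 3, 3, 0, 1 => 0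
  | 3, 3, 0, 2 => 0
  | 3, 3, 0, 3 => 0
  | 3, 3, 1, 0 => 0
  | 3, 3, 1, 1 => 0
  | 3, 3, 1, 2 => 0
  | 3, 3, 1, 3 => 0
  | 3, 3, 2, 0 => 0
  | 3, 3, 2, 1 => 0
  | 3, 3, 2, 2 => 0
  | 3, 3, 2, 3 => 0
  | 3, 3, 3, 0 => 0
  | 3, 3, 3, 1 => 0
  | 3, 3, 3, 2 => 0
  | 3, 3, 3, 3 => 0
  | _, _, _, _ => 0
  end.

Lemma eta1' (x0 x1 x2 x3 x4 x5 x6 x7 x8 x9 : R) : XXgoal (Wp1 x0 x1 x2 x3 x4 x5 x6 x7 x8 x9).
Proof.
finish_eta; cbv beta iota delta [Wp1 nat_of_ord]; ring.
Qed.

Section Eta1.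
Variable Y : tensor4 R.
Hypothesis DF1 : forall a b c d, Y a b c d = - Y b a c d.
Hypothesis DF2 : forall a b c d, Y a b c d = - Y a b d c.
Hypothesis SY : forall a b c d, Y a b c d = Y c d a b.
Hypothesis BI : forall a b c d, Y a b c d + Y a c d b + Y a d b c = 0.
Hypothesis U1 : forall c d, tr12 e Y c d = 0.
Hypothesis U2 : forall c d, tr12 e (sw23 Y) c d = 0.
Hypothesis U3 : forall c d, tr12 e (cyA Y) c d = 0.
Hypothesis U4 : forall c d, tr12 e (pA Y) c d = 0.
Hypothesis U5 : forall c d, tr12 e (pB Y) c d = 0.
Hypothesis U6 : forall c d, tr12 e (swP Y) c d = 0.
Lemma T1_1 x y : Y o0 o0 x y - Y o1 o1 x y - Y o2 o2 x y - Y o3 o3 x y = 0.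
Proof. by have := U1 x y; rewrite tr12_e. Qed.
Lemma T1_2 x y : Y o0 x o0 y - Y o1 x o1 y - Y o2 x o2 y - Y o3 x o3 y = 0.
Proof. by have := U2 x y; rewrite tr12_e. Qed.
Lemma T1_3 x y : Y o0 x y o0 - Y o1 x y o1 - Y o2 x y o2 - Y o3 x y o3 = 0.
Proof. by have := U3 x y; rewrite tr12_e. Qed.
Lemma T1_4 x y : Y x o0 o0 y - Y x o1 o1 y - Y x o2 o2 y - Y x o3 o3 y = 0.
Proof. by have := U4 x y; rewrite tr12_e. Qed.
Lemma T1_5 x y : Y x o0 y o0 - Y x o1 y o1 - Y x o2 y o2 - Y x o3 y o3 = 0.
Proof. by have := U5 x y; rewrite tr12_e. Qed.
Lemma T1_6 x y : Y x y o0 o0 - Y x y o1 o1 - Y x y o2 o2 - Y x y o3 o3 = 0.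
Proof. by have := U6 x y; rewrite tr12_e. Qed.
Definition V1 := Wp1 (Y o0 o2 o1 o3) (Y o0 o2 o1 o2) (Y o0 o2 o0 o3) (Y o0 o2 o0 o2) (Y o0 o1 o2 o3) (Y o0 o1 o1 o3) (Y o0 o1 o1 o2) (Y o0 o1 o0 o3) (Y o0 o1 o0 o2) (Y o0 o1 o0 o1).
Lemma E1_00 c d : Y o0 o0 c d = V1 o0 o0 c d.
Proof.
case: (ord4_cases c) => ->; case: (ord4_cases d) => ->; cbv beta iota delta [V1 Wp1 nat_of_ord].
- move: (DF1 o0 o0 o0 o0) => h0; lra.
- move: (DF1 o0 o0 o0 o1) => h0; lra.
- move: (DF1 o0 o0 o0 o2) => h0; lra.
- move: (DF1 o0 o0 o0 o3) => h0; lra.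
- move: (DF1 o0 o0 o0 o1) (DF2 o0 o0 o0 o1) => h0 h1; lra.
- move: (DF1 o0 o0 o1 o1) => h0; lra.
- move: (DF1 o0 o0 o1 o2) => h0; lra.
- move: (DF1 o0 o0 o1 o3) => h0; lra.
- move: (DF1 o0 o0 o0 o2) (DF2 o0 o0 o0 o2) => h0 h1; lra.
- move: (DF1 o0 o0 o1 o2) (DF2 o0 o0 o1 o2) => h0 h1; lra.
- move: (DF1 o0 o0 o2 o2) => h0; lra.
- move: (DF1 o0 o0 o2 o3) => h0; lra.
- move: (DF1 o0 o0 o0 o3) (DF2 o0 o0 o0 o3) => h0 h1; lra.
- move: (DF1 o0 o0 o1 o3) (DF2 o0 o0 o1 o3) => h0 h1; lra.
- move: (DF1 o0 o0 o2 o3) (DF2 o0 o0 o2 o3) => h0 h1; lra.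
- move: (DF1 o0 o0 o3 o3) => h0; lra.
Qed.
Lemma E1_01 c d : Y o0 o1 c d = V1 o0 o1 c d.
Proof.
case: (ord4_cases c) => ->; case: (ord4_cases d) => ->; cbv beta iota delta [V1 Wp1 nat_of_ord].
- move: (DF1 o0 o0 o0 o1) (SY o0 o0 o0 o1) => h0 h1; lra.
- by [].
- by [].
- by [].
- move: (DF2 o0 o1 o0 o1) => h0; lra.
- move: (DF2 o0 o1 o1 o1) => h0; lra.
- by [].
- by [].
- move: (DF2 o0 o1 o0 o2) => h0; lra.
- move: (DF2 o0 o1 o1 o2) => h0; lra.
- move: (DF2 o0 o1 o2 o2) => h0; lra.
- by [].
- move: (DF2 o0 o1 o0 o3) => h0; lra.
- move: (DF2 o0 o1 o1 o3) => h0; lra.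
- move: (DF2 o0 o1 o2 o3) => h0; lra.
- move: (DF2 o0 o1 o3 o3) => h0; lra.
Qed.
Lemma E1_02 c d : Y o0 o2 c d = V1 o0 o2 c d.
Proof.
case: (ord4_cases c) => ->; case: (ord4_cases d) => ->; cbv beta iota delta [V1 Wp1 nat_of_ord].
- move: (DF1 o0 o0 o0 o2) (SY o0 o0 o0 o2) => h0 h1; lra.
- move: (SY o0 o1 o0 o2) => h0; lra.
- by [].
- by [].
- move: (SY o0 o1 o0 o2) (DF2 o0 o2 o0 o1) => h0 h1; lra.
- move: (DF2 o0 o2 o1 o1) => h0; lra.
- by [].
- by [].
- move: (DF2 o0 o2 o0 o2) => h0; lra.
- move: (DF2 o0 o2 o1 o2) => h0; lra.
- move: (DF2 o0 o2 o2 o2) => h0; lra.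
- move: (DF1 o0 o0 o0 o3) (DF1 o0 o1 o1 o3) (DF1 o0 o2 o2 o3) (DF1 o0 o3 o3 o3) (DF2 o0 o3 o3 o3) (T1_2 o0 o3) => h0 h1 h2 h3 h4 h5; lra.
- move: (DF2 o0 o2 o0 o3) => h0; lra.
- move: (DF2 o0 o2 o1 o3) => h0; lra.
- move: (DF1 o0 o0 o0 o3) (DF1 o0 o1 o1 o3) (DF1 o0 o2 o2 o3) (DF2 o0 o2 o2 o3) (DF1 o0 o3 o3 o3) (DF2 o0 o3 o3 o3) (T1_2 o0 o3) => h0 h1 h2 h3 h4 h5 h6; lra.
- move: (DF2 o0 o2 o3 o3) => h0; lra.
Qed.
Lemma E1_03 c d : Y o0 o3 c d = V1 o0 o3 c d.
Proof.
case: (ord4_cases c) => ->; case: (ord4_cases d) => ->; cbv beta iota delta [V1 Wp1 nat_of_ord].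
- move: (DF1 o0 o0 o0 o3) (SY o0 o0 o0 o3) => h0 h1; lra.
- move: (SY o0 o1 o0 o3) => h0; lra.
- move: (SY o0 o2 o0 o3) => h0; lra.
- move: (DF1 o0 o0 o0 o0) (DF2 o0 o1 o0 o1) (DF1 o0 o1 o1 o0) (DF2 o0 o2 o0 o2) (DF1 o0 o2 o2 o0) (DF2 o0 o3 o0 o3) (DF1 o0 o3 o3 o0) (T1_2 o0 o0) => h0 h1 h2 h3 h4 h5 h6 h7; lra.
- move: (SY o0 o1 o0 o3) (DF2 o0 o3 o0 o1) => h0 h1; lra.
- move: (DF2 o0 o3 o1 o1) => h0; lra.
- move: (DF2 o0 o2 o1 o3) (BI o0 o1 o2 o3) => h0 h1; lra.
- move: (DF1 o0 o0 o0 o1) (DF1 o0 o1 o1 o1) (DF2 o0 o1 o1 o1) (DF2 o0 o2 o1 o2) (DF1 o0 o2 o2 o1) (DF2 o0 o3 o1 o3) (DF1 o0 o3 o3 o1) (T1_2 o0 o1) => h0 h1 h2 h3 h4 h5 h6 h7; lra.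
- move: (SY o0 o2 o0 o3) (DF2 o0 o3 o0 o2) => h0 h1; lra.
- move: (DF2 o0 o2 o1 o3) (DF2 o0 o3 o1 o2) (BI o0 o1 o2 o3) => h0 h1 h2; lra.
- move: (DF2 o0 o3 o2 o2) => h0; lra.
- move: (DF1 o0 o0 o0 o2) (DF1 o0 o1 o1 o2) (DF1 o0 o2 o2 o2) (DF2 o0 o2 o2 o2) (DF2 o0 o3 o2 o3) (DF1 o0 o3 o3 o2) (T1_2 o0 o2) => h0 h1 h2 h3 h4 h5 h6; lra.
- move: (DF1 o0 o0 o0 o0) (DF2 o0 o1 o0 o1) (DF1 o0 o1 o1 o0) (DF2 o0 o2 o0 o2) (DF1 o0 o2 o2 o0) (DF1 o0 o3 o3 o0) (T1_2 o0 o0) => h0 h1 h2 h3 h4 h5 h6; lra.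
- move: (DF1 o0 o0 o0 o1) (DF1 o0 o1 o1 o1) (DF2 o0 o1 o1 o1) (DF2 o0 o2 o1 o2) (DF1 o0 o2 o2 o1) (DF1 o0 o3 o3 o1) (T1_2 o0 o1) => h0 h1 h2 h3 h4 h5 h6; lra.
- move: (DF1 o0 o0 o0 o2) (DF1 o0 o1 o1 o2) (DF1 o0 o2 o2 o2) (DF2 o0 o2 o2 o2) (DF1 o0 o3 o3 o2) (T1_2 o0 o2) => h0 h1 h2 h3 h4 h5; lra.
- move: (DF2 o0 o3 o3 o3) => h0; lra.
Qed.
Lemma E1_10 c d : Y o1 o0 c d = V1 o1 o0 c d.
Proof.
case: (ord4_cases c) => ->; case: (ord4_cases d) => ->; cbv beta iota delta [V1 Wp1 nat_of_ord].
- move: (DF1 o0 o0 o0 o1) (DF2 o0 o0 o0 o1) (SY o0 o0 o1 o0) => h0 h1 h2; lra.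
- move: (DF1 o0 o1 o0 o1) => h0; lra.
- move: (DF1 o0 o1 o0 o2) => h0; lra.
- move: (DF1 o0 o1 o0 o3) => h0; lra.
- move: (DF2 o0 o1 o0 o1) (DF1 o0 o1 o1 o0) => h0 h1; lra.
- move: (DF1 o0 o1 o1 o1) (DF2 o0 o1 o1 o1) => h0 h1; lra.
- move: (DF1 o0 o1 o1 o2) => h0; lra.
- move: (DF1 o0 o1 o1 o3) => h0; lra.
- move: (DF2 o0 o1 o0 o2) (DF1 o0 o1 o2 o0) => h0 h1; lra.
- move: (DF2 o0 o1 o1 o2) (DF1 o0 o1 o2 o1) => h0 h1; lra.
- move: (DF1 o0 o1 o2 o2) (DF2 o0 o1 o2 o2) => h0 h1; lra.
- move: (DF1 o0 o1 o2 o3) => h0; lra.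
- move: (DF2 o0 o1 o0 o3) (DF1 o0 o1 o3 o0) => h0 h1; lra.
- move: (DF2 o0 o1 o1 o3) (DF1 o0 o1 o3 o1) => h0 h1; lra.
- move: (DF2 o0 o1 o2 o3) (DF1 o0 o1 o3 o2) => h0 h1; lra.
- move: (DF1 o0 o1 o3 o3) (DF2 o0 o1 o3 o3) => h0 h1; lra.
Qed.
Lemma E1_11 c d : Y o1 o1 c d = V1 o1 o1 c d.
Proof.
case: (ord4_cases c) => ->; case: (ord4_cases d) => ->; cbv beta iota delta [V1 Wp1 nat_of_ord].
- move: (DF1 o0 o0 o1 o1) (SY o0 o0 o1 o1) => h0 h1; lra.
- move: (DF2 o0 o1 o1 o1) (SY o0 o1 o1 o1) => h0 h1; lra.
- move: (DF2 o0 o2 o1 o1) (SY o0 o2 o1 o1) => h0 h1; lra.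
- move: (DF2 o0 o3 o1 o1) (SY o0 o3 o1 o1) => h0 h1; lra.
- move: (DF1 o0 o1 o1 o1) (DF2 o0 o1 o1 o1) (SY o1 o0 o1 o1) => h0 h1 h2; lra.
- move: (DF1 o1 o1 o1 o1) => h0; lra.
- move: (DF1 o1 o1 o1 o2) => h0; lra.
- move: (DF1 o1 o1 o1 o3) => h0; lra.
- move: (DF2 o0 o2 o1 o1) (SY o0 o2 o1 o1) (DF2 o1 o1 o0 o2) => h0 h1 h2; lra.
- move: (DF1 o1 o1 o1 o2) (DF2 o1 o1 o1 o2) => h0 h1; lra.
- move: (DF1 o1 o1 o2 o2) => h0; lra.
- move: (DF1 o1 o1 o2 o3) => h0; lra.
- move: (DF2 o0 o3 o1 o1) (SY o0 o3 o1 o1) (DF2 o1 o1 o0 o3) => h0 h1 h2; lra.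
- move: (DF1 o1 o1 o1 o3) (DF2 o1 o1 o1 o3) => h0 h1; lra.
- move: (DF1 o1 o1 o2 o3) (DF2 o1 o1 o2 o3) => h0 h1; lra.
- move: (DF1 o1 o1 o3 o3) => h0; lra.
Qed.
Lemma E1_12 c d : Y o1 o2 c d = V1 o1 o2 c d.
Proof.
case: (ord4_cases c) => ->; case: (ord4_cases d) => ->; cbv beta iota delta [V1 Wp1 nat_of_ord].
- move: (DF1 o0 o0 o1 o2) (SY o0 o0 o1 o2) => h0 h1; lra.
- move: (SY o0 o1 o1 o2) => h0; lra.
- move: (SY o0 o2 o1 o2) => h0; lra.
- move: (DF2 o0 o2 o1 o3) (SY o0 o3 o1 o2) (BI o0 o1 o2 o3) => h0 h1 h2; lra.
- move: (DF1 o0 o1 o1 o2) (SY o1 o0 o1 o2) => h0 h1; lra.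
- move: (DF1 o1 o1 o1 o2) (SY o1 o1 o1 o2) => h0 h1; lra.
- move: (DF1 o0 o0 o0 o0) (DF2 o0 o1 o0 o1) (DF1 o0 o1 o1 o0) (DF2 o0 o2 o0 o2) (DF1 o0 o2 o2 o0) (DF2 o0 o3 o0 o3) (DF1 o0 o3 o3 o0) (DF1 o1 o1 o1 o1) (DF2 o1 o2 o1 o2) (DF1 o1 o2 o2 o1) (DF2 o1 o3 o1 o3) (DF1 o1 o3 o3 o1) (DF1 o2 o2 o2 o2) (DF2 o2 o3 o2 o3) (DF1 o2 o3 o3 o2) (DF1 o3 o3 o3 o3) (T1_2 o0 o0) (T1_2 o1 o1) (T1_2 o2 o2) (T1_2 o3 o3) => h0 h1 h2 h3 h4 h5 h6 h7 h8 h9 h10 h11 h12 h13 h14 h15 h16 h17 h18 h19; lra.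
- move: (DF1 o2 o2 o2 o3) (DF1 o2 o3 o3 o3) (DF2 o2 o3 o3 o3) (T1_2 o2 o3) => h0 h1 h2 h3; lra.
- move: (SY o0 o2 o1 o2) (DF2 o1 o2 o0 o2) => h0 h1; lra.
- move: (DF1 o0 o0 o0 o0) (DF2 o0 o1 o0 o1) (DF1 o0 o1 o1 o0) (DF2 o0 o2 o0 o2) (DF1 o0 o2 o2 o0) (DF2 o0 o3 o0 o3) (DF1 o0 o3 o3 o0) (DF1 o1 o1 o1 o1) (DF2 o1 o2 o1 o2) (DF1 o1 o2 o2 o1) (DF2 o1 o3 o1 o3) (DF1 o1 o3 o3 o1) (DF1 o2 o2 o2 o2) (DF2 o2 o3 o2 o3) (DF1 o2 o3 o3 o2) (DF1 o3 o3 o3 o3) (T1_2 o0 o0) (T1_2 o1 o1) (T1_2 o2 o2) (T1_2 o3 o3) => h0 h1 h2 h3 h4 h5 h6 h7 h8 h9 h10 h11 h12 h13 h14 h15 h16 h17 h18 h19; lra.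
- move: (DF2 o1 o2 o2 o2) => h0; lra.
- move: (DF1 o1 o1 o1 o3) (DF1 o1 o2 o2 o3) (DF1 o1 o3 o3 o3) (DF2 o1 o3 o3 o3) (T1_2 o1 o3) => h0 h1 h2 h3 h4; lra.
- move: (DF2 o0 o2 o1 o3) (SY o0 o3 o1 o2) (DF2 o1 o2 o0 o3) (BI o0 o1 o2 o3) => h0 h1 h2 h3; lra.
- move: (DF2 o1 o2 o1 o3) (DF1 o2 o2 o2 o3) (DF1 o2 o3 o3 o3) (DF2 o2 o3 o3 o3) (T1_2 o2 o3) => h0 h1 h2 h3 h4; lra.
- move: (DF1 o1 o1 o1 o3) (DF1 o1 o2 o2 o3) (DF2 o1 o2 o2 o3) (DF1 o1 o3 o3 o3) (DF2 o1 o3 o3 o3) (T1_2 o1 o3) => h0 h1 h2 h3 h4 h5; lra.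
- move: (DF2 o1 o2 o3 o3) => h0; lra.
Qed.
Lemma E1_13 c d : Y o1 o3 c d = V1 o1 o3 c d.
Proof.
case: (ord4_cases c) => ->; case: (ord4_cases d) => ->; cbv beta iota delta [V1 Wp1 nat_of_ord].
- move: (DF1 o0 o0 o1 o3) (SY o0 o0 o1 o3) => h0 h1; lra.
- move: (SY o0 o1 o1 o3) => h0; lra.
- move: (SY o0 o2 o1 o3) => h0; lra.
- move: (DF1 o0 o0 o0 o1) (DF1 o0 o1 o1 o1) (DF2 o0 o1 o1 o1) (DF2 o0 o2 o1 o2) (DF1 o0 o2 o2 o1) (DF2 o0 o3 o1 o3) (SY o0 o3 o1 o3) (DF1 o0 o3 o3 o1) (T1_2 o0 o1) => h0 h1 h2 h3 h4 h5 h6 h7 h8; lra.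
- move: (DF1 o0 o1 o1 o3) (SY o1 o0 o1 o3) => h0 h1; lra.
- move: (DF1 o1 o1 o1 o3) (SY o1 o1 o1 o3) => h0 h1; lra.
- move: (SY o1 o2 o1 o3) (DF1 o2 o2 o2 o3) (DF1 o2 o3 o3 o3) (DF2 o2 o3 o3 o3) (T1_2 o2 o3) => h0 h1 h2 h3 h4; lra.
- move: (DF1 o0 o0 o0 o0) (DF2 o0 o1 o0 o1) (DF1 o0 o1 o1 o0) (DF2 o0 o2 o0 o2) (DF1 o0 o2 o2 o0) (DF2 o0 o3 o0 o3) (DF1 o0 o3 o3 o0) (DF1 o1 o1 o1 o1) (DF2 o1 o2 o1 o2) (DF1 o1 o2 o2 o1) (DF2 o1 o3 o1 o3) (DF1 o1 o3 o3 o1) (DF1 o2 o2 o2 o2) (DF2 o2 o3 o2 o3) (DF1 o2 o3 o3 o2) (DF1 o3 o3 o3 o3) (T1_2 o0 o0) (T1_2 o1 o1) (T1_2 o2 o2) (T1_2 o3 o3) => h0 h1 h2 h3 h4 h5 h6 h7 h8 h9 h10 h11 h12 h13 h14 h15 h16 h17 h18 h19; lra.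
- move: (SY o0 o2 o1 o3) (DF2 o1 o3 o0 o2) => h0 h1; lra.
- move: (SY o1 o2 o1 o3) (DF2 o1 o3 o1 o2) (DF1 o2 o2 o2 o3) (DF1 o2 o3 o3 o3) (DF2 o2 o3 o3 o3) (T1_2 o2 o3) => h0 h1 h2 h3 h4 h5; lra.
- move: (DF2 o1 o3 o2 o2) => h0; lra.
- move: (DF1 o1 o1 o1 o2) (DF1 o1 o2 o2 o2) (DF2 o1 o2 o2 o2) (DF2 o1 o3 o2 o3) (DF1 o1 o3 o3 o2) (T1_2 o1 o2) => h0 h1 h2 h3 h4 h5; lra.
- move: (DF1 o0 o0 o0 o1) (DF1 o0 o1 o1 o1) (DF2 o0 o1 o1 o1) (DF2 o0 o2 o1 o2) (DF1 o0 o2 o2 o1) (DF2 o0 o3 o1 o3) (SY o0 o3 o1 o3) (DF1 o0 o3 o3 o1) (DF2 o1 o3 o0 o3) (T1_2 o0 o1) => h0 h1 h2 h3 h4 h5 h6 h7 h8 h9; lra.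
- move: (DF1 o0 o0 o0 o0) (DF2 o0 o1 o0 o1) (DF1 o0 o1 o1 o0) (DF2 o0 o2 o0 o2) (DF1 o0 o2 o2 o0) (DF2 o0 o3 o0 o3) (DF1 o0 o3 o3 o0) (DF1 o1 o1 o1 o1) (DF2 o1 o2 o1 o2) (DF1 o1 o2 o2 o1) (DF2 o1 o3 o1 o3) (DF1 o1 o3 o3 o1) (DF1 o2 o2 o2 o2) (DF2 o2 o3 o2 o3) (DF1 o2 o3 o3 o2) (DF1 o3 o3 o3 o3) (T1_2 o0 o0) (T1_2 o1 o1) (T1_2 o2 o2) (T1_2 o3 o3) => h0 h1 h2 h3 h4 h5 h6 h7 h8 h9 h10 h11 h12 h13 h14 h15 h16 h17 h18 h19; lra.
- move: (DF1 o1 o1 o1 o2) (DF1 o1 o2 o2 o2) (DF2 o1 o2 o2 o2) (DF1 o1 o3 o3 o2) (T1_2 o1 o2) => h0 h1 h2 h3 h4; lra.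
- move: (DF2 o1 o3 o3 o3) => h0; lra.
Qed.
Lemma E1_20 c d : Y o2 o0 c d = V1 o2 o0 c d.
Proof.
case: (ord4_cases c) => ->; case: (ord4_cases d) => ->; cbv beta iota delta [V1 Wp1 nat_of_ord].
- move: (DF1 o0 o0 o0 o2) (DF2 o0 o0 o0 o2) (SY o0 o0 o2 o0) => h0 h1 h2; lra.
- move: (DF2 o0 o1 o0 o2) (SY o0 o1 o2 o0) => h0 h1; lra.
- move: (DF1 o0 o2 o0 o2) => h0; lra.
- move: (DF1 o0 o2 o0 o3) => h0; lra.
- move: (SY o0 o1 o0 o2) (DF2 o0 o2 o0 o1) (DF1 o0 o2 o1 o0) => h0 h1 h2; lra.
- move: (DF1 o0 o2 o1 o1) (DF2 o0 o2 o1 o1) => h0 h1; lra.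
- move: (DF1 o0 o2 o1 o2) => h0; lra.
- move: (DF1 o0 o2 o1 o3) => h0; lra.
- move: (DF2 o0 o2 o0 o2) (DF1 o0 o2 o2 o0) => h0 h1; lra.
- move: (DF2 o0 o2 o1 o2) (DF1 o0 o2 o2 o1) => h0 h1; lra.
- move: (DF1 o0 o2 o2 o2) (DF2 o0 o2 o2 o2) => h0 h1; lra.
- move: (DF1 o0 o0 o0 o3) (DF1 o0 o1 o1 o3) (DF1 o0 o3 o3 o3) (DF2 o0 o3 o3 o3) (T1_2 o0 o3) => h0 h1 h2 h3 h4; lra.
- move: (DF2 o0 o2 o0 o3) (DF1 o0 o2 o3 o0) => h0 h1; lra.
- move: (DF2 o0 o2 o1 o3) (DF1 o0 o2 o3 o1) => h0 h1; lra.
- move: (DF1 o0 o0 o0 o3) (DF1 o0 o1 o1 o3) (DF1 o0 o2 o2 o3) (DF2 o0 o2 o2 o3) (DF1 o0 o2 o3 o2) (DF1 o0 o3 o3 o3) (DF2 o0 o3 o3 o3) (T1_2 o0 o3) => h0 h1 h2 h3 h4 h5 h6 h7; lra.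
- move: (DF1 o0 o2 o3 o3) (DF2 o0 o2 o3 o3) => h0 h1; lra.
Qed.
Lemma E1_21 c d : Y o2 o1 c d = V1 o2 o1 c d.
Proof.
case: (ord4_cases c) => ->; case: (ord4_cases d) => ->; cbv beta iota delta [V1 Wp1 nat_of_ord].
- move: (DF1 o0 o0 o1 o2) (DF2 o0 o0 o1 o2) (SY o0 o0 o2 o1) => h0 h1 h2; lra.
- move: (DF2 o0 o1 o1 o2) (SY o0 o1 o2 o1) => h0 h1; lra.
- move: (DF2 o0 o2 o1 o2) (SY o0 o2 o2 o1) => h0 h1; lra.
- move: (DF2 o0 o2 o1 o3) (DF2 o0 o3 o1 o2) (SY o0 o3 o2 o1) (BI o0 o1 o2 o3) => h0 h1 h2 h3; lra.
- move: (DF2 o0 o1 o1 o2) (DF1 o0 o1 o2 o1) (SY o1 o0 o2 o1) => h0 h1 h2; lra.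
- move: (DF1 o1 o1 o1 o2) (DF2 o1 o1 o1 o2) (SY o1 o1 o2 o1) => h0 h1 h2; lra.
- move: (DF1 o0 o0 o0 o0) (DF2 o0 o1 o0 o1) (DF1 o0 o1 o1 o0) (DF2 o0 o2 o0 o2) (DF1 o0 o2 o2 o0) (DF2 o0 o3 o0 o3) (DF1 o0 o3 o3 o0) (DF1 o1 o1 o1 o1) (DF1 o1 o2 o1 o2) (DF2 o1 o2 o1 o2) (DF1 o1 o2 o2 o1) (DF2 o1 o3 o1 o3) (DF1 o1 o3 o3 o1) (DF1 o2 o2 o2 o2) (DF2 o2 o3 o2 o3) (DF1 o2 o3 o3 o2) (DF1 o3 o3 o3 o3) (T1_2 o0 o0) (T1_2 o1 o1) (T1_2 o2 o2) (T1_2 o3 o3) => h0 h1 h2 h3 h4 h5 h6 h7 h8 h9 h10 h11 h12 h13 h14 h15 h16 h17 h18 h19 h20; lra.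
- move: (DF1 o1 o2 o1 o3) (DF1 o2 o2 o2 o3) (DF1 o2 o3 o3 o3) (DF2 o2 o3 o3 o3) (T1_2 o2 o3) => h0 h1 h2 h3 h4; lra.
- move: (SY o0 o2 o1 o2) (DF2 o1 o2 o0 o2) (DF1 o1 o2 o2 o0) => h0 h1 h2; lra.
- move: (DF1 o0 o0 o0 o0) (DF2 o0 o1 o0 o1) (DF1 o0 o1 o1 o0) (DF2 o0 o2 o0 o2) (DF1 o0 o2 o2 o0) (DF2 o0 o3 o0 o3) (DF1 o0 o3 o3 o0) (DF1 o1 o1 o1 o1) (DF2 o1 o2 o1 o2) (DF1 o1 o2 o2 o1) (DF2 o1 o3 o1 o3) (DF1 o1 o3 o3 o1) (DF1 o2 o2 o2 o2) (DF2 o2 o3 o2 o3) (DF1 o2 o3 o3 o2) (DF1 o3 o3 o3 o3) (T1_2 o0 o0) (T1_2 o1 o1) (T1_2 o2 o2) (T1_2 o3 o3) => h0 h1 h2 h3 h4 h5 h6 h7 h8 h9 h10 h11 h12 h13 h14 h15 h16 h17 h18 h19; lra.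
- move: (DF1 o1 o2 o2 o2) (DF2 o1 o2 o2 o2) => h0 h1; lra.
- move: (DF1 o1 o1 o1 o3) (DF1 o1 o3 o3 o3) (DF2 o1 o3 o3 o3) (T1_2 o1 o3) => h0 h1 h2 h3; lra.
- move: (DF2 o0 o2 o1 o3) (SY o0 o3 o1 o2) (DF2 o1 o2 o0 o3) (DF1 o1 o2 o3 o0) (BI o0 o1 o2 o3) => h0 h1 h2 h3 h4; lra.
- move: (DF2 o1 o2 o1 o3) (DF1 o1 o2 o3 o1) (DF1 o2 o2 o2 o3) (DF1 o2 o3 o3 o3) (DF2 o2 o3 o3 o3) (T1_2 o2 o3) => h0 h1 h2 h3 h4 h5; lra.
- move: (DF1 o1 o1 o1 o3) (DF1 o1 o2 o2 o3) (DF2 o1 o2 o2 o3) (DF1 o1 o2 o3 o2) (DF1 o1 o3 o3 o3) (DF2 o1 o3 o3 o3) (T1_2 o1 o3) => h0 h1 h2 h3 h4 h5 h6; lra.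
- move: (DF1 o1 o2 o3 o3) (DF2 o1 o2 o3 o3) => h0 h1; lra.
Qed.
Lemma E1_22 c d : Y o2 o2 c d = V1 o2 o2 c d.
Proof.
case: (ord4_cases c) => ->; case: (ord4_cases d) => ->; cbv beta iota delta [V1 Wp1 nat_of_ord].
- move: (DF1 o0 o0 o2 o2) (SY o0 o0 o2 o2) => h0 h1; lra.
- move: (DF2 o0 o1 o2 o2) (SY o0 o1 o2 o2) => h0 h1; lra.
- move: (DF2 o0 o2 o2 o2) (SY o0 o2 o2 o2) => h0 h1; lra.
- move: (DF2 o0 o3 o2 o2) (SY o0 o3 o2 o2) => h0 h1; lra.
- move: (DF1 o0 o1 o2 o2) (DF2 o0 o1 o2 o2) (SY o1 o0 o2 o2) => h0 h1 h2; lra.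
- move: (DF1 o1 o1 o2 o2) (SY o1 o1 o2 o2) => h0 h1; lra.
- move: (DF2 o1 o2 o2 o2) (SY o1 o2 o2 o2) => h0 h1; lra.
- move: (DF2 o1 o3 o2 o2) (SY o1 o3 o2 o2) => h0 h1; lra.
- move: (DF1 o0 o2 o2 o2) (DF2 o0 o2 o2 o2) (SY o2 o0 o2 o2) => h0 h1 h2; lra.
- move: (DF1 o1 o2 o2 o2) (DF2 o1 o2 o2 o2) (SY o2 o1 o2 o2) => h0 h1 h2; lra.
- move: (DF1 o2 o2 o2 o2) => h0; lra.
- move: (DF1 o2 o2 o2 o3) => h0; lra.
- move: (DF2 o0 o3 o2 o2) (SY o0 o3 o2 o2) (DF2 o2 o2 o0 o3) => h0 h1 h2; lra.
- move: (DF2 o1 o3 o2 o2) (SY o1 o3 o2 o2) (DF2 o2 o2 o1 o3) => h0 h1 h2; lra.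
- move: (DF1 o2 o2 o2 o3) (DF2 o2 o2 o2 o3) => h0 h1; lra.
- move: (DF1 o2 o2 o3 o3) => h0; lra.
Qed.
Lemma E1_23 c d : Y o2 o3 c d = V1 o2 o3 c d.
Proof.
case: (ord4_cases c) => ->; case: (ord4_cases d) => ->; cbv beta iota delta [V1 Wp1 nat_of_ord].
- move: (DF1 o0 o0 o2 o3) (SY o0 o0 o2 o3) => h0 h1; lra.
- move: (SY o0 o1 o2 o3) => h0; lra.
- move: (DF1 o0 o0 o0 o3) (DF1 o0 o1 o1 o3) (DF1 o0 o2 o2 o3) (SY o0 o2 o2 o3) (DF1 o0 o3 o3 o3) (DF2 o0 o3 o3 o3) (T1_2 o0 o3) => h0 h1 h2 h3 h4 h5 h6; lra.
- move: (DF1 o0 o0 o0 o2) (DF1 o0 o1 o1 o2) (DF1 o0 o2 o2 o2) (DF2 o0 o2 o2 o2) (DF2 o0 o3 o2 o3) (SY o0 o3 o2 o3) (DF1 o0 o3 o3 o2) (T1_2 o0 o2) => h0 h1 h2 h3 h4 h5 h6 h7; lra.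
- move: (DF1 o0 o1 o2 o3) (SY o1 o0 o2 o3) => h0 h1; lra.
- move: (DF1 o1 o1 o2 o3) (SY o1 o1 o2 o3) => h0 h1; lra.
- move: (DF1 o1 o1 o1 o3) (DF1 o1 o2 o2 o3) (SY o1 o2 o2 o3) (DF1 o1 o3 o3 o3) (DF2 o1 o3 o3 o3) (T1_2 o1 o3) => h0 h1 h2 h3 h4 h5; lra.
- move: (DF1 o1 o1 o1 o2) (DF1 o1 o2 o2 o2) (DF2 o1 o2 o2 o2) (DF2 o1 o3 o2 o3) (SY o1 o3 o2 o3) (DF1 o1 o3 o3 o2) (T1_2 o1 o2) => h0 h1 h2 h3 h4 h5 h6; lra.
- move: (DF1 o0 o0 o0 o3) (DF1 o0 o1 o1 o3) (DF1 o0 o3 o3 o3) (DF2 o0 o3 o3 o3) (SY o2 o0 o2 o3) (T1_2 o0 o3) => h0 h1 h2 h3 h4 h5; lra.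
- move: (DF1 o1 o1 o1 o3) (DF1 o1 o3 o3 o3) (DF2 o1 o3 o3 o3) (SY o2 o1 o2 o3) (T1_2 o1 o3) => h0 h1 h2 h3 h4; lra.
- move: (DF1 o2 o2 o2 o3) (SY o2 o2 o2 o3) => h0 h1; lra.
- move: (DF1 o0 o0 o0 o0) (DF2 o0 o1 o0 o1) (DF1 o0 o1 o1 o0) (DF2 o0 o2 o0 o2) (DF1 o0 o2 o2 o0) (DF2 o0 o3 o0 o3) (DF1 o0 o3 o3 o0) (DF1 o1 o1 o1 o1) (DF2 o1 o2 o1 o2) (DF1 o1 o2 o2 o1) (DF2 o1 o3 o1 o3) (DF1 o1 o3 o3 o1) (DF1 o2 o2 o2 o2) (DF2 o2 o3 o2 o3) (DF1 o2 o3 o3 o2) (DF1 o3 o3 o3 o3) (T1_2 o0 o0) (T1_2 o1 o1) (T1_2 o2 o2) (T1_2 o3 o3) => h0 h1 h2 h3 h4 h5 h6 h7 h8 h9 h10 h11 h12 h13 h14 h15 h16 h17 h18 h19; lra.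
- move: (DF1 o0 o0 o0 o2) (DF1 o0 o1 o1 o2) (DF1 o0 o2 o2 o2) (DF2 o0 o2 o2 o2) (DF2 o0 o3 o2 o3) (SY o0 o3 o2 o3) (DF1 o0 o3 o3 o2) (DF2 o2 o3 o0 o3) (T1_2 o0 o2) => h0 h1 h2 h3 h4 h5 h6 h7 h8; lra.
- move: (DF1 o1 o1 o1 o2) (DF1 o1 o2 o2 o2) (DF2 o1 o2 o2 o2) (DF2 o1 o3 o2 o3) (SY o1 o3 o2 o3) (DF1 o1 o3 o3 o2) (DF2 o2 o3 o1 o3) (T1_2 o1 o2) => h0 h1 h2 h3 h4 h5 h6 h7; lra.
- move: (DF1 o0 o0 o0 o0) (DF2 o0 o1 o0 o1) (DF1 o0 o1 o1 o0) (DF2 o0 o2 o0 o2) (DF1 o0 o2 o2 o0) (DF2 o0 o3 o0 o3) (DF1 o0 o3 o3 o0) (DF1 o1 o1 o1 o1) (DF2 o1 o2 o1 o2) (DF1 o1 o2 o2 o1) (DF2 o1 o3 o1 o3) (DF1 o1 o3 o3 o1) (DF1 o2 o2 o2 o2) (DF2 o2 o3 o2 o3) (DF1 o2 o3 o3 o2) (DF1 o3 o3 o3 o3) (T1_2 o0 o0) (T1_2 o1 o1) (T1_2 o2 o2) (T1_2 o3 o3) => h0 h1 h2 h3 h4 h5 h6 h7 h8 h9 h10 h11 h12 h13 h14 h15 h16 h17 h18 h19; lra.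
- move: (DF2 o2 o3 o3 o3) => h0; lra.
Qed.
Lemma E1_30 c d : Y o3 o0 c d = V1 o3 o0 c d.
Proof.
case: (ord4_cases c) => ->; case: (ord4_cases d) => ->; cbv beta iota delta [V1 Wp1 nat_of_ord].
- move: (DF1 o0 o0 o0 o3) (DF2 o0 o0 o0 o3) (SY o0 o0 o3 o0) => h0 h1 h2; lra.
- move: (DF2 o0 o1 o0 o3) (SY o0 o1 o3 o0) => h0 h1; lra.
- move: (DF2 o0 o2 o0 o3) (SY o0 o2 o3 o0) => h0 h1; lra.
- move: (DF1 o0 o0 o0 o0) (DF2 o0 o1 o0 o1) (DF1 o0 o1 o1 o0) (DF2 o0 o2 o0 o2) (DF1 o0 o2 o2 o0) (DF1 o0 o3 o0 o3) (DF2 o0 o3 o0 o3) (DF1 o0 o3 o3 o0) (T1_2 o0 o0) => h0 h1 h2 h3 h4 h5 h6 h7 h8; lra.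
- move: (SY o0 o1 o0 o3) (DF2 o0 o3 o0 o1) (DF1 o0 o3 o1 o0) => h0 h1 h2; lra.
- move: (DF1 o0 o3 o1 o1) (DF2 o0 o3 o1 o1) => h0 h1; lra.
- move: (DF2 o0 o2 o1 o3) (DF1 o0 o3 o1 o2) (BI o0 o1 o2 o3) => h0 h1 h2; lra.
- move: (DF1 o0 o0 o0 o1) (DF1 o0 o1 o1 o1) (DF2 o0 o1 o1 o1) (DF2 o0 o2 o1 o2) (DF1 o0 o2 o2 o1) (DF1 o0 o3 o1 o3) (DF2 o0 o3 o1 o3) (DF1 o0 o3 o3 o1) (T1_2 o0 o1) => h0 h1 h2 h3 h4 h5 h6 h7 h8; lra.
- move: (SY o0 o2 o0 o3) (DF2 o0 o3 o0 o2) (DF1 o0 o3 o2 o0) => h0 h1 h2; lra.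
- move: (DF2 o0 o2 o1 o3) (DF2 o0 o3 o1 o2) (DF1 o0 o3 o2 o1) (BI o0 o1 o2 o3) => h0 h1 h2 h3; lra.
- move: (DF1 o0 o3 o2 o2) (DF2 o0 o3 o2 o2) => h0 h1; lra.
- move: (DF1 o0 o0 o0 o2) (DF1 o0 o1 o1 o2) (DF1 o0 o2 o2 o2) (DF2 o0 o2 o2 o2) (DF1 o0 o3 o2 o3) (DF2 o0 o3 o2 o3) (DF1 o0 o3 o3 o2) (T1_2 o0 o2) => h0 h1 h2 h3 h4 h5 h6 h7; lra.
- move: (DF1 o0 o0 o0 o0) (DF2 o0 o1 o0 o1) (DF1 o0 o1 o1 o0) (DF2 o0 o2 o0 o2) (DF1 o0 o2 o2 o0) (T1_2 o0 o0) => h0 h1 h2 h3 h4 h5; lra.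
- move: (DF1 o0 o0 o0 o1) (DF1 o0 o1 o1 o1) (DF2 o0 o1 o1 o1) (DF2 o0 o2 o1 o2) (DF1 o0 o2 o2 o1) (T1_2 o0 o1) => h0 h1 h2 h3 h4 h5; lra.
- move: (DF1 o0 o0 o0 o2) (DF1 o0 o1 o1 o2) (DF1 o0 o2 o2 o2) (DF2 o0 o2 o2 o2) (T1_2 o0 o2) => h0 h1 h2 h3 h4; lra.
- move: (DF1 o0 o3 o3 o3) (DF2 o0 o3 o3 o3) => h0 h1; lra.
Qed.
Lemma E1_31 c d : Y o3 o1 c d = V1 o3 o1 c d.
Proof.
case: (ord4_cases c) => ->; case: (ord4_cases d) => ->; cbv beta iota delta [V1 Wp1 nat_of_ord].
- move: (DF1 o0 o0 o1 o3) (DF2 o0 o0 o1 o3) (SY o0 o0 o3 o1) => h0 h1 h2; lra.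
- move: (DF2 o0 o1 o1 o3) (SY o0 o1 o3 o1) => h0 h1; lra.
- move: (DF2 o0 o2 o1 o3) (SY o0 o2 o3 o1) => h0 h1; lra.
- move: (DF1 o0 o0 o0 o1) (DF1 o0 o1 o1 o1) (DF2 o0 o1 o1 o1) (DF2 o0 o2 o1 o2) (DF1 o0 o2 o2 o1) (DF1 o0 o3 o3 o1) (SY o0 o3 o3 o1) (T1_2 o0 o1) => h0 h1 h2 h3 h4 h5 h6 h7; lra.
- move: (DF2 o0 o1 o1 o3) (DF1 o0 o1 o3 o1) (SY o1 o0 o3 o1) => h0 h1 h2; lra.
- move: (DF1 o1 o1 o1 o3) (DF2 o1 o1 o1 o3) (SY o1 o1 o3 o1) => h0 h1 h2; lra.
- move: (DF2 o1 o2 o1 o3) (SY o1 o2 o3 o1) (DF1 o2 o2 o2 o3) (DF1 o2 o3 o3 o3) (DF2 o2 o3 o3 o3) (T1_2 o2 o3) => h0 h1 h2 h3 h4 h5; lra.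
- move: (DF1 o0 o0 o0 o0) (DF2 o0 o1 o0 o1) (DF1 o0 o1 o1 o0) (DF2 o0 o2 o0 o2) (DF1 o0 o2 o2 o0) (DF2 o0 o3 o0 o3) (DF1 o0 o3 o3 o0) (DF1 o1 o1 o1 o1) (DF2 o1 o2 o1 o2) (DF1 o1 o2 o2 o1) (DF1 o1 o3 o1 o3) (DF2 o1 o3 o1 o3) (DF1 o1 o3 o3 o1) (DF1 o2 o2 o2 o2) (DF2 o2 o3 o2 o3) (DF1 o2 o3 o3 o2) (DF1 o3 o3 o3 o3) (T1_2 o0 o0) (T1_2 o1 o1) (T1_2 o2 o2) (T1_2 o3 o3) => h0 h1 h2 h3 h4 h5 h6 h7 h8 h9 h10 h11 h12 h13 h14 h15 h16 h17 h18 h19 h20; lra.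
- move: (SY o0 o2 o1 o3) (DF2 o1 o3 o0 o2) (DF1 o1 o3 o2 o0) => h0 h1 h2; lra.
- move: (SY o1 o2 o1 o3) (DF2 o1 o3 o1 o2) (DF1 o1 o3 o2 o1) (DF1 o2 o2 o2 o3) (DF1 o2 o3 o3 o3) (DF2 o2 o3 o3 o3) (T1_2 o2 o3) => h0 h1 h2 h3 h4 h5 h6; lra.
- move: (DF1 o1 o3 o2 o2) (DF2 o1 o3 o2 o2) => h0 h1; lra.
- move: (DF1 o1 o1 o1 o2) (DF1 o1 o2 o2 o2) (DF2 o1 o2 o2 o2) (DF1 o1 o3 o2 o3) (DF2 o1 o3 o2 o3) (DF1 o1 o3 o3 o2) (T1_2 o1 o2) => h0 h1 h2 h3 h4 h5 h6; lra.
- move: (DF1 o0 o0 o0 o1) (DF1 o0 o1 o1 o1) (DF2 o0 o1 o1 o1) (DF2 o0 o2 o1 o2) (DF1 o0 o2 o2 o1) (DF2 o0 o3 o1 o3) (SY o0 o3 o1 o3) (DF1 o0 o3 o3 o1) (DF2 o1 o3 o0 o3) (DF1 o1 o3 o3 o0) (T1_2 o0 o1) => h0 h1 h2 h3 h4 h5 h6 h7 h8 h9 h10; lra.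
- move: (DF1 o0 o0 o0 o0) (DF2 o0 o1 o0 o1) (DF1 o0 o1 o1 o0) (DF2 o0 o2 o0 o2) (DF1 o0 o2 o2 o0) (DF2 o0 o3 o0 o3) (DF1 o0 o3 o3 o0) (DF1 o1 o1 o1 o1) (DF2 o1 o2 o1 o2) (DF1 o1 o2 o2 o1) (DF2 o1 o3 o1 o3) (DF1 o1 o3 o3 o1) (DF1 o2 o2 o2 o2) (DF2 o2 o3 o2 o3) (DF1 o2 o3 o3 o2) (DF1 o3 o3 o3 o3) (T1_2 o0 o0) (T1_2 o1 o1) (T1_2 o2 o2) (T1_2 o3 o3) => h0 h1 h2 h3 h4 h5 h6 h7 h8 h9 h10 h11 h12 h13 h14 h15 h16 h17 h18 h19; lra.
- move: (DF1 o1 o1 o1 o2) (DF1 o1 o2 o2 o2) (DF2 o1 o2 o2 o2) (T1_2 o1 o2) => h0 h1 h2 h3; lra.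
- move: (DF1 o1 o3 o3 o3) (DF2 o1 o3 o3 o3) => h0 h1; lra.
Qed.
Lemma E1_32 c d : Y o3 o2 c d = V1 o3 o2 c d.
Proof.
case: (ord4_cases c) => ->; case: (ord4_cases d) => ->; cbv beta iota delta [V1 Wp1 nat_of_ord].
- move: (DF1 o0 o0 o2 o3) (DF2 o0 o0 o2 o3) (SY o0 o0 o3 o2) => h0 h1 h2; lra.
- move: (DF2 o0 o1 o2 o3) (SY o0 o1 o3 o2) => h0 h1; lra.
- move: (DF1 o0 o0 o0 o3) (DF1 o0 o1 o1 o3) (DF1 o0 o2 o2 o3) (DF2 o0 o2 o2 o3) (SY o0 o2 o3 o2) (DF1 o0 o3 o3 o3) (DF2 o0 o3 o3 o3) (T1_2 o0 o3) => h0 h1 h2 h3 h4 h5 h6 h7; lra.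
- move: (DF1 o0 o0 o0 o2) (DF1 o0 o1 o1 o2) (DF1 o0 o2 o2 o2) (DF2 o0 o2 o2 o2) (DF1 o0 o3 o3 o2) (SY o0 o3 o3 o2) (T1_2 o0 o2) => h0 h1 h2 h3 h4 h5 h6; lra.
- move: (DF2 o0 o1 o2 o3) (DF1 o0 o1 o3 o2) (SY o1 o0 o3 o2) => h0 h1 h2; lra.
- move: (DF1 o1 o1 o2 o3) (DF2 o1 o1 o2 o3) (SY o1 o1 o3 o2) => h0 h1 h2; lra.
- move: (DF1 o1 o1 o1 o3) (DF1 o1 o2 o2 o3) (DF2 o1 o2 o2 o3) (SY o1 o2 o3 o2) (DF1 o1 o3 o3 o3) (DF2 o1 o3 o3 o3) (T1_2 o1 o3) => h0 h1 h2 h3 h4 h5 h6; lra.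
- move: (DF1 o1 o1 o1 o2) (DF1 o1 o2 o2 o2) (DF2 o1 o2 o2 o2) (DF1 o1 o3 o3 o2) (SY o1 o3 o3 o2) (T1_2 o1 o2) => h0 h1 h2 h3 h4 h5; lra.
- move: (DF1 o0 o0 o0 o3) (DF1 o0 o1 o1 o3) (DF1 o0 o2 o2 o3) (DF2 o0 o2 o2 o3) (DF1 o0 o2 o3 o2) (DF1 o0 o3 o3 o3) (DF2 o0 o3 o3 o3) (SY o2 o0 o3 o2) (T1_2 o0 o3) => h0 h1 h2 h3 h4 h5 h6 h7 h8; lra.
- move: (DF1 o1 o1 o1 o3) (DF1 o1 o2 o2 o3) (DF2 o1 o2 o2 o3) (DF1 o1 o2 o3 o2) (DF1 o1 o3 o3 o3) (DF2 o1 o3 o3 o3) (SY o2 o1 o3 o2) (T1_2 o1 o3) => h0 h1 h2 h3 h4 h5 h6 h7; lra.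
- move: (DF1 o2 o2 o2 o3) (DF2 o2 o2 o2 o3) (SY o2 o2 o3 o2) => h0 h1 h2; lra.
- move: (DF1 o0 o0 o0 o0) (DF2 o0 o1 o0 o1) (DF1 o0 o1 o1 o0) (DF2 o0 o2 o0 o2) (DF1 o0 o2 o2 o0) (DF2 o0 o3 o0 o3) (DF1 o0 o3 o3 o0) (DF1 o1 o1 o1 o1) (DF2 o1 o2 o1 o2) (DF1 o1 o2 o2 o1) (DF2 o1 o3 o1 o3) (DF1 o1 o3 o3 o1) (DF1 o2 o2 o2 o2) (DF1 o2 o3 o2 o3) (DF2 o2 o3 o2 o3) (DF1 o2 o3 o3 o2) (DF1 o3 o3 o3 o3) (T1_2 o0 o0) (T1_2 o1 o1) (T1_2 o2 o2) (T1_2 o3 o3) => h0 h1 h2 h3 h4 h5 h6 h7 h8 h9 h10 h11 h12 h13 h14 h15 h16 h17 h18 h19 h20; lra.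
- move: (DF1 o0 o0 o0 o2) (DF1 o0 o1 o1 o2) (DF1 o0 o2 o2 o2) (DF2 o0 o2 o2 o2) (DF2 o0 o3 o2 o3) (SY o0 o3 o2 o3) (DF1 o0 o3 o3 o2) (DF2 o2 o3 o0 o3) (DF1 o2 o3 o3 o0) (T1_2 o0 o2) => h0 h1 h2 h3 h4 h5 h6 h7 h8 h9; lra.
- move: (DF1 o1 o1 o1 o2) (DF1 o1 o2 o2 o2) (DF2 o1 o2 o2 o2) (DF2 o1 o3 o2 o3) (SY o1 o3 o2 o3) (DF1 o1 o3 o3 o2) (DF2 o2 o3 o1 o3) (DF1 o2 o3 o3 o1) (T1_2 o1 o2) => h0 h1 h2 h3 h4 h5 h6 h7 h8; lra.
- move: (DF1 o0 o0 o0 o0) (DF2 o0 o1 o0 o1) (DF1 o0 o1 o1 o0) (DF2 o0 o2 o0 o2) (DF1 o0 o2 o2 o0) (DF2 o0 o3 o0 o3) (DF1 o0 o3 o3 o0) (DF1 o1 o1 o1 o1) (DF2 o1 o2 o1 o2) (DF1 o1 o2 o2 o1) (DF2 o1 o3 o1 o3) (DF1 o1 o3 o3 o1) (DF1 o2 o2 o2 o2) (DF2 o2 o3 o2 o3) (DF1 o2 o3 o3 o2) (DF1 o3 o3 o3 o3) (T1_2 o0 o0) (T1_2 o1 o1) (T1_2 o2 o2) (T1_2 o3 o3) => h0 h1 h2 h3 h4 h5 h6 h7 h8 h9 h10 h11 h12 h13 h14 h15 h16 h17 h18 h19; lra.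
- move: (DF1 o2 o3 o3 o3) (DF2 o2 o3 o3 o3) => h0 h1; lra.
Qed.
Lemma E1_33 c d : Y o3 o3 c d = V1 o3 o3 c d.
Proof.
case: (ord4_cases c) => ->; case: (ord4_cases d) => ->; cbv beta iota delta [V1 Wp1 nat_of_ord].
- move: (DF1 o0 o0 o3 o3) (SY o0 o0 o3 o3) => h0 h1; lra.
- move: (DF2 o0 o1 o3 o3) (SY o0 o1 o3 o3) => h0 h1; lra.
- move: (DF2 o0 o2 o3 o3) (SY o0 o2 o3 o3) => h0 h1; lra.
- move: (DF2 o0 o3 o3 o3) (SY o0 o3 o3 o3) => h0 h1; lra.
- move: (DF1 o0 o1 o3 o3) (DF2 o0 o1 o3 o3) (SY o1 o0 o3 o3) => h0 h1 h2; lra.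
- move: (DF1 o1 o1 o3 o3) (SY o1 o1 o3 o3) => h0 h1; lra.
- move: (DF2 o1 o2 o3 o3) (SY o1 o2 o3 o3) => h0 h1; lra.
- move: (DF2 o1 o3 o3 o3) (SY o1 o3 o3 o3) => h0 h1; lra.
- move: (DF1 o0 o2 o3 o3) (DF2 o0 o2 o3 o3) (SY o2 o0 o3 o3) => h0 h1 h2; lra.
- move: (DF1 o1 o2 o3 o3) (DF2 o1 o2 o3 o3) (SY o2 o1 o3 o3) => h0 h1 h2; lra.
- move: (DF1 o2 o2 o3 o3) (SY o2 o2 o3 o3) => h0 h1; lra.
- move: (DF2 o2 o3 o3 o3) (SY o2 o3 o3 o3) => h0 h1; lra.
- move: (DF1 o0 o3 o3 o3) (DF2 o0 o3 o3 o3) (SY o3 o0 o3 o3) => h0 h1 h2; lra.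
- move: (DF1 o1 o3 o3 o3) (DF2 o1 o3 o3 o3) (SY o3 o1 o3 o3) => h0 h1 h2; lra.
- move: (DF1 o2 o3 o3 o3) (DF2 o2 o3 o3 o3) (SY o3 o2 o3 o3) => h0 h1 h2; lra.
- move: (DF1 o3 o3 o3 o3) => h0; lra.
Qed.
Lemma E1 : Y = V1.
Proof.
fx; case: (ord4_cases a) => ->; case: (ord4_cases b) => ->.
all: first [exact: E1_00 | exact: E1_01 | exact: E1_02 | exact: E1_03 | exact: E1_10 | exact: E1_11 | exact: E1_12 | exact: E1_13 | exact: E1_20 | exact: E1_21 | exact: E1_22 | exact: E1_23 | exact: E1_30 | exact: E1_31 | exact: E1_32 | exact: E1_33].
Qed.
Lemma eta1 : XXgoal Y.
Proof using DF1 DF2 SY BI U1 U2 U3 U4 U5 U6.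
rewrite E1; exact: eta1'.
Qed.
End Eta1.

Definition Wp4 (x0 : R) (a b c d : 'I_4) : R :=
  match nat_of_ord a, nat_of_ord b, nat_of_ord c, nat_of_ord d with
  | 0, 0, 0, 0 => 0
  | 0, 0, 0, 1 => 0
  | 0, 0, 0, 2 => 0
  | 0, 0, 0, 3 => 0
  | 0, 0, 1, 0 => 0
  | 0, 0, 1, 1 => 0
  | 0, 0, 1, 2 => 0
  | 0, 0, 1, 3 => 0
  | 0, 0, 2, 0 => 0
  | 0, 0, 2, 1 => 0
  | 0, 0, 2, 2 => 0
  | 0, 0, 2, 3 => 0
  | 0, 0, 3, 0 => 0
  | 0, 0, 3, 1 => 0
  | 0, 0, 3, 2 => 0
  | 0, 0, 3, 3 => 0
  | 0, 1, 0, 0 => 0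
  | 0, 1, 0, 1 => 0
  | 0, 1, 0, 2 => 0
  | 0, 1, 0, 3 => 0
  | 0, 1, 1, 0 => 0
  | 0, 1, 1, 1 => 0
  | 0, 1, 1, 2 => 0
  | 0, 1, 1, 3 => 0
  | 0, 1, 2, 0 => 0
  | 0, 1, 2, 1 => 0
  | 0, 1, 2, 2 => 0
  | 0, 1, 2, 3 => x0
  | 0, 1, 3, 0 => 0
  | 0, 1, 3, 1 => 0
  | 0, 1, 3, 2 => - x0
  | 0, 1, 3, 3 => 0
  | 0, 2, 0, 0 => 0
  | 0, 2, 0, 1 => 0
  | 0, 2, 0, 2 => 0
  | 0, 2, 0, 3 => 0
  | 0, 2, 1, 0 => 0
  | 0, 2, 1, 1 => 0
  | 0, 2, 1, 2 => 0
  | 0, 2, 1, 3 => - x0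
  | 0, 2, 2, 0 => 0
  | 0, 2, 2, 1 => 0
  | 0, 2, 2, 2 => 0
  | 0, 2, 2, 3 => 0
  | 0, 2, 3, 0 => 0
  | 0, 2, 3, 1 => x0
  | 0, 2, 3, 2 => 0
  | 0, 2, 3, 3 => 0
  | 0, 3, 0, 0 => 0
  | 0, 3, 0, 1 => 0
  | 0, 3, 0, 2 => 0
  | 0, 3, 0, 3 => 0
  | 0, 3, 1, 0 => 0
  | 0, 3, 1, 1 => 0
  | 0, 3, 1, 2 => x0
  | 0, 3, 1, 3 => 0
  | 0, 3, 2, 0 => 0
  | 0, 3, 2, 1 => - x0
  | 0, 3, 2, 2 => 0
  | 0, 3, 2, 3 => 0
  | 0, 3, 3, 0 => 0
  | 0, 3, 3, 1 => 0
  | 0, 3, 3, 2 => 0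
  | 0, 3, 3, 3 => 0
  | 1, 0, 0, 0 => 0
  | 1, 0, 0, 1 => 0
  | 1, 0, 0, 2 => 0
  | 1, 0, 0, 3 => 0
  | 1, 0, 1, 0 => 0
  | 1, 0, 1, 1 => 0
  | 1, 0, 1, 2 => 0
  | 1, 0, 1, 3 => 0
  | 1, 0, 2, 0 => 0
  | 1, 0, 2, 1 => 0
  | 1, 0, 2, 2 => 0
  | 1, 0, 2, 3 => - x0
  | 1, 0, 3, 0 => 0
  | 1, 0, 3, 1 => 0
  | 1, 0, 3, 2 => x0
  | 1, 0, 3, 3 => 0
  | 1, 1, 0, 0 => 0
  | 1, 1, 0, 1 => 0
  | 1, 1, 0, 2 => 0
  | 1, 1, 0, 3 => 0
  | 1, 1, 1, 0 => 0
  | 1, 1, 1, 1 => 0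
  | 1, 1, 1, 2 => 0
  | 1, 1, 1, 3 => 0
  | 1, 1, 2, 0 => 0
  | 1, 1, 2, 1 => 0
  | 1, 1, 2, 2 => 0
  | 1, 1, 2, 3 => 0
  | 1, 1, 3, 0 => 0
  | 1, 1, 3, 1 => 0
  | 1, 1, 3, 2 => 0
  | 1, 1, 3, 3 => 0
  | 1, 2, 0, 0 => 0
  | 1, 2, 0, 1 => 0
  | 1, 2, 0, 2 => 0
  | 1, 2, 0, 3 => x0
  | 1, 2, 1, 0 => 0
  | 1, 2, 1, 1 => 0
  | 1, 2, 1, 2 => 0
  | 1, 2, 1, 3 => 0
  | 1, 2, 2, 0 => 0
  | 1, 2, 2, 1 => 0
  | 1, 2, 2, 2 => 0
  | 1, 2, 2, 3 => 0
  | 1, 2, 3, 0 => - x0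
  | 1, 2, 3, 1 => 0
  | 1, 2, 3, 2 => 0
  | 1, 2, 3, 3 => 0
  | 1, 3, 0, 0 => 0
  | 1, 3, 0, 1 => 0
  | 1, 3, 0, 2 => - x0
  | 1, 3, 0, 3 => 0
  | 1, 3, 1, 0 => 0
  | 1, 3, 1, 1 => 0
  | 1, 3, 1, 2 => 0
  | 1, 3, 1, 3 => 0
  | 1, 3, 2, 0 => x0
  | 1, 3, 2, 1 => 0
  | 1, 3, 2, 2 => 0
  | 1, 3, 2, 3 => 0
  | 1, 3, 3, 0 => 0
  | 1, 3, 3, 1 => 0
  | 1, 3, 3, 2 => 0
  | 1, 3, 3, 3 => 0
  | 2, 0, 0, 0 => 0
  | 2, 0, 0, 1 => 0
  | 2, 0, 0, 2 => 0
  | 2, 0, 0, 3 => 0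
  | 2, 0, 1, 0 => 0
  | 2, 0, 1, 1 => 0
  | 2, 0, 1, 2 => 0
  | 2, 0, 1, 3 => x0
  | 2, 0, 2, 0 => 0
  | 2, 0, 2, 1 => 0
  | 2, 0, 2, 2 => 0
  | 2, 0, 2, 3 => 0
  | 2, 0, 3, 0 => 0
  | 2, 0, 3, 1 => - x0
  | 2, 0, 3, 2 => 0
  | 2, 0, 3, 3 => 0
  | 2, 1, 0, 0 => 0
  | 2, 1, 0, 1 => 0
  | 2, 1, 0, 2 => 0
  | 2, 1, 0, 3 => - x0
  | 2, 1, 1, 0 => 0
  | 2, 1, 1, 1 => 0
  | 2, 1, 1, 2 => 0
  | 2, 1, 1, 3 => 0
  | 2, 1, 2, 0 => 0
  | 2, 1, 2, 1 => 0
  | 2, 1, 2, 2 => 0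
  | 2, 1, 2, 3 => 0
  | 2, 1, 3, 0 => x0
  | 2, 1, 3, 1 => 0
  | 2, 1, 3, 2 => 0
  | 2, 1, 3, 3 => 0
  | 2, 2, 0, 0 => 0
  | 2, 2, 0, 1 => 0
  | 2, 2, 0, 2 => 0
  | 2, 2, 0, 3 => 0
  | 2, 2, 1, 0 => 0
  | 2, 2, 1, 1 => 0
  | 2, 2, 1, 2 => 0
  | 2, 2, 1, 3 => 0
  | 2, 2, 2, 0 => 0
  | 2, 2, 2, 1 => 0
  | 2, 2, 2, 2 => 0
  | 2, 2, 2, 3 => 0
  | 2, 2, 3, 0 => 0
  | 2, 2, 3, 1 => 0
  | 2, 2, 3, 2 => 0
  | 2, 2, 3, 3 => 0
  | 2, 3, 0, 0 => 0
  | 2, 3, 0, 1 => x0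
  | 2, 3, 0, 2 => 0
  | 2, 3, 0, 3 => 0
  | 2, 3, 1, 0 => - x0
  | 2, 3, 1, 1 => 0
  | 2, 3, 1, 2 => 0
  | 2, 3, 1, 3 => 0
  | 2, 3, 2, 0 => 0
  | 2, 3, 2, 1 => 0
  | 2, 3, 2, 2 => 0
  | 2, 3, 2, 3 => 0
  | 2, 3, 3, 0 => 0
  | 2, 3, 3, 1 => 0
  | 2, 3, 3, 2 => 0
  | 2, 3, 3, 3 => 0
  | 3, 0, 0, 0 => 0
  | 3, 0, 0, 1 => 0
  | 3, 0, 0, 2 => 0
  | 3, 0, 0, 3 => 0
  | 3, 0, 1, 0 => 0
  | 3, 0, 1, 1 => 0
  | 3, 0, 1, 2 => - x0
  | 3, 0, 1, 3 => 0
  | 3, 0, 2, 0 => 0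
  | 3, 0, 2, 1 => x0
  | 3, 0, 2, 2 => 0
  | 3, 0, 2, 3 => 0
  | 3, 0, 3, 0 => 0
  | 3, 0, 3, 1 => 0
  | 3, 0, 3, 2 => 0
  | 3, 0, 3, 3 => 0
  | 3, 1, 0, 0 => 0
  | 3, 1, 0, 1 => 0
  | 3, 1, 0, 2 => x0
  | 3, 1, 0, 3 => 0
  | 3, 1, 1, 0 => 0
  | 3, 1, 1, 1 => 0
  | 3, 1, 1, 2 => 0
  | 3, 1, 1, 3 => 0
  | 3, 1, 2, 0 => - x0
  | 3, 1, 2, 1 => 0
  | 3, 1, 2, 2 => 0
  | 3, 1, 2, 3 => 0
  | 3, 1, 3, 0 => 0
  | 3, 1, 3, 1 => 0
  | 3, 1, 3, 2 => 0
  | 3, 1, 3, 3 => 0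
  | 3, 2, 0, 0 => 0
  | 3, 2, 0, 1 => - x0
  | 3, 2, 0, 2 => 0
  | 3, 2, 0, 3 => 0
  | 3, 2, 1, 0 => x0
  | 3, 2, 1, 1 => 0
  | 3, 2, 1, 2 => 0
  | 3, 2, 1, 3 => 0
  | 3, 2, 2, 0 => 0
  | 3, 2, 2, 1 => 0
  | 3, 2, 2, 2 => 0
  | 3, 2, 2, 3 => 0
  | 3, 2, 3, 0 => 0
  | 3, 2, 3, 1 => 0
  | 3, 2, 3, 2 => 0
  | 3, 2, 3, 3 => 0
  | 3, 3, 0, 0 => 0
  | 3, 3, 0, 1 => 0
  | 3, 3, 0, 2 => 0
  | 3, 3, 0, 3 => 0
  | 3, 3, 1, 0 => 0
  | 3, 3, 1, 1 => 0
  | 3, 3, 1, 2 => 0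
  | 3, 3, 1, 3 => 0
  | 3, 3, 2, 0 => 0
  | 3, 3, 2, 1 => 0
  | 3, 3, 2, 2 => 0
  | 3, 3, 2, 3 => 0
  | 3, 3, 3, 0 => 0
  | 3, 3, 3, 1 => 0
  | 3, 3, 3, 2 => 0
  | 3, 3, 3, 3 => 0
  | _, _, _, _ => 0
  end.

Lemma eta4' (x0 : R) : XXgoal (Wp4 x0).
Proof.
finish_eta; cbv beta iota delta [Wp4 nat_of_ord]; ring.
Qed.

Section Eta4.
Variable Y : tensor4 R.
Hypothesis A1 : forall a b c d, Y a b c d = - Y b a c d.
Hypothesis A2 : forall a b c d, Y a b c d = - Y c b a d.
Hypothesis A3 : forall a b c d, Y a b c d = - Y d b c a.
Hypothesis A4 : forall a b c d, Y a b c d = - Y a c b d.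
Hypothesis A5 : forall a b c d, Y a b c d = - Y a d c b.
Hypothesis A6 : forall a b c d, Y a b c d = - Y a b d c.
Definition V4 := Wp4 (Y o0 o1 o2 o3).
Lemma E4_00 c d : Y o0 o0 c d = V4 o0 o0 c d.
Proof.
case: (ord4_cases c) => ->; case: (ord4_cases d) => ->; cbv beta iota delta [V4 Wp4 nat_of_ord].
- move: (A1 o0 o0 o0 o0) => h0; lra.
- move: (A1 o0 o0 o0 o1) => h0; lra.
- move: (A1 o0 o0 o0 o2) => h0; lra.
- move: (A1 o0 o0 o0 o3) => h0; lra.
- move: (A1 o0 o0 o0 o1) (A6 o0 o0 o0 o1) => h0 h1; lra.
- move: (A1 o0 o0 o1 o1) => h0; lra.
- move: (A1 o0 o0 o1 o2) => h0; lra.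
- move: (A1 o0 o0 o1 o3) => h0; lra.
- move: (A1 o0 o0 o0 o2) (A6 o0 o0 o0 o2) => h0 h1; lra.
- move: (A1 o0 o0 o1 o2) (A6 o0 o0 o1 o2) => h0 h1; lra.
- move: (A1 o0 o0 o2 o2) => h0; lra.
- move: (A1 o0 o0 o2 o3) => h0; lra.
- move: (A1 o0 o0 o0 o3) (A6 o0 o0 o0 o3) => h0 h1; lra.
- move: (A1 o0 o0 o1 o3) (A6 o0 o0 o1 o3) => h0 h1; lra.
- move: (A1 o0 o0 o2 o3) (A6 o0 o0 o2 o3) => h0 h1; lra.
- move: (A1 o0 o0 o3 o3) => h0; lra.
Qed.
Lemma E4_01 c d : Y o0 o1 c d = V4 o0 o1 c d.
Proof.
case: (ord4_cases c) => ->; case: (ord4_cases d) => ->; cbv beta iota delta [V4 Wp4 nat_of_ord].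
- move: (A1 o0 o0 o0 o1) (A5 o0 o0 o0 o1) => h0 h1; lra.
- move: (A1 o0 o0 o1 o1) (A4 o0 o0 o1 o1) => h0 h1; lra.
- move: (A1 o0 o0 o1 o2) (A4 o0 o0 o1 o2) => h0 h1; lra.
- move: (A1 o0 o0 o1 o3) (A4 o0 o0 o1 o3) => h0 h1; lra.
- move: (A1 o0 o0 o1 o1) (A5 o0 o0 o1 o1) => h0 h1; lra.
- move: (A4 o0 o1 o1 o1) => h0; lra.
- move: (A4 o0 o1 o1 o2) => h0; lra.
- move: (A4 o0 o1 o1 o3) => h0; lra.
- move: (A1 o0 o0 o1 o2) (A6 o0 o0 o1 o2) (A5 o0 o0 o2 o1) => h0 h1 h2; lra.
- move: (A4 o0 o1 o1 o2) (A6 o0 o1 o1 o2) => h0 h1; lra.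
- move: (A6 o0 o1 o2 o2) => h0; lra.
- by [].
- move: (A1 o0 o0 o1 o3) (A6 o0 o0 o1 o3) (A5 o0 o0 o3 o1) => h0 h1 h2; lra.
- move: (A4 o0 o1 o1 o3) (A6 o0 o1 o1 o3) => h0 h1; lra.
- move: (A6 o0 o1 o2 o3) => h0; lra.
- move: (A6 o0 o1 o3 o3) => h0; lra.
Qed.
Lemma E4_02 c d : Y o0 o2 c d = V4 o0 o2 c d.
Proof.
case: (ord4_cases c) => ->; case: (ord4_cases d) => ->; cbv beta iota delta [V4 Wp4 nat_of_ord].
- move: (A1 o0 o0 o0 o2) (A5 o0 o0 o0 o2) => h0 h1; lra.
- move: (A1 o0 o0 o1 o2) (A6 o0 o0 o1 o2) (A4 o0 o0 o2 o1) => h0 h1 h2; lra.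
- move: (A1 o0 o0 o2 o2) (A4 o0 o0 o2 o2) => h0 h1; lra.
- move: (A1 o0 o0 o2 o3) (A4 o0 o0 o2 o3) => h0 h1; lra.
- move: (A1 o0 o0 o1 o2) (A5 o0 o0 o1 o2) => h0 h1; lra.
- move: (A4 o0 o1 o1 o2) (A5 o0 o1 o1 o2) => h0 h1; lra.
- move: (A4 o0 o1 o2 o2) (A6 o0 o1 o2 o2) => h0 h1; lra.
- move: (A4 o0 o1 o2 o3) => h0; lra.
- move: (A1 o0 o0 o2 o2) (A5 o0 o0 o2 o2) => h0 h1; lra.
- move: (A5 o0 o1 o2 o2) (A6 o0 o1 o2 o2) => h0 h1; lra.
- move: (A4 o0 o2 o2 o2) => h0; lra.
- move: (A4 o0 o2 o2 o3) => h0; lra.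
- move: (A1 o0 o0 o2 o3) (A6 o0 o0 o2 o3) (A5 o0 o0 o3 o2) => h0 h1 h2; lra.
- move: (A6 o0 o1 o2 o3) (A5 o0 o1 o3 o2) => h0 h1; lra.
- move: (A4 o0 o2 o2 o3) (A6 o0 o2 o2 o3) => h0 h1; lra.
- move: (A6 o0 o2 o3 o3) => h0; lra.
Qed.
Lemma E4_03 c d : Y o0 o3 c d = V4 o0 o3 c d.
Proof.
case: (ord4_cases c) => ->; case: (ord4_cases d) => ->; cbv beta iota delta [V4 Wp4 nat_of_ord].
- move: (A1 o0 o0 o0 o3) (A5 o0 o0 o0 o3) => h0 h1; lra.
- move: (A1 o0 o0 o1 o3) (A6 o0 o0 o1 o3) (A4 o0 o0 o3 o1) => h0 h1 h2; lra.
- move: (A1 o0 o0 o2 o3) (A6 o0 o0 o2 o3) (A4 o0 o0 o3 o2) => h0 h1 h2; lra.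
- move: (A1 o0 o0 o3 o3) (A4 o0 o0 o3 o3) => h0 h1; lra.
- move: (A1 o0 o0 o1 o3) (A5 o0 o0 o1 o3) => h0 h1; lra.
- move: (A4 o0 o1 o1 o3) (A5 o0 o1 o1 o3) => h0 h1; lra.
- move: (A6 o0 o1 o2 o3) (A4 o0 o1 o3 o2) => h0 h1; lra.
- move: (A4 o0 o1 o3 o3) (A6 o0 o1 o3 o3) => h0 h1; lra.
- move: (A1 o0 o0 o2 o3) (A5 o0 o0 o2 o3) => h0 h1; lra.
- move: (A5 o0 o1 o2 o3) => h0; lra.
- move: (A4 o0 o2 o2 o3) (A5 o0 o2 o2 o3) => h0 h1; lra.
- move: (A4 o0 o2 o3 o3) (A6 o0 o2 o3 o3) => h0 h1; lra.
- move: (A1 o0 o0 o3 o3) (A5 o0 o0 o3 o3) => h0 h1; lra.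
- move: (A5 o0 o1 o3 o3) (A6 o0 o1 o3 o3) => h0 h1; lra.
- move: (A5 o0 o2 o3 o3) (A6 o0 o2 o3 o3) => h0 h1; lra.
- move: (A4 o0 o3 o3 o3) => h0; lra.
Qed.
Lemma E4_10 c d : Y o1 o0 c d = V4 o1 o0 c d.
Proof.
case: (ord4_cases c) => ->; case: (ord4_cases d) => ->; cbv beta iota delta [V4 Wp4 nat_of_ord].
- move: (A1 o0 o0 o0 o1) (A3 o0 o0 o0 o1) => h0 h1; lra.
- move: (A1 o0 o0 o1 o1) (A2 o0 o0 o1 o1) => h0 h1; lra.
- move: (A1 o0 o0 o1 o2) (A2 o0 o0 o1 o2) => h0 h1; lra.
- move: (A1 o0 o0 o1 o3) (A2 o0 o0 o1 o3) => h0 h1; lra.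
- move: (A1 o0 o0 o1 o1) (A3 o0 o0 o1 o1) => h0 h1; lra.
- move: (A1 o0 o1 o1 o1) (A4 o0 o1 o1 o1) => h0 h1; lra.
- move: (A1 o0 o1 o1 o2) (A4 o0 o1 o1 o2) => h0 h1; lra.
- move: (A1 o0 o1 o1 o3) (A4 o0 o1 o1 o3) => h0 h1; lra.
- move: (A1 o0 o0 o1 o2) (A6 o0 o0 o1 o2) (A3 o0 o0 o2 o1) => h0 h1 h2; lra.
- move: (A4 o0 o1 o1 o2) (A6 o0 o1 o1 o2) (A1 o0 o1 o2 o1) => h0 h1 h2; lra.
- move: (A1 o0 o1 o2 o2) (A6 o0 o1 o2 o2) => h0 h1; lra.
- move: (A1 o0 o1 o2 o3) => h0; lra.
- move: (A1 o0 o0 o1 o3) (A6 o0 o0 o1 o3) (A3 o0 o0 o3 o1) => h0 h1 h2; lra.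
- move: (A4 o0 o1 o1 o3) (A6 o0 o1 o1 o3) (A1 o0 o1 o3 o1) => h0 h1 h2; lra.
- move: (A6 o0 o1 o2 o3) (A1 o0 o1 o3 o2) => h0 h1; lra.
- move: (A1 o0 o1 o3 o3) (A6 o0 o1 o3 o3) => h0 h1; lra.
Qed.
Lemma E4_11 c d : Y o1 o1 c d = V4 o1 o1 c d.
Proof.
case: (ord4_cases c) => ->; case: (ord4_cases d) => ->; cbv beta iota delta [V4 Wp4 nat_of_ord].
- move: (A1 o0 o0 o1 o1) (A4 o0 o0 o1 o1) (A3 o0 o1 o0 o1) => h0 h1 h2; lra.
- move: (A2 o0 o1 o1 o1) (A4 o0 o1 o1 o1) => h0 h1; lra.
- move: (A2 o0 o1 o1 o2) (A4 o0 o1 o1 o2) => h0 h1; lra.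
- move: (A2 o0 o1 o1 o3) (A4 o0 o1 o1 o3) => h0 h1; lra.
- move: (A3 o0 o1 o1 o1) (A4 o0 o1 o1 o1) => h0 h1; lra.
- move: (A1 o1 o1 o1 o1) => h0; lra.
- move: (A1 o1 o1 o1 o2) => h0; lra.
- move: (A1 o1 o1 o1 o3) => h0; lra.
- move: (A4 o0 o1 o1 o2) (A6 o0 o1 o1 o2) (A3 o0 o1 o2 o1) => h0 h1 h2; lra.
- move: (A1 o1 o1 o1 o2) (A6 o1 o1 o1 o2) => h0 h1; lra.
- move: (A1 o1 o1 o2 o2) => h0; lra.
- move: (A1 o1 o1 o2 o3) => h0; lra.
- move: (A4 o0 o1 o1 o3) (A6 o0 o1 o1 o3) (A3 o0 o1 o3 o1) => h0 h1 h2; lra.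
- move: (A1 o1 o1 o1 o3) (A6 o1 o1 o1 o3) => h0 h1; lra.
- move: (A1 o1 o1 o2 o3) (A6 o1 o1 o2 o3) => h0 h1; lra.
- move: (A1 o1 o1 o3 o3) => h0; lra.
Qed.
Lemma E4_12 c d : Y o1 o2 c d = V4 o1 o2 c d.
Proof.
case: (ord4_cases c) => ->; case: (ord4_cases d) => ->; cbv beta iota delta [V4 Wp4 nat_of_ord].
- move: (A1 o0 o0 o1 o2) (A6 o0 o0 o1 o2) (A4 o0 o0 o2 o1) (A3 o0 o2 o0 o1) => h0 h1 h2 h3; lra.
- move: (A4 o0 o1 o1 o2) (A5 o0 o1 o1 o2) (A2 o0 o2 o1 o1) => h0 h1 h2; lra.
- move: (A4 o0 o1 o2 o2) (A6 o0 o1 o2 o2) (A2 o0 o2 o1 o2) => h0 h1 h2; lra.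
- move: (A4 o0 o1 o2 o3) (A2 o0 o2 o1 o3) => h0 h1; lra.
- move: (A4 o0 o1 o1 o2) (A5 o0 o1 o1 o2) (A3 o0 o2 o1 o1) => h0 h1 h2; lra.
- move: (A1 o1 o1 o1 o2) (A5 o1 o1 o1 o2) => h0 h1; lra.
- move: (A1 o1 o1 o2 o2) (A4 o1 o1 o2 o2) => h0 h1; lra.
- move: (A1 o1 o1 o2 o3) (A4 o1 o1 o2 o3) => h0 h1; lra.
- move: (A5 o0 o1 o2 o2) (A6 o0 o1 o2 o2) (A3 o0 o2 o2 o1) => h0 h1 h2; lra.
- move: (A1 o1 o1 o2 o2) (A5 o1 o1 o2 o2) => h0 h1; lra.
- move: (A4 o1 o2 o2 o2) => h0; lra.
- move: (A4 o1 o2 o2 o3) => h0; lra.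
- move: (A6 o0 o1 o2 o3) (A5 o0 o1 o3 o2) (A3 o0 o2 o3 o1) => h0 h1 h2; lra.
- move: (A1 o1 o1 o2 o3) (A6 o1 o1 o2 o3) (A5 o1 o1 o3 o2) => h0 h1 h2; lra.
- move: (A4 o1 o2 o2 o3) (A6 o1 o2 o2 o3) => h0 h1; lra.
- move: (A6 o1 o2 o3 o3) => h0; lra.
Qed.
Lemma E4_13 c d : Y o1 o3 c d = V4 o1 o3 c d.
Proof.
case: (ord4_cases c) => ->; case: (ord4_cases d) => ->; cbv beta iota delta [V4 Wp4 nat_of_ord].
- move: (A1 o0 o0 o1 o3) (A6 o0 o0 o1 o3) (A4 o0 o0 o3 o1) (A3 o0 o3 o0 o1) => h0 h1 h2 h3; lra.
- move: (A4 o0 o1 o1 o3) (A5 o0 o1 o1 o3) (A2 o0 o3 o1 o1) => h0 h1 h2; lra.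
- move: (A6 o0 o1 o2 o3) (A4 o0 o1 o3 o2) (A2 o0 o3 o1 o2) => h0 h1 h2; lra.
- move: (A4 o0 o1 o3 o3) (A6 o0 o1 o3 o3) (A2 o0 o3 o1 o3) => h0 h1 h2; lra.
- move: (A4 o0 o1 o1 o3) (A5 o0 o1 o1 o3) (A3 o0 o3 o1 o1) => h0 h1 h2; lra.
- move: (A1 o1 o1 o1 o3) (A5 o1 o1 o1 o3) => h0 h1; lra.
- move: (A1 o1 o1 o2 o3) (A6 o1 o1 o2 o3) (A4 o1 o1 o3 o2) => h0 h1 h2; lra.
- move: (A1 o1 o1 o3 o3) (A4 o1 o1 o3 o3) => h0 h1; lra.
- move: (A5 o0 o1 o2 o3) (A3 o0 o3 o2 o1) => h0 h1; lra.
- move: (A1 o1 o1 o2 o3) (A5 o1 o1 o2 o3) => h0 h1; lra.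
- move: (A4 o1 o2 o2 o3) (A5 o1 o2 o2 o3) => h0 h1; lra.
- move: (A4 o1 o2 o3 o3) (A6 o1 o2 o3 o3) => h0 h1; lra.
- move: (A5 o0 o1 o3 o3) (A6 o0 o1 o3 o3) (A3 o0 o3 o3 o1) => h0 h1 h2; lra.
- move: (A1 o1 o1 o3 o3) (A5 o1 o1 o3 o3) => h0 h1; lra.
- move: (A5 o1 o2 o3 o3) (A6 o1 o2 o3 o3) => h0 h1; lra.
- move: (A4 o1 o3 o3 o3) => h0; lra.
Qed.
Lemma E4_20 c d : Y o2 o0 c d = V4 o2 o0 c d.
Proof.
case: (ord4_cases c) => ->; case: (ord4_cases d) => ->; cbv beta iota delta [V4 Wp4 nat_of_ord].
- move: (A1 o0 o0 o0 o2) (A3 o0 o0 o0 o2) => h0 h1; lra.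
- move: (A1 o0 o0 o1 o2) (A6 o0 o0 o1 o2) (A2 o0 o0 o2 o1) => h0 h1 h2; lra.
- move: (A1 o0 o0 o2 o2) (A2 o0 o0 o2 o2) => h0 h1; lra.
- move: (A1 o0 o0 o2 o3) (A2 o0 o0 o2 o3) => h0 h1; lra.
- move: (A1 o0 o0 o1 o2) (A3 o0 o0 o1 o2) => h0 h1; lra.
- move: (A4 o0 o1 o1 o2) (A5 o0 o1 o1 o2) (A1 o0 o2 o1 o1) => h0 h1 h2; lra.
- move: (A4 o0 o1 o2 o2) (A6 o0 o1 o2 o2) (A1 o0 o2 o1 o2) => h0 h1 h2; lra.
- move: (A4 o0 o1 o2 o3) (A1 o0 o2 o1 o3) => h0 h1; lra.
- move: (A1 o0 o0 o2 o2) (A3 o0 o0 o2 o2) => h0 h1; lra.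
- move: (A5 o0 o1 o2 o2) (A6 o0 o1 o2 o2) (A1 o0 o2 o2 o1) => h0 h1 h2; lra.
- move: (A1 o0 o2 o2 o2) (A4 o0 o2 o2 o2) => h0 h1; lra.
- move: (A1 o0 o2 o2 o3) (A4 o0 o2 o2 o3) => h0 h1; lra.
- move: (A1 o0 o0 o2 o3) (A6 o0 o0 o2 o3) (A3 o0 o0 o3 o2) => h0 h1 h2; lra.
- move: (A6 o0 o1 o2 o3) (A5 o0 o1 o3 o2) (A1 o0 o2 o3 o1) => h0 h1 h2; lra.
- move: (A4 o0 o2 o2 o3) (A6 o0 o2 o2 o3) (A1 o0 o2 o3 o2) => h0 h1 h2; lra.
- move: (A1 o0 o2 o3 o3) (A6 o0 o2 o3 o3) => h0 h1; lra.
Qed.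
Lemma E4_21 c d : Y o2 o1 c d = V4 o2 o1 c d.
Proof.
case: (ord4_cases c) => ->; case: (ord4_cases d) => ->; cbv beta iota delta [V4 Wp4 nat_of_ord].
- move: (A1 o0 o0 o1 o2) (A4 o0 o0 o1 o2) (A3 o0 o1 o0 o2) => h0 h1 h2; lra.
- move: (A4 o0 o1 o1 o2) (A6 o0 o1 o1 o2) (A2 o0 o1 o2 o1) => h0 h1 h2; lra.
- move: (A2 o0 o1 o2 o2) (A6 o0 o1 o2 o2) => h0 h1; lra.
- move: (A2 o0 o1 o2 o3) => h0; lra.
- move: (A3 o0 o1 o1 o2) (A4 o0 o1 o1 o2) => h0 h1; lra.
- move: (A1 o1 o1 o1 o2) (A3 o1 o1 o1 o2) => h0 h1; lra.
- move: (A1 o1 o1 o2 o2) (A2 o1 o1 o2 o2) => h0 h1; lra.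
- move: (A1 o1 o1 o2 o3) (A2 o1 o1 o2 o3) => h0 h1; lra.
- move: (A3 o0 o1 o2 o2) (A6 o0 o1 o2 o2) => h0 h1; lra.
- move: (A1 o1 o1 o2 o2) (A3 o1 o1 o2 o2) => h0 h1; lra.
- move: (A1 o1 o2 o2 o2) (A4 o1 o2 o2 o2) => h0 h1; lra.
- move: (A1 o1 o2 o2 o3) (A4 o1 o2 o2 o3) => h0 h1; lra.
- move: (A6 o0 o1 o2 o3) (A3 o0 o1 o3 o2) => h0 h1; lra.
- move: (A1 o1 o1 o2 o3) (A6 o1 o1 o2 o3) (A3 o1 o1 o3 o2) => h0 h1 h2; lra.
- move: (A4 o1 o2 o2 o3) (A6 o1 o2 o2 o3) (A1 o1 o2 o3 o2) => h0 h1 h2; lra.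
- move: (A1 o1 o2 o3 o3) (A6 o1 o2 o3 o3) => h0 h1; lra.
Qed.
Lemma E4_22 c d : Y o2 o2 c d = V4 o2 o2 c d.
Proof.
case: (ord4_cases c) => ->; case: (ord4_cases d) => ->; cbv beta iota delta [V4 Wp4 nat_of_ord].
- move: (A1 o0 o0 o2 o2) (A4 o0 o0 o2 o2) (A3 o0 o2 o0 o2) => h0 h1 h2; lra.
- move: (A5 o0 o1 o2 o2) (A6 o0 o1 o2 o2) (A2 o0 o2 o2 o1) => h0 h1 h2; lra.
- move: (A2 o0 o2 o2 o2) (A4 o0 o2 o2 o2) => h0 h1; lra.
- move: (A2 o0 o2 o2 o3) (A4 o0 o2 o2 o3) => h0 h1; lra.
- move: (A4 o0 o1 o2 o2) (A6 o0 o1 o2 o2) (A3 o0 o2 o1 o2) => h0 h1 h2; lra.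
- move: (A1 o1 o1 o2 o2) (A4 o1 o1 o2 o2) (A3 o1 o2 o1 o2) => h0 h1 h2; lra.
- move: (A2 o1 o2 o2 o2) (A4 o1 o2 o2 o2) => h0 h1; lra.
- move: (A2 o1 o2 o2 o3) (A4 o1 o2 o2 o3) => h0 h1; lra.
- move: (A3 o0 o2 o2 o2) (A4 o0 o2 o2 o2) => h0 h1; lra.
- move: (A3 o1 o2 o2 o2) (A4 o1 o2 o2 o2) => h0 h1; lra.
- move: (A1 o2 o2 o2 o2) => h0; lra.
- move: (A1 o2 o2 o2 o3) => h0; lra.
- move: (A4 o0 o2 o2 o3) (A6 o0 o2 o2 o3) (A3 o0 o2 o3 o2) => h0 h1 h2; lra.
- move: (A4 o1 o2 o2 o3) (A6 o1 o2 o2 o3) (A3 o1 o2 o3 o2) => h0 h1 h2; lra.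
- move: (A1 o2 o2 o2 o3) (A6 o2 o2 o2 o3) => h0 h1; lra.
- move: (A1 o2 o2 o3 o3) => h0; lra.
Qed.
Lemma E4_23 c d : Y o2 o3 c d = V4 o2 o3 c d.
Proof.
case: (ord4_cases c) => ->; case: (ord4_cases d) => ->; cbv beta iota delta [V4 Wp4 nat_of_ord].
- move: (A1 o0 o0 o2 o3) (A6 o0 o0 o2 o3) (A4 o0 o0 o3 o2) (A3 o0 o3 o0 o2) => h0 h1 h2 h3; lra.
- move: (A5 o0 o1 o2 o3) (A2 o0 o3 o2 o1) => h0 h1; lra.
- move: (A4 o0 o2 o2 o3) (A5 o0 o2 o2 o3) (A2 o0 o3 o2 o2) => h0 h1 h2; lra.
- move: (A4 o0 o2 o3 o3) (A6 o0 o2 o3 o3) (A2 o0 o3 o2 o3) => h0 h1 h2; lra.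
- move: (A6 o0 o1 o2 o3) (A4 o0 o1 o3 o2) (A3 o0 o3 o1 o2) => h0 h1 h2; lra.
- move: (A1 o1 o1 o2 o3) (A6 o1 o1 o2 o3) (A4 o1 o1 o3 o2) (A3 o1 o3 o1 o2) => h0 h1 h2 h3; lra.
- move: (A4 o1 o2 o2 o3) (A5 o1 o2 o2 o3) (A2 o1 o3 o2 o2) => h0 h1 h2; lra.
- move: (A4 o1 o2 o3 o3) (A6 o1 o2 o3 o3) (A2 o1 o3 o2 o3) => h0 h1 h2; lra.
- move: (A4 o0 o2 o2 o3) (A5 o0 o2 o2 o3) (A3 o0 o3 o2 o2) => h0 h1 h2; lra.
- move: (A4 o1 o2 o2 o3) (A5 o1 o2 o2 o3) (A3 o1 o3 o2 o2) => h0 h1 h2; lra.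
- move: (A1 o2 o2 o2 o3) (A5 o2 o2 o2 o3) => h0 h1; lra.
- move: (A1 o2 o2 o3 o3) (A4 o2 o2 o3 o3) => h0 h1; lra.
- move: (A5 o0 o2 o3 o3) (A6 o0 o2 o3 o3) (A3 o0 o3 o3 o2) => h0 h1 h2; lra.
- move: (A5 o1 o2 o3 o3) (A6 o1 o2 o3 o3) (A3 o1 o3 o3 o2) => h0 h1 h2; lra.
- move: (A1 o2 o2 o3 o3) (A5 o2 o2 o3 o3) => h0 h1; lra.
- move: (A4 o2 o3 o3 o3) => h0; lra.
Qed.
Lemma E4_30 c d : Y o3 o0 c d = V4 o3 o0 c d.
Proof.
case: (ord4_cases c) => ->; case: (ord4_cases d) => ->; cbv beta iota delta [V4 Wp4 nat_of_ord].
- move: (A1 o0 o0 o0 o3) (A3 o0 o0 o0 o3) => h0 h1; lra.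
- move: (A1 o0 o0 o1 o3) (A6 o0 o0 o1 o3) (A2 o0 o0 o3 o1) => h0 h1 h2; lra.
- move: (A1 o0 o0 o2 o3) (A6 o0 o0 o2 o3) (A2 o0 o0 o3 o2) => h0 h1 h2; lra.
- move: (A1 o0 o0 o3 o3) (A2 o0 o0 o3 o3) => h0 h1; lra.
- move: (A1 o0 o0 o1 o3) (A3 o0 o0 o1 o3) => h0 h1; lra.
- move: (A4 o0 o1 o1 o3) (A5 o0 o1 o1 o3) (A1 o0 o3 o1 o1) => h0 h1 h2; lra.
- move: (A6 o0 o1 o2 o3) (A4 o0 o1 o3 o2) (A1 o0 o3 o1 o2) => h0 h1 h2; lra.
- move: (A4 o0 o1 o3 o3) (A6 o0 o1 o3 o3) (A1 o0 o3 o1 o3) => h0 h1 h2; lra.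
- move: (A1 o0 o0 o2 o3) (A3 o0 o0 o2 o3) => h0 h1; lra.
- move: (A5 o0 o1 o2 o3) (A1 o0 o3 o2 o1) => h0 h1; lra.
- move: (A4 o0 o2 o2 o3) (A5 o0 o2 o2 o3) (A1 o0 o3 o2 o2) => h0 h1 h2; lra.
- move: (A4 o0 o2 o3 o3) (A6 o0 o2 o3 o3) (A1 o0 o3 o2 o3) => h0 h1 h2; lra.
- move: (A1 o0 o0 o3 o3) (A3 o0 o0 o3 o3) => h0 h1; lra.
- move: (A5 o0 o1 o3 o3) (A6 o0 o1 o3 o3) (A1 o0 o3 o3 o1) => h0 h1 h2; lra.
- move: (A5 o0 o2 o3 o3) (A6 o0 o2 o3 o3) (A1 o0 o3 o3 o2) => h0 h1 h2; lra.
- move: (A1 o0 o3 o3 o3) (A4 o0 o3 o3 o3) => h0 h1; lra.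
Qed.
Lemma E4_31 c d : Y o3 o1 c d = V4 o3 o1 c d.
Proof.
case: (ord4_cases c) => ->; case: (ord4_cases d) => ->; cbv beta iota delta [V4 Wp4 nat_of_ord].
- move: (A1 o0 o0 o1 o3) (A4 o0 o0 o1 o3) (A3 o0 o1 o0 o3) => h0 h1 h2; lra.
- move: (A4 o0 o1 o1 o3) (A6 o0 o1 o1 o3) (A2 o0 o1 o3 o1) => h0 h1 h2; lra.
- move: (A6 o0 o1 o2 o3) (A2 o0 o1 o3 o2) => h0 h1; lra.
- move: (A2 o0 o1 o3 o3) (A6 o0 o1 o3 o3) => h0 h1; lra.
- move: (A3 o0 o1 o1 o3) (A4 o0 o1 o1 o3) => h0 h1; lra.
- move: (A1 o1 o1 o1 o3) (A3 o1 o1 o1 o3) => h0 h1; lra.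
- move: (A1 o1 o1 o2 o3) (A6 o1 o1 o2 o3) (A2 o1 o1 o3 o2) => h0 h1 h2; lra.
- move: (A1 o1 o1 o3 o3) (A2 o1 o1 o3 o3) => h0 h1; lra.
- move: (A3 o0 o1 o2 o3) => h0; lra.
- move: (A1 o1 o1 o2 o3) (A3 o1 o1 o2 o3) => h0 h1; lra.
- move: (A4 o1 o2 o2 o3) (A5 o1 o2 o2 o3) (A1 o1 o3 o2 o2) => h0 h1 h2; lra.
- move: (A4 o1 o2 o3 o3) (A6 o1 o2 o3 o3) (A1 o1 o3 o2 o3) => h0 h1 h2; lra.
- move: (A3 o0 o1 o3 o3) (A6 o0 o1 o3 o3) => h0 h1; lra.
- move: (A1 o1 o1 o3 o3) (A3 o1 o1 o3 o3) => h0 h1; lra.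
- move: (A5 o1 o2 o3 o3) (A6 o1 o2 o3 o3) (A1 o1 o3 o3 o2) => h0 h1 h2; lra.
- move: (A1 o1 o3 o3 o3) (A4 o1 o3 o3 o3) => h0 h1; lra.
Qed.
Lemma E4_32 c d : Y o3 o2 c d = V4 o3 o2 c d.
Proof.
case: (ord4_cases c) => ->; case: (ord4_cases d) => ->; cbv beta iota delta [V4 Wp4 nat_of_ord].
- move: (A1 o0 o0 o2 o3) (A4 o0 o0 o2 o3) (A3 o0 o2 o0 o3) => h0 h1 h2; lra.
- move: (A6 o0 o1 o2 o3) (A5 o0 o1 o3 o2) (A2 o0 o2 o3 o1) => h0 h1 h2; lra.
- move: (A4 o0 o2 o2 o3) (A6 o0 o2 o2 o3) (A2 o0 o2 o3 o2) => h0 h1 h2; lra.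
- move: (A2 o0 o2 o3 o3) (A6 o0 o2 o3 o3) => h0 h1; lra.
- move: (A4 o0 o1 o2 o3) (A3 o0 o2 o1 o3) => h0 h1; lra.
- move: (A1 o1 o1 o2 o3) (A4 o1 o1 o2 o3) (A3 o1 o2 o1 o3) => h0 h1 h2; lra.
- move: (A4 o1 o2 o2 o3) (A6 o1 o2 o2 o3) (A2 o1 o2 o3 o2) => h0 h1 h2; lra.
- move: (A2 o1 o2 o3 o3) (A6 o1 o2 o3 o3) => h0 h1; lra.
- move: (A3 o0 o2 o2 o3) (A4 o0 o2 o2 o3) => h0 h1; lra.
- move: (A3 o1 o2 o2 o3) (A4 o1 o2 o2 o3) => h0 h1; lra.
- move: (A1 o2 o2 o2 o3) (A3 o2 o2 o2 o3) => h0 h1; lra.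
- move: (A1 o2 o2 o3 o3) (A2 o2 o2 o3 o3) => h0 h1; lra.
- move: (A3 o0 o2 o3 o3) (A6 o0 o2 o3 o3) => h0 h1; lra.
- move: (A3 o1 o2 o3 o3) (A6 o1 o2 o3 o3) => h0 h1; lra.
- move: (A1 o2 o2 o3 o3) (A3 o2 o2 o3 o3) => h0 h1; lra.
- move: (A1 o2 o3 o3 o3) (A4 o2 o3 o3 o3) => h0 h1; lra.
Qed.
Lemma E4_33 c d : Y o3 o3 c d = V4 o3 o3 c d.
Proof.
case: (ord4_cases c) => ->; case: (ord4_cases d) => ->; cbv beta iota delta [V4 Wp4 nat_of_ord].
- move: (A1 o0 o0 o3 o3) (A4 o0 o0 o3 o3) (A3 o0 o3 o0 o3) => h0 h1 h2; lra.
- move: (A5 o0 o1 o3 o3) (A6 o0 o1 o3 o3) (A2 o0 o3 o3 o1) => h0 h1 h2; lra.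
- move: (A5 o0 o2 o3 o3) (A6 o0 o2 o3 o3) (A2 o0 o3 o3 o2) => h0 h1 h2; lra.
- move: (A2 o0 o3 o3 o3) (A4 o0 o3 o3 o3) => h0 h1; lra.
- move: (A4 o0 o1 o3 o3) (A6 o0 o1 o3 o3) (A3 o0 o3 o1 o3) => h0 h1 h2; lra.
- move: (A1 o1 o1 o3 o3) (A4 o1 o1 o3 o3) (A3 o1 o3 o1 o3) => h0 h1 h2; lra.
- move: (A5 o1 o2 o3 o3) (A6 o1 o2 o3 o3) (A2 o1 o3 o3 o2) => h0 h1 h2; lra.
- move: (A2 o1 o3 o3 o3) (A4 o1 o3 o3 o3) => h0 h1; lra.
- move: (A4 o0 o2 o3 o3) (A6 o0 o2 o3 o3) (A3 o0 o3 o2 o3) => h0 h1 h2; lra.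
- move: (A4 o1 o2 o3 o3) (A6 o1 o2 o3 o3) (A3 o1 o3 o2 o3) => h0 h1 h2; lra.
- move: (A1 o2 o2 o3 o3) (A4 o2 o2 o3 o3) (A3 o2 o3 o2 o3) => h0 h1 h2; lra.
- move: (A2 o2 o3 o3 o3) (A4 o2 o3 o3 o3) => h0 h1; lra.
- move: (A3 o0 o3 o3 o3) (A4 o0 o3 o3 o3) => h0 h1; lra.
- move: (A3 o1 o3 o3 o3) (A4 o1 o3 o3 o3) => h0 h1; lra.
- move: (A3 o2 o3 o3 o3) (A4 o2 o3 o3 o3) => h0 h1; lra.
- move: (A1 o3 o3 o3 o3) => h0; lra.
Qed.
Lemma E4 : Y = V4.
Proof.
fx; case: (ord4_cases a) => ->; case: (ord4_cases b) => ->.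
all: first [exact: E4_00 | exact: E4_01 | exact: E4_02 | exact: E4_03 | exact: E4_10 | exact: E4_11 | exact: E4_12 | exact: E4_13 | exact: E4_20 | exact: E4_21 | exact: E4_22 | exact: E4_23 | exact: E4_30 | exact: E4_31 | exact: E4_32 | exact: E4_33].
Qed.
Lemma eta4 : XXgoal Y.
Proof using A1 A2 A3 A4 A5 A6.
rewrite E4; exact: eta4'.
Qed.
End Eta4.

Definition Wp5 (x0 x1 x2 x3 x4 x5 x6 x7 x8 : R) (a b c d : 'I_4) : R :=
  match nat_of_ord a, nat_of_ord b, nat_of_ord c, nat_of_ord d with
  | 0, 0, 0, 0 => 0
  | 0, 0, 0, 1 => 0
  | 0, 0, 0, 2 => 0
  | 0, 0, 0, 3 => 0
  | 0, 0, 1, 0 => 0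
  | 0, 0, 1, 1 => 0
  | 0, 0, 1, 2 => 0
  | 0, 0, 1, 3 => 0
  | 0, 0, 2, 0 => 0
  | 0, 0, 2, 1 => 0
  | 0, 0, 2, 2 => 0
  | 0, 0, 2, 3 => 0
  | 0, 0, 3, 0 => 0
  | 0, 0, 3, 1 => 0
  | 0, 0, 3, 2 => 0
  | 0, 0, 3, 3 => 0
  | 0, 1, 0, 0 => 0
  | 0, 1, 0, 1 => 0
  | 0, 1, 0, 2 => x8
  | 0, 1, 0, 3 => x7
  | 0, 1, 1, 0 => 0
  | 0, 1, 1, 1 => 0
  | 0, 1, 1, 2 => x6
  | 0, 1, 1, 3 => x5
  | 0, 1, 2, 0 => - x8
  | 0, 1, 2, 1 => - x6
  | 0, 1, 2, 2 => 0
  | 0, 1, 2, 3 => x4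
  | 0, 1, 3, 0 => - x7
  | 0, 1, 3, 1 => - x5
  | 0, 1, 3, 2 => - x4
  | 0, 1, 3, 3 => 0
  | 0, 2, 0, 0 => 0
  | 0, 2, 0, 1 => - x8
  | 0, 2, 0, 2 => 0
  | 0, 2, 0, 3 => x3
  | 0, 2, 1, 0 => x8
  | 0, 2, 1, 1 => 0
  | 0, 2, 1, 2 => x2
  | 0, 2, 1, 3 => x1
  | 0, 2, 2, 0 => 0
  | 0, 2, 2, 1 => - x2
  | 0, 2, 2, 2 => 0
  | 0, 2, 2, 3 => - x5
  | 0, 2, 3, 0 => - x3
  | 0, 2, 3, 1 => - x1
  | 0, 2, 3, 2 => x5
  | 0, 2, 3, 3 => 0
  | 0, 3, 0, 0 => 0
  | 0, 3, 0, 1 => - x7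
  | 0, 3, 0, 2 => - x3
  | 0, 3, 0, 3 => 0
  | 0, 3, 1, 0 => x7
  | 0, 3, 1, 1 => 0
  | 0, 3, 1, 2 => x0
  | 0, 3, 1, 3 => - x2
  | 0, 3, 2, 0 => x3
  | 0, 3, 2, 1 => - x0
  | 0, 3, 2, 2 => 0
  | 0, 3, 2, 3 => x6
  | 0, 3, 3, 0 => 0
  | 0, 3, 3, 1 => x2
  | 0, 3, 3, 2 => - x6
  | 0, 3, 3, 3 => 0
  | 1, 0, 0, 0 => 0
  | 1, 0, 0, 1 => 0
  | 1, 0, 0, 2 => - x8
  | 1, 0, 0, 3 => - x7
  | 1, 0, 1, 0 => 0
  | 1, 0, 1, 1 => 0
  | 1, 0, 1, 2 => - x6
  | 1, 0, 1, 3 => - x5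
  | 1, 0, 2, 0 => x8
  | 1, 0, 2, 1 => x6
  | 1, 0, 2, 2 => 0
  | 1, 0, 2, 3 => - x4
  | 1, 0, 3, 0 => x7
  | 1, 0, 3, 1 => x5
  | 1, 0, 3, 2 => x4
  | 1, 0, 3, 3 => 0
  | 1, 1, 0, 0 => 0
  | 1, 1, 0, 1 => 0
  | 1, 1, 0, 2 => 0
  | 1, 1, 0, 3 => 0
  | 1, 1, 1, 0 => 0
  | 1, 1, 1, 1 => 0
  | 1, 1, 1, 2 => 0
  | 1, 1, 1, 3 => 0
  | 1, 1, 2, 0 => 0
  | 1, 1, 2, 1 => 0
  | 1, 1, 2, 2 => 0
  | 1, 1, 2, 3 => 0
  | 1, 1, 3, 0 => 0
  | 1, 1, 3, 1 => 0
  | 1, 1, 3, 2 => 0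
  | 1, 1, 3, 3 => 0
  | 1, 2, 0, 0 => 0
  | 1, 2, 0, 1 => - x6
  | 1, 2, 0, 2 => - x2
  | 1, 2, 0, 3 => - x0
  | 1, 2, 1, 0 => x6
  | 1, 2, 1, 1 => 0
  | 1, 2, 1, 2 => 0
  | 1, 2, 1, 3 => x3
  | 1, 2, 2, 0 => x2
  | 1, 2, 2, 1 => 0
  | 1, 2, 2, 2 => 0
  | 1, 2, 2, 3 => - x7
  | 1, 2, 3, 0 => x0
  | 1, 2, 3, 1 => - x3
  | 1, 2, 3, 2 => x7
  | 1, 2, 3, 3 => 0
  | 1, 3, 0, 0 => 0
  | 1, 3, 0, 1 => - x5
  | 1, 3, 0, 2 => - x1
  | 1, 3, 0, 3 => x2
  | 1, 3, 1, 0 => x5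
  | 1, 3, 1, 1 => 0
  | 1, 3, 1, 2 => - x3
  | 1, 3, 1, 3 => 0
  | 1, 3, 2, 0 => x1
  | 1, 3, 2, 1 => x3
  | 1, 3, 2, 2 => 0
  | 1, 3, 2, 3 => x8
  | 1, 3, 3, 0 => - x2
  | 1, 3, 3, 1 => 0
  | 1, 3, 3, 2 => - x8
  | 1, 3, 3, 3 => 0
  | 2, 0, 0, 0 => 0
  | 2, 0, 0, 1 => x8
  | 2, 0, 0, 2 => 0
  | 2, 0, 0, 3 => - x3
  | 2, 0, 1, 0 => - x8
  | 2, 0, 1, 1 => 0
  | 2, 0, 1, 2 => - x2
  | 2, 0, 1, 3 => - x1
  | 2, 0, 2, 0 => 0
  | 2, 0, 2, 1 => x2
  | 2, 0, 2, 2 => 0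
  | 2, 0, 2, 3 => x5
  | 2, 0, 3, 0 => x3
  | 2, 0, 3, 1 => x1
  | 2, 0, 3, 2 => - x5
  | 2, 0, 3, 3 => 0
  | 2, 1, 0, 0 => 0
  | 2, 1, 0, 1 => x6
  | 2, 1, 0, 2 => x2
  | 2, 1, 0, 3 => x0
  | 2, 1, 1, 0 => - x6
  | 2, 1, 1, 1 => 0
  | 2, 1, 1, 2 => 0
  | 2, 1, 1, 3 => - x3
  | 2, 1, 2, 0 => - x2
  | 2, 1, 2, 1 => 0
  | 2, 1, 2, 2 => 0
  | 2, 1, 2, 3 => x7
  | 2, 1, 3, 0 => - x0
  | 2, 1, 3, 1 => x3
  | 2, 1, 3, 2 => - x7
  | 2, 1, 3, 3 => 0
  | 2, 2, 0, 0 => 0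
  | 2, 2, 0, 1 => 0
  | 2, 2, 0, 2 => 0
  | 2, 2, 0, 3 => 0
  | 2, 2, 1, 0 => 0
  | 2, 2, 1, 1 => 0
  | 2, 2, 1, 2 => 0
  | 2, 2, 1, 3 => 0
  | 2, 2, 2, 0 => 0
  | 2, 2, 2, 1 => 0
  | 2, 2, 2, 2 => 0
  | 2, 2, 2, 3 => 0
  | 2, 2, 3, 0 => 0
  | 2, 2, 3, 1 => 0
  | 2, 2, 3, 2 => 0
  | 2, 2, 3, 3 => 0
  | 2, 3, 0, 0 => 0
  | 2, 3, 0, 1 => - x4
  | 2, 3, 0, 2 => x5
  | 2, 3, 0, 3 => - x6
  | 2, 3, 1, 0 => x4
  | 2, 3, 1, 1 => 0
  | 2, 3, 1, 2 => x7
  | 2, 3, 1, 3 => - x8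
  | 2, 3, 2, 0 => - x5
  | 2, 3, 2, 1 => - x7
  | 2, 3, 2, 2 => 0
  | 2, 3, 2, 3 => 0
  | 2, 3, 3, 0 => x6
  | 2, 3, 3, 1 => x8
  | 2, 3, 3, 2 => 0
  | 2, 3, 3, 3 => 0
  | 3, 0, 0, 0 => 0
  | 3, 0, 0, 1 => x7
  | 3, 0, 0, 2 => x3
  | 3, 0, 0, 3 => 0
  | 3, 0, 1, 0 => - x7
  | 3, 0, 1, 1 => 0
  | 3, 0, 1, 2 => - x0
  | 3, 0, 1, 3 => x2
  | 3, 0, 2, 0 => - x3
  | 3, 0, 2, 1 => x0
  | 3, 0, 2, 2 => 0
  | 3, 0, 2, 3 => - x6
  | 3, 0, 3, 0 => 0
  | 3, 0, 3, 1 => - x2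
  | 3, 0, 3, 2 => x6
  | 3, 0, 3, 3 => 0
  | 3, 1, 0, 0 => 0
  | 3, 1, 0, 1 => x5
  | 3, 1, 0, 2 => x1
  | 3, 1, 0, 3 => - x2
  | 3, 1, 1, 0 => - x5
  | 3, 1, 1, 1 => 0
  | 3, 1, 1, 2 => x3
  | 3, 1, 1, 3 => 0
  | 3, 1, 2, 0 => - x1
  | 3, 1, 2, 1 => - x3
  | 3, 1, 2, 2 => 0
  | 3, 1, 2, 3 => - x8
  | 3, 1, 3, 0 => x2
  | 3, 1, 3, 1 => 0
  | 3, 1, 3, 2 => x8
  | 3, 1, 3, 3 => 0
  | 3, 2, 0, 0 => 0
  | 3, 2, 0, 1 => x4
  | 3, 2, 0, 2 => - x5
  | 3, 2, 0, 3 => x6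
  | 3, 2, 1, 0 => - x4
  | 3, 2, 1, 1 => 0
  | 3, 2, 1, 2 => - x7
  | 3, 2, 1, 3 => x8
  | 3, 2, 2, 0 => x5
  | 3, 2, 2, 1 => x7
  | 3, 2, 2, 2 => 0
  | 3, 2, 2, 3 => 0
  | 3, 2, 3, 0 => - x6
  | 3, 2, 3, 1 => - x8
  | 3, 2, 3, 2 => 0
  | 3, 2, 3, 3 => 0
  | 3, 3, 0, 0 => 0
  | 3, 3, 0, 1 => 0
  | 3, 3, 0, 2 => 0
  | 3, 3, 0, 3 => 0
  | 3, 3, 1, 0 => 0
  | 3, 3, 1, 1 => 0
  | 3, 3, 1, 2 => 0
  | 3, 3, 1, 3 => 0
  | 3, 3, 2, 0 => 0
  | 3, 3, 2, 1 => 0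
  | 3, 3, 2, 2 => 0
  | 3, 3, 2, 3 => 0
  | 3, 3, 3, 0 => 0
  | 3, 3, 3, 1 => 0
  | 3, 3, 3, 2 => 0
  | 3, 3, 3, 3 => 0
  | _, _, _, _ => 0
  end.

Lemma eta5' (x0 x1 x2 x3 x4 x5 x6 x7 x8 : R) : XXgoal (Wp5 x0 x1 x2 x3 x4 x5 x6 x7 x8).
Proof.
finish_eta; cbv beta iota delta [Wp5 nat_of_ord]; ring.
Qed.

Section Eta5.
Variable Y : tensor4 R.
Hypothesis DF1 : forall a b c d, Y a b c d = - Y b a c d.
Hypothesis DF2 : forall a b c d, Y a b c d = - Y a b d c.
Hypothesis AS : forall a b c d, Y a b c d = - Y c d a b.
Hypothesis U5 : forall c d, tr12 e (pB Y) c d = 0.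
Lemma T5_5 x y : Y x o0 y o0 - Y x o1 y o1 - Y x o2 y o2 - Y x o3 y o3 = 0.
Proof. by have := U5 x y; rewrite tr12_e. Qed.
Definition V5 := Wp5 (Y o0 o3 o1 o2) (Y o0 o2 o1 o3) (Y o0 o2 o1 o2) (Y o0 o2 o0 o3) (Y o0 o1 o2 o3) (Y o0 o1 o1 o3) (Y o0 o1 o1 o2) (Y o0 o1 o0 o3) (Y o0 o1 o0 o2).
Lemma E5_00 c d : Y o0 o0 c d = V5 o0 o0 c d.
Proof.
case: (ord4_cases c) => ->; case: (ord4_cases d) => ->; cbv beta iota delta [V5 Wp5 nat_of_ord].
- move: (DF1 o0 o0 o0 o0) => h0; lra.
- move: (DF1 o0 o0 o0 o1) => h0; lra.
- move: (DF1 o0 o0 o0 o2) => h0; lra.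
- move: (DF1 o0 o0 o0 o3) => h0; lra.
- move: (DF1 o0 o0 o0 o1) (DF2 o0 o0 o0 o1) => h0 h1; lra.
- move: (DF1 o0 o0 o1 o1) => h0; lra.
- move: (DF1 o0 o0 o1 o2) => h0; lra.
- move: (DF1 o0 o0 o1 o3) => h0; lra.
- move: (DF1 o0 o0 o0 o2) (DF2 o0 o0 o0 o2) => h0 h1; lra.
- move: (DF1 o0 o0 o1 o2) (DF2 o0 o0 o1 o2) => h0 h1; lra.
- move: (DF1 o0 o0 o2 o2) => h0; lra.
- move: (DF1 o0 o0 o2 o3) => h0; lra.
- move: (DF1 o0 o0 o0 o3) (DF2 o0 o0 o0 o3) => h0 h1; lra.
- move: (DF1 o0 o0 o1 o3) (DF2 o0 o0 o1 o3) => h0 h1; lra.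
- move: (DF1 o0 o0 o2 o3) (DF2 o0 o0 o2 o3) => h0 h1; lra.
- move: (DF1 o0 o0 o3 o3) => h0; lra.
Qed.
Lemma E5_01 c d : Y o0 o1 c d = V5 o0 o1 c d.
Proof.
case: (ord4_cases c) => ->; case: (ord4_cases d) => ->; cbv beta iota delta [V5 Wp5 nat_of_ord].
- move: (DF1 o0 o0 o0 o1) (AS o0 o0 o0 o1) => h0 h1; lra.
- move: (AS o0 o1 o0 o1) => h0; lra.
- by [].
- by [].
- move: (DF2 o0 o1 o0 o1) (AS o0 o1 o0 o1) => h0 h1; lra.
- move: (DF2 o0 o1 o1 o1) => h0; lra.
- by [].
- by [].
- move: (DF2 o0 o1 o0 o2) => h0; lra.
- move: (DF2 o0 o1 o1 o2) => h0; lra.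
- move: (DF2 o0 o1 o2 o2) => h0; lra.
- by [].
- move: (DF2 o0 o1 o0 o3) => h0; lra.
- move: (DF2 o0 o1 o1 o3) => h0; lra.
- move: (DF2 o0 o1 o2 o3) => h0; lra.
- move: (DF2 o0 o1 o3 o3) => h0; lra.
Qed.
Lemma E5_02 c d : Y o0 o2 c d = V5 o0 o2 c d.
Proof.
case: (ord4_cases c) => ->; case: (ord4_cases d) => ->; cbv beta iota delta [V5 Wp5 nat_of_ord].
- move: (DF1 o0 o0 o0 o2) (AS o0 o0 o0 o2) => h0 h1; lra.
- move: (AS o0 o1 o0 o2) => h0; lra.
- move: (AS o0 o2 o0 o2) => h0; lra.
- by [].
- move: (AS o0 o1 o0 o2) (DF2 o0 o2 o0 o1) => h0 h1; lra.
- move: (DF2 o0 o2 o1 o1) => h0; lra.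
- by [].
- by [].
- move: (DF2 o0 o2 o0 o2) (AS o0 o2 o0 o2) => h0 h1; lra.
- move: (DF2 o0 o2 o1 o2) => h0; lra.
- move: (DF2 o0 o2 o2 o2) => h0; lra.
- move: (DF1 o0 o0 o0 o3) (DF2 o0 o0 o0 o3) (DF2 o0 o1 o1 o3) (DF2 o0 o2 o2 o3) (DF2 o0 o3 o3 o3) (T5_5 o0 o3) => h0 h1 h2 h3 h4 h5; lra.
- move: (DF2 o0 o2 o0 o3) => h0; lra.
- move: (DF2 o0 o2 o1 o3) => h0; lra.
- move: (DF1 o0 o0 o0 o3) (DF2 o0 o0 o0 o3) (DF2 o0 o1 o1 o3) (DF2 o0 o3 o3 o3) (T5_5 o0 o3) => h0 h1 h2 h3 h4; lra.
- move: (DF2 o0 o2 o3 o3) => h0; lra.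
Qed.
Lemma E5_03 c d : Y o0 o3 c d = V5 o0 o3 c d.
Proof.
case: (ord4_cases c) => ->; case: (ord4_cases d) => ->; cbv beta iota delta [V5 Wp5 nat_of_ord].
- move: (DF1 o0 o0 o0 o3) (AS o0 o0 o0 o3) => h0 h1; lra.
- move: (AS o0 o1 o0 o3) => h0; lra.
- move: (AS o0 o2 o0 o3) => h0; lra.
- move: (AS o0 o3 o0 o3) => h0; lra.
- move: (AS o0 o1 o0 o3) (DF2 o0 o3 o0 o1) => h0 h1; lra.
- move: (DF2 o0 o3 o1 o1) => h0; lra.
- by [].
- move: (DF1 o0 o0 o0 o1) (DF2 o0 o0 o0 o1) (DF2 o0 o1 o1 o1) (T5_5 o0 o1) => h0 h1 h2 h3; lra.
- move: (AS o0 o2 o0 o3) (DF2 o0 o3 o0 o2) => h0 h1; lra.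
- move: (DF2 o0 o3 o1 o2) => h0; lra.
- move: (DF2 o0 o3 o2 o2) => h0; lra.
- move: (DF1 o0 o0 o0 o2) (DF2 o0 o0 o0 o2) (DF2 o0 o1 o1 o2) (DF2 o0 o2 o2 o2) (T5_5 o0 o2) => h0 h1 h2 h3 h4; lra.
- move: (DF2 o0 o3 o0 o3) (AS o0 o3 o0 o3) => h0 h1; lra.
- move: (DF1 o0 o0 o0 o1) (DF2 o0 o0 o0 o1) (DF2 o0 o1 o1 o1) (DF2 o0 o3 o1 o3) (T5_5 o0 o1) => h0 h1 h2 h3 h4; lra.
- move: (DF1 o0 o0 o0 o2) (DF2 o0 o0 o0 o2) (DF2 o0 o1 o1 o2) (DF2 o0 o2 o2 o2) (DF2 o0 o3 o2 o3) (T5_5 o0 o2) => h0 h1 h2 h3 h4 h5; lra.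
- move: (DF2 o0 o3 o3 o3) => h0; lra.
Qed.
Lemma E5_10 c d : Y o1 o0 c d = V5 o1 o0 c d.
Proof.
case: (ord4_cases c) => ->; case: (ord4_cases d) => ->; cbv beta iota delta [V5 Wp5 nat_of_ord].
- move: (DF1 o0 o0 o0 o1) (DF2 o0 o0 o0 o1) (AS o0 o0 o1 o0) => h0 h1 h2; lra.
- move: (DF1 o0 o1 o0 o1) (AS o0 o1 o0 o1) => h0 h1; lra.
- move: (DF1 o0 o1 o0 o2) => h0; lra.
- move: (DF1 o0 o1 o0 o3) => h0; lra.
- move: (DF2 o0 o1 o0 o1) (AS o0 o1 o0 o1) (DF1 o0 o1 o1 o0) => h0 h1 h2; lra.
- move: (DF1 o0 o1 o1 o1) (DF2 o0 o1 o1 o1) => h0 h1; lra.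
- move: (DF1 o0 o1 o1 o2) => h0; lra.
- move: (DF1 o0 o1 o1 o3) => h0; lra.
- move: (DF2 o0 o1 o0 o2) (DF1 o0 o1 o2 o0) => h0 h1; lra.
- move: (DF2 o0 o1 o1 o2) (DF1 o0 o1 o2 o1) => h0 h1; lra.
- move: (DF1 o0 o1 o2 o2) (DF2 o0 o1 o2 o2) => h0 h1; lra.
- move: (DF1 o0 o1 o2 o3) => h0; lra.
- move: (DF2 o0 o1 o0 o3) (DF1 o0 o1 o3 o0) => h0 h1; lra.
- move: (DF2 o0 o1 o1 o3) (DF1 o0 o1 o3 o1) => h0 h1; lra.
- move: (DF2 o0 o1 o2 o3) (DF1 o0 o1 o3 o2) => h0 h1; lra.
- move: (DF1 o0 o1 o3 o3) (DF2 o0 o1 o3 o3) => h0 h1; lra.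
Qed.
Lemma E5_11 c d : Y o1 o1 c d = V5 o1 o1 c d.
Proof.
case: (ord4_cases c) => ->; case: (ord4_cases d) => ->; cbv beta iota delta [V5 Wp5 nat_of_ord].
- move: (DF1 o0 o0 o1 o1) (AS o0 o0 o1 o1) => h0 h1; lra.
- move: (DF2 o0 o1 o1 o1) (AS o0 o1 o1 o1) => h0 h1; lra.
- move: (DF2 o0 o2 o1 o1) (AS o0 o2 o1 o1) => h0 h1; lra.
- move: (DF2 o0 o3 o1 o1) (AS o0 o3 o1 o1) => h0 h1; lra.
- move: (DF1 o0 o1 o1 o1) (DF2 o0 o1 o1 o1) (AS o1 o0 o1 o1) => h0 h1 h2; lra.
- move: (DF1 o1 o1 o1 o1) => h0; lra.
- move: (DF1 o1 o1 o1 o2) => h0; lra.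
- move: (DF1 o1 o1 o1 o3) => h0; lra.
- move: (DF2 o0 o2 o1 o1) (AS o0 o2 o1 o1) (DF2 o1 o1 o0 o2) => h0 h1 h2; lra.
- move: (DF1 o1 o1 o1 o2) (DF2 o1 o1 o1 o2) => h0 h1; lra.
- move: (DF1 o1 o1 o2 o2) => h0; lra.
- move: (DF1 o1 o1 o2 o3) => h0; lra.
- move: (DF2 o0 o3 o1 o1) (AS o0 o3 o1 o1) (DF2 o1 o1 o0 o3) => h0 h1 h2; lra.
- move: (DF1 o1 o1 o1 o3) (DF2 o1 o1 o1 o3) => h0 h1; lra.
- move: (DF1 o1 o1 o2 o3) (DF2 o1 o1 o2 o3) => h0 h1; lra.
- move: (DF1 o1 o1 o3 o3) => h0; lra.
Qed.
Lemma E5_12 c d : Y o1 o2 c d = V5 o1 o2 c d.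
Proof.
case: (ord4_cases c) => ->; case: (ord4_cases d) => ->; cbv beta iota delta [V5 Wp5 nat_of_ord].
- move: (DF1 o0 o0 o1 o2) (AS o0 o0 o1 o2) => h0 h1; lra.
- move: (AS o0 o1 o1 o2) => h0; lra.
- move: (AS o0 o2 o1 o2) => h0; lra.
- move: (AS o0 o3 o1 o2) => h0; lra.
- move: (DF1 o0 o1 o1 o2) (AS o1 o0 o1 o2) => h0 h1; lra.
- move: (DF1 o1 o1 o1 o2) (AS o1 o1 o1 o2) => h0 h1; lra.
- move: (AS o1 o2 o1 o2) => h0; lra.
- move: (DF2 o0 o2 o0 o3) (DF1 o0 o2 o3 o0) (DF2 o1 o2 o1 o3) (DF1 o1 o2 o3 o1) (DF1 o2 o2 o2 o3) (DF2 o2 o2 o2 o3) (DF2 o2 o3 o3 o3) (T5_5 o2 o3) => h0 h1 h2 h3 h4 h5 h6 h7; lra.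
- move: (AS o0 o2 o1 o2) (DF2 o1 o2 o0 o2) => h0 h1; lra.
- move: (DF2 o1 o2 o1 o2) (AS o1 o2 o1 o2) => h0 h1; lra.
- move: (DF2 o1 o2 o2 o2) => h0; lra.
- move: (DF2 o0 o1 o0 o3) (DF1 o0 o1 o3 o0) (DF1 o1 o1 o1 o3) (DF2 o1 o1 o1 o3) (DF2 o1 o2 o2 o3) (DF2 o1 o3 o3 o3) (T5_5 o1 o3) => h0 h1 h2 h3 h4 h5 h6; lra.
- move: (AS o0 o3 o1 o2) (DF2 o1 o2 o0 o3) => h0 h1; lra.
- move: (DF2 o0 o2 o0 o3) (DF1 o0 o2 o3 o0) (DF1 o1 o2 o3 o1) (DF1 o2 o2 o2 o3) (DF2 o2 o2 o2 o3) (DF2 o2 o3 o3 o3) (T5_5 o2 o3) => h0 h1 h2 h3 h4 h5 h6; lra.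
- move: (DF2 o0 o1 o0 o3) (DF1 o0 o1 o3 o0) (DF1 o1 o1 o1 o3) (DF2 o1 o1 o1 o3) (DF2 o1 o3 o3 o3) (T5_5 o1 o3) => h0 h1 h2 h3 h4 h5; lra.
- move: (DF2 o1 o2 o3 o3) => h0; lra.
Qed.
Lemma E5_13 c d : Y o1 o3 c d = V5 o1 o3 c d.
Proof.
case: (ord4_cases c) => ->; case: (ord4_cases d) => ->; cbv beta iota delta [V5 Wp5 nat_of_ord].
- move: (DF1 o0 o0 o1 o3) (AS o0 o0 o1 o3) => h0 h1; lra.
- move: (AS o0 o1 o1 o3) => h0; lra.
- move: (AS o0 o2 o1 o3) => h0; lra.
- move: (DF1 o0 o0 o0 o1) (DF2 o0 o0 o0 o1) (DF2 o0 o1 o1 o1) (AS o0 o3 o1 o3) (T5_5 o0 o1) => h0 h1 h2 h3 h4; lra.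
- move: (DF1 o0 o1 o1 o3) (AS o1 o0 o1 o3) => h0 h1; lra.
- move: (DF1 o1 o1 o1 o3) (AS o1 o1 o1 o3) => h0 h1; lra.
- move: (DF2 o0 o2 o0 o3) (DF1 o0 o2 o3 o0) (DF2 o1 o2 o1 o3) (AS o1 o2 o1 o3) (DF1 o1 o2 o3 o1) (DF1 o2 o2 o2 o3) (DF2 o2 o2 o2 o3) (DF2 o2 o3 o3 o3) (T5_5 o2 o3) => h0 h1 h2 h3 h4 h5 h6 h7 h8; lra.
- move: (AS o1 o3 o1 o3) => h0; lra.
- move: (AS o0 o2 o1 o3) (DF2 o1 o3 o0 o2) => h0 h1; lra.
- move: (DF2 o0 o2 o0 o3) (DF1 o0 o2 o3 o0) (DF2 o1 o2 o1 o3) (AS o1 o2 o1 o3) (DF1 o1 o2 o3 o1) (DF2 o1 o3 o1 o2) (DF1 o2 o2 o2 o3) (DF2 o2 o2 o2 o3) (DF2 o2 o3 o3 o3) (T5_5 o2 o3) => h0 h1 h2 h3 h4 h5 h6 h7 h8 h9; lra.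
- move: (DF2 o1 o3 o2 o2) => h0; lra.
- move: (DF2 o0 o1 o0 o2) (DF1 o0 o1 o2 o0) (DF1 o1 o1 o1 o2) (DF2 o1 o1 o1 o2) (DF2 o1 o2 o2 o2) (T5_5 o1 o2) => h0 h1 h2 h3 h4 h5; lra.
- move: (DF1 o0 o0 o0 o1) (DF2 o0 o0 o0 o1) (DF2 o0 o1 o1 o1) (AS o0 o3 o1 o3) (DF2 o1 o3 o0 o3) (T5_5 o0 o1) => h0 h1 h2 h3 h4 h5; lra.
- move: (DF2 o1 o3 o1 o3) (AS o1 o3 o1 o3) => h0 h1; lra.
- move: (DF2 o0 o1 o0 o2) (DF1 o0 o1 o2 o0) (DF1 o1 o1 o1 o2) (DF2 o1 o1 o1 o2) (DF2 o1 o2 o2 o2) (DF2 o1 o3 o2 o3) (T5_5 o1 o2) => h0 h1 h2 h3 h4 h5 h6; lra.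
- move: (DF2 o1 o3 o3 o3) => h0; lra.
Qed.
Lemma E5_20 c d : Y o2 o0 c d = V5 o2 o0 c d.
Proof.
case: (ord4_cases c) => ->; case: (ord4_cases d) => ->; cbv beta iota delta [V5 Wp5 nat_of_ord].
- move: (DF1 o0 o0 o0 o2) (DF2 o0 o0 o0 o2) (AS o0 o0 o2 o0) => h0 h1 h2; lra.
- move: (DF2 o0 o1 o0 o2) (AS o0 o1 o2 o0) => h0 h1; lra.
- move: (DF1 o0 o2 o0 o2) (AS o0 o2 o0 o2) => h0 h1; lra.
- move: (DF1 o0 o2 o0 o3) => h0; lra.
- move: (AS o0 o1 o0 o2) (DF2 o0 o2 o0 o1) (DF1 o0 o2 o1 o0) => h0 h1 h2; lra.
- move: (DF1 o0 o2 o1 o1) (DF2 o0 o2 o1 o1) => h0 h1; lra.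
- move: (DF1 o0 o2 o1 o2) => h0; lra.
- move: (DF1 o0 o2 o1 o3) => h0; lra.
- move: (DF2 o0 o2 o0 o2) (AS o0 o2 o0 o2) (DF1 o0 o2 o2 o0) => h0 h1 h2; lra.
- move: (DF2 o0 o2 o1 o2) (DF1 o0 o2 o2 o1) => h0 h1; lra.
- move: (DF1 o0 o2 o2 o2) (DF2 o0 o2 o2 o2) => h0 h1; lra.
- move: (DF1 o0 o0 o0 o3) (DF2 o0 o0 o0 o3) (DF2 o0 o1 o1 o3) (DF1 o0 o2 o2 o3) (DF2 o0 o2 o2 o3) (DF2 o0 o3 o3 o3) (T5_5 o0 o3) => h0 h1 h2 h3 h4 h5 h6; lra.
- move: (DF2 o0 o2 o0 o3) (DF1 o0 o2 o3 o0) => h0 h1; lra.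
- move: (DF2 o0 o2 o1 o3) (DF1 o0 o2 o3 o1) => h0 h1; lra.
- move: (DF1 o0 o0 o0 o3) (DF2 o0 o0 o0 o3) (DF2 o0 o1 o1 o3) (DF1 o0 o2 o3 o2) (DF2 o0 o3 o3 o3) (T5_5 o0 o3) => h0 h1 h2 h3 h4 h5; lra.
- move: (DF1 o0 o2 o3 o3) (DF2 o0 o2 o3 o3) => h0 h1; lra.
Qed.
Lemma E5_21 c d : Y o2 o1 c d = V5 o2 o1 c d.
Proof.
case: (ord4_cases c) => ->; case: (ord4_cases d) => ->; cbv beta iota delta [V5 Wp5 nat_of_ord].
- move: (DF1 o0 o0 o1 o2) (DF2 o0 o0 o1 o2) (AS o0 o0 o2 o1) => h0 h1 h2; lra.
- move: (DF2 o0 o1 o1 o2) (AS o0 o1 o2 o1) => h0 h1; lra.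
- move: (DF2 o0 o2 o1 o2) (AS o0 o2 o2 o1) => h0 h1; lra.
- move: (DF2 o0 o3 o1 o2) (AS o0 o3 o2 o1) => h0 h1; lra.
- move: (DF2 o0 o1 o1 o2) (DF1 o0 o1 o2 o1) (AS o1 o0 o2 o1) => h0 h1 h2; lra.
- move: (DF1 o1 o1 o1 o2) (DF2 o1 o1 o1 o2) (AS o1 o1 o2 o1) => h0 h1 h2; lra.
- move: (DF1 o1 o2 o1 o2) (AS o1 o2 o1 o2) => h0 h1; lra.
- move: (DF2 o0 o2 o0 o3) (DF1 o0 o2 o3 o0) (DF1 o1 o2 o1 o3) (DF2 o1 o2 o1 o3) (DF1 o1 o2 o3 o1) (DF1 o2 o2 o2 o3) (DF2 o2 o2 o2 o3) (DF2 o2 o3 o3 o3) (T5_5 o2 o3) => h0 h1 h2 h3 h4 h5 h6 h7 h8; lra.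
- move: (AS o0 o2 o1 o2) (DF2 o1 o2 o0 o2) (DF1 o1 o2 o2 o0) => h0 h1 h2; lra.
- move: (DF2 o1 o2 o1 o2) (AS o1 o2 o1 o2) (DF1 o1 o2 o2 o1) => h0 h1 h2; lra.
- move: (DF1 o1 o2 o2 o2) (DF2 o1 o2 o2 o2) => h0 h1; lra.
- move: (DF2 o0 o1 o0 o3) (DF1 o0 o1 o3 o0) (DF1 o1 o1 o1 o3) (DF2 o1 o1 o1 o3) (DF1 o1 o2 o2 o3) (DF2 o1 o2 o2 o3) (DF2 o1 o3 o3 o3) (T5_5 o1 o3) => h0 h1 h2 h3 h4 h5 h6 h7; lra.
- move: (AS o0 o3 o1 o2) (DF2 o1 o2 o0 o3) (DF1 o1 o2 o3 o0) => h0 h1 h2; lra.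
- move: (DF2 o0 o2 o0 o3) (DF1 o0 o2 o3 o0) (DF1 o2 o2 o2 o3) (DF2 o2 o2 o2 o3) (DF2 o2 o3 o3 o3) (T5_5 o2 o3) => h0 h1 h2 h3 h4 h5; lra.
- move: (DF2 o0 o1 o0 o3) (DF1 o0 o1 o3 o0) (DF1 o1 o1 o1 o3) (DF2 o1 o1 o1 o3) (DF1 o1 o2 o3 o2) (DF2 o1 o3 o3 o3) (T5_5 o1 o3) => h0 h1 h2 h3 h4 h5 h6; lra.
- move: (DF1 o1 o2 o3 o3) (DF2 o1 o2 o3 o3) => h0 h1; lra.
Qed.
Lemma E5_22 c d : Y o2 o2 c d = V5 o2 o2 c d.
Proof.
case: (ord4_cases c) => ->; case: (ord4_cases d) => ->; cbv beta iota delta [V5 Wp5 nat_of_ord].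
- move: (DF1 o0 o0 o2 o2) (AS o0 o0 o2 o2) => h0 h1; lra.
- move: (DF2 o0 o1 o2 o2) (AS o0 o1 o2 o2) => h0 h1; lra.
- move: (DF2 o0 o2 o2 o2) (AS o0 o2 o2 o2) => h0 h1; lra.
- move: (DF2 o0 o3 o2 o2) (AS o0 o3 o2 o2) => h0 h1; lra.
- move: (DF1 o0 o1 o2 o2) (DF2 o0 o1 o2 o2) (AS o1 o0 o2 o2) => h0 h1 h2; lra.
- move: (DF1 o1 o1 o2 o2) (AS o1 o1 o2 o2) => h0 h1; lra.
- move: (DF2 o1 o2 o2 o2) (AS o1 o2 o2 o2) => h0 h1; lra.
- move: (DF2 o1 o3 o2 o2) (AS o1 o3 o2 o2) => h0 h1; lra.
- move: (DF1 o0 o2 o2 o2) (DF2 o0 o2 o2 o2) (AS o2 o0 o2 o2) => h0 h1 h2; lra.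
- move: (DF1 o1 o2 o2 o2) (DF2 o1 o2 o2 o2) (AS o2 o1 o2 o2) => h0 h1 h2; lra.
- move: (DF1 o2 o2 o2 o2) => h0; lra.
- move: (DF1 o2 o2 o2 o3) => h0; lra.
- move: (DF2 o0 o3 o2 o2) (AS o0 o3 o2 o2) (DF2 o2 o2 o0 o3) => h0 h1 h2; lra.
- move: (DF2 o1 o3 o2 o2) (AS o1 o3 o2 o2) (DF2 o2 o2 o1 o3) => h0 h1 h2; lra.
- move: (DF1 o2 o2 o2 o3) (DF2 o2 o2 o2 o3) => h0 h1; lra.
- move: (DF1 o2 o2 o3 o3) => h0; lra.
Qed.
Lemma E5_23 c d : Y o2 o3 c d = V5 o2 o3 c d.
Proof.
case: (ord4_cases c) => ->; case: (ord4_cases d) => ->; cbv beta iota delta [V5 Wp5 nat_of_ord].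
- move: (DF1 o0 o0 o2 o3) (AS o0 o0 o2 o3) => h0 h1; lra.
- move: (AS o0 o1 o2 o3) => h0; lra.
- move: (DF1 o0 o0 o0 o3) (DF2 o0 o0 o0 o3) (DF2 o0 o1 o1 o3) (DF2 o0 o2 o2 o3) (AS o0 o2 o2 o3) (DF2 o0 o3 o3 o3) (T5_5 o0 o3) => h0 h1 h2 h3 h4 h5 h6; lra.
- move: (DF1 o0 o0 o0 o2) (DF2 o0 o0 o0 o2) (DF2 o0 o1 o1 o2) (DF2 o0 o2 o2 o2) (AS o0 o3 o2 o3) (T5_5 o0 o2) => h0 h1 h2 h3 h4 h5; lra.
- move: (DF1 o0 o1 o2 o3) (AS o1 o0 o2 o3) => h0 h1; lra.
- move: (DF1 o1 o1 o2 o3) (AS o1 o1 o2 o3) => h0 h1; lra.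
- move: (DF2 o0 o1 o0 o3) (DF1 o0 o1 o3 o0) (DF1 o1 o1 o1 o3) (DF2 o1 o1 o1 o3) (DF2 o1 o2 o2 o3) (AS o1 o2 o2 o3) (DF2 o1 o3 o3 o3) (T5_5 o1 o3) => h0 h1 h2 h3 h4 h5 h6 h7; lra.
- move: (DF2 o0 o1 o0 o2) (DF1 o0 o1 o2 o0) (DF1 o1 o1 o1 o2) (DF2 o1 o1 o1 o2) (DF2 o1 o2 o2 o2) (AS o1 o3 o2 o3) (T5_5 o1 o2) => h0 h1 h2 h3 h4 h5 h6; lra.
- move: (DF1 o0 o0 o0 o3) (DF2 o0 o0 o0 o3) (DF2 o0 o1 o1 o3) (DF1 o0 o2 o2 o3) (DF2 o0 o2 o2 o3) (DF2 o0 o3 o3 o3) (AS o2 o0 o2 o3) (T5_5 o0 o3) => h0 h1 h2 h3 h4 h5 h6 h7; lra.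
- move: (DF2 o0 o1 o0 o3) (DF1 o0 o1 o3 o0) (DF1 o1 o1 o1 o3) (DF2 o1 o1 o1 o3) (DF1 o1 o2 o2 o3) (DF2 o1 o2 o2 o3) (DF2 o1 o3 o3 o3) (AS o2 o1 o2 o3) (T5_5 o1 o3) => h0 h1 h2 h3 h4 h5 h6 h7 h8; lra.
- move: (DF1 o2 o2 o2 o3) (AS o2 o2 o2 o3) => h0 h1; lra.
- move: (AS o2 o3 o2 o3) => h0; lra.
- move: (DF1 o0 o0 o0 o2) (DF2 o0 o0 o0 o2) (DF2 o0 o1 o1 o2) (DF2 o0 o2 o2 o2) (AS o0 o3 o2 o3) (DF2 o2 o3 o0 o3) (T5_5 o0 o2) => h0 h1 h2 h3 h4 h5 h6; lra.
- move: (DF2 o0 o1 o0 o2) (DF1 o0 o1 o2 o0) (DF1 o1 o1 o1 o2) (DF2 o1 o1 o1 o2) (DF2 o1 o2 o2 o2) (AS o1 o3 o2 o3) (DF2 o2 o3 o1 o3) (T5_5 o1 o2) => h0 h1 h2 h3 h4 h5 h6 h7; lra.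
- move: (DF2 o2 o3 o2 o3) (AS o2 o3 o2 o3) => h0 h1; lra.
- move: (DF2 o2 o3 o3 o3) => h0; lra.
Qed.
Lemma E5_30 c d : Y o3 o0 c d = V5 o3 o0 c d.
Proof.
case: (ord4_cases c) => ->; case: (ord4_cases d) => ->; cbv beta iota delta [V5 Wp5 nat_of_ord].
- move: (DF1 o0 o0 o0 o3) (DF2 o0 o0 o0 o3) (AS o0 o0 o3 o0) => h0 h1 h2; lra.
- move: (DF2 o0 o1 o0 o3) (AS o0 o1 o3 o0) => h0 h1; lra.
- move: (DF2 o0 o2 o0 o3) (AS o0 o2 o3 o0) => h0 h1; lra.
- move: (DF1 o0 o3 o0 o3) (AS o0 o3 o0 o3) => h0 h1; lra.
- move: (AS o0 o1 o0 o3) (DF2 o0 o3 o0 o1) (DF1 o0 o3 o1 o0) => h0 h1 h2; lra.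
- move: (DF1 o0 o3 o1 o1) (DF2 o0 o3 o1 o1) => h0 h1; lra.
- move: (DF1 o0 o3 o1 o2) => h0; lra.
- move: (DF1 o0 o0 o0 o1) (DF2 o0 o0 o0 o1) (DF2 o0 o1 o1 o1) (DF1 o0 o3 o1 o3) (T5_5 o0 o1) => h0 h1 h2 h3 h4; lra.
- move: (AS o0 o2 o0 o3) (DF2 o0 o3 o0 o2) (DF1 o0 o3 o2 o0) => h0 h1 h2; lra.
- move: (DF2 o0 o3 o1 o2) (DF1 o0 o3 o2 o1) => h0 h1; lra.
- move: (DF1 o0 o3 o2 o2) (DF2 o0 o3 o2 o2) => h0 h1; lra.
- move: (DF1 o0 o0 o0 o2) (DF2 o0 o0 o0 o2) (DF2 o0 o1 o1 o2) (DF2 o0 o2 o2 o2) (DF1 o0 o3 o2 o3) (T5_5 o0 o2) => h0 h1 h2 h3 h4 h5; lra.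
- move: (DF2 o0 o3 o0 o3) (AS o0 o3 o0 o3) (DF1 o0 o3 o3 o0) => h0 h1 h2; lra.
- move: (DF1 o0 o0 o0 o1) (DF2 o0 o0 o0 o1) (DF2 o0 o1 o1 o1) (DF2 o0 o3 o1 o3) (DF1 o0 o3 o3 o1) (T5_5 o0 o1) => h0 h1 h2 h3 h4 h5; lra.
- move: (DF1 o0 o0 o0 o2) (DF2 o0 o0 o0 o2) (DF2 o0 o1 o1 o2) (DF2 o0 o2 o2 o2) (DF2 o0 o3 o2 o3) (DF1 o0 o3 o3 o2) (T5_5 o0 o2) => h0 h1 h2 h3 h4 h5 h6; lra.
- move: (DF1 o0 o3 o3 o3) (DF2 o0 o3 o3 o3) => h0 h1; lra.
Qed.
Lemma E5_31 c d : Y o3 o1 c d = V5 o3 o1 c d.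
Proof.
case: (ord4_cases c) => ->; case: (ord4_cases d) => ->; cbv beta iota delta [V5 Wp5 nat_of_ord].
- move: (DF1 o0 o0 o1 o3) (DF2 o0 o0 o1 o3) (AS o0 o0 o3 o1) => h0 h1 h2; lra.
- move: (DF2 o0 o1 o1 o3) (AS o0 o1 o3 o1) => h0 h1; lra.
- move: (DF2 o0 o2 o1 o3) (AS o0 o2 o3 o1) => h0 h1; lra.
- move: (DF1 o0 o0 o0 o1) (DF2 o0 o0 o0 o1) (DF2 o0 o1 o1 o1) (DF2 o0 o3 o1 o3) (AS o0 o3 o3 o1) (T5_5 o0 o1) => h0 h1 h2 h3 h4 h5; lra.
- move: (DF2 o0 o1 o1 o3) (DF1 o0 o1 o3 o1) (AS o1 o0 o3 o1) => h0 h1 h2; lra.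
- move: (DF1 o1 o1 o1 o3) (DF2 o1 o1 o1 o3) (AS o1 o1 o3 o1) => h0 h1 h2; lra.
- move: (DF2 o0 o2 o0 o3) (DF1 o0 o2 o3 o0) (DF1 o1 o2 o3 o1) (AS o1 o2 o3 o1) (DF1 o2 o2 o2 o3) (DF2 o2 o2 o2 o3) (DF2 o2 o3 o3 o3) (T5_5 o2 o3) => h0 h1 h2 h3 h4 h5 h6 h7; lra.
- move: (DF1 o1 o3 o1 o3) (AS o1 o3 o1 o3) => h0 h1; lra.
- move: (AS o0 o2 o1 o3) (DF2 o1 o3 o0 o2) (DF1 o1 o3 o2 o0) => h0 h1 h2; lra.
- move: (DF2 o0 o2 o0 o3) (DF1 o0 o2 o3 o0) (DF2 o1 o2 o1 o3) (AS o1 o2 o1 o3) (DF1 o1 o2 o3 o1) (DF2 o1 o3 o1 o2) (DF1 o1 o3 o2 o1) (DF1 o2 o2 o2 o3) (DF2 o2 o2 o2 o3) (DF2 o2 o3 o3 o3) (T5_5 o2 o3) => h0 h1 h2 h3 h4 h5 h6 h7 h8 h9 h10; lra.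
- move: (DF1 o1 o3 o2 o2) (DF2 o1 o3 o2 o2) => h0 h1; lra.
- move: (DF2 o0 o1 o0 o2) (DF1 o0 o1 o2 o0) (DF1 o1 o1 o1 o2) (DF2 o1 o1 o1 o2) (DF2 o1 o2 o2 o2) (DF1 o1 o3 o2 o3) (T5_5 o1 o2) => h0 h1 h2 h3 h4 h5 h6; lra.
- move: (DF1 o0 o0 o0 o1) (DF2 o0 o0 o0 o1) (DF2 o0 o1 o1 o1) (AS o0 o3 o1 o3) (DF2 o1 o3 o0 o3) (DF1 o1 o3 o3 o0) (T5_5 o0 o1) => h0 h1 h2 h3 h4 h5 h6; lra.
- move: (DF2 o1 o3 o1 o3) (AS o1 o3 o1 o3) (DF1 o1 o3 o3 o1) => h0 h1 h2; lra.
- move: (DF2 o0 o1 o0 o2) (DF1 o0 o1 o2 o0) (DF1 o1 o1 o1 o2) (DF2 o1 o1 o1 o2) (DF2 o1 o2 o2 o2) (DF2 o1 o3 o2 o3) (DF1 o1 o3 o3 o2) (T5_5 o1 o2) => h0 h1 h2 h3 h4 h5 h6 h7; lra.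
- move: (DF1 o1 o3 o3 o3) (DF2 o1 o3 o3 o3) => h0 h1; lra.
Qed.
Lemma E5_32 c d : Y o3 o2 c d = V5 o3 o2 c d.
Proof.
case: (ord4_cases c) => ->; case: (ord4_cases d) => ->; cbv beta iota delta [V5 Wp5 nat_of_ord].
- move: (DF1 o0 o0 o2 o3) (DF2 o0 o0 o2 o3) (AS o0 o0 o3 o2) => h0 h1 h2; lra.
- move: (DF2 o0 o1 o2 o3) (AS o0 o1 o3 o2) => h0 h1; lra.
- move: (DF1 o0 o0 o0 o3) (DF2 o0 o0 o0 o3) (DF2 o0 o1 o1 o3) (AS o0 o2 o3 o2) (DF2 o0 o3 o3 o3) (T5_5 o0 o3) => h0 h1 h2 h3 h4 h5; lra.
- move: (DF1 o0 o0 o0 o2) (DF2 o0 o0 o0 o2) (DF2 o0 o1 o1 o2) (DF2 o0 o2 o2 o2) (DF2 o0 o3 o2 o3) (AS o0 o3 o3 o2) (T5_5 o0 o2) => h0 h1 h2 h3 h4 h5 h6; lra.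
- move: (DF2 o0 o1 o2 o3) (DF1 o0 o1 o3 o2) (AS o1 o0 o3 o2) => h0 h1 h2; lra.
- move: (DF1 o1 o1 o2 o3) (DF2 o1 o1 o2 o3) (AS o1 o1 o3 o2) => h0 h1 h2; lra.
- move: (DF2 o0 o1 o0 o3) (DF1 o0 o1 o3 o0) (DF1 o1 o1 o1 o3) (DF2 o1 o1 o1 o3) (AS o1 o2 o3 o2) (DF2 o1 o3 o3 o3) (T5_5 o1 o3) => h0 h1 h2 h3 h4 h5 h6; lra.
- move: (DF2 o0 o1 o0 o2) (DF1 o0 o1 o2 o0) (DF1 o1 o1 o1 o2) (DF2 o1 o1 o1 o2) (DF2 o1 o2 o2 o2) (DF2 o1 o3 o2 o3) (AS o1 o3 o3 o2) (T5_5 o1 o2) => h0 h1 h2 h3 h4 h5 h6 h7; lra.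
- move: (DF1 o0 o0 o0 o3) (DF2 o0 o0 o0 o3) (DF2 o0 o1 o1 o3) (DF1 o0 o2 o3 o2) (DF2 o0 o3 o3 o3) (AS o2 o0 o3 o2) (T5_5 o0 o3) => h0 h1 h2 h3 h4 h5 h6; lra.
- move: (DF2 o0 o1 o0 o3) (DF1 o0 o1 o3 o0) (DF1 o1 o1 o1 o3) (DF2 o1 o1 o1 o3) (DF1 o1 o2 o3 o2) (DF2 o1 o3 o3 o3) (AS o2 o1 o3 o2) (T5_5 o1 o3) => h0 h1 h2 h3 h4 h5 h6 h7; lra.
- move: (DF1 o2 o2 o2 o3) (DF2 o2 o2 o2 o3) (AS o2 o2 o3 o2) => h0 h1 h2; lra.
- move: (DF1 o2 o3 o2 o3) (AS o2 o3 o2 o3) => h0 h1; lra.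
- move: (DF1 o0 o0 o0 o2) (DF2 o0 o0 o0 o2) (DF2 o0 o1 o1 o2) (DF2 o0 o2 o2 o2) (AS o0 o3 o2 o3) (DF2 o2 o3 o0 o3) (DF1 o2 o3 o3 o0) (T5_5 o0 o2) => h0 h1 h2 h3 h4 h5 h6 h7; lra.
- move: (DF2 o0 o1 o0 o2) (DF1 o0 o1 o2 o0) (DF1 o1 o1 o1 o2) (DF2 o1 o1 o1 o2) (DF2 o1 o2 o2 o2) (AS o1 o3 o2 o3) (DF2 o2 o3 o1 o3) (DF1 o2 o3 o3 o1) (T5_5 o1 o2) => h0 h1 h2 h3 h4 h5 h6 h7 h8; lra.
- move: (DF2 o2 o3 o2 o3) (AS o2 o3 o2 o3) (DF1 o2 o3 o3 o2) => h0 h1 h2; lra.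
- move: (DF1 o2 o3 o3 o3) (DF2 o2 o3 o3 o3) => h0 h1; lra.
Qed.
Lemma E5_33 c d : Y o3 o3 c d = V5 o3 o3 c d.
Proof.
case: (ord4_cases c) => ->; case: (ord4_cases d) => ->; cbv beta iota delta [V5 Wp5 nat_of_ord].
- move: (DF1 o0 o0 o3 o3) (AS o0 o0 o3 o3) => h0 h1; lra.
- move: (DF2 o0 o1 o3 o3) (AS o0 o1 o3 o3) => h0 h1; lra.
- move: (DF2 o0 o2 o3 o3) (AS o0 o2 o3 o3) => h0 h1; lra.
- move: (DF2 o0 o3 o3 o3) (AS o0 o3 o3 o3) => h0 h1; lra.
- move: (DF1 o0 o1 o3 o3) (DF2 o0 o1 o3 o3) (AS o1 o0 o3 o3) => h0 h1 h2; lra.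
- move: (DF1 o1 o1 o3 o3) (AS o1 o1 o3 o3) => h0 h1; lra.
- move: (DF2 o1 o2 o3 o3) (AS o1 o2 o3 o3) => h0 h1; lra.
- move: (DF2 o1 o3 o3 o3) (AS o1 o3 o3 o3) => h0 h1; lra.
- move: (DF1 o0 o2 o3 o3) (DF2 o0 o2 o3 o3) (AS o2 o0 o3 o3) => h0 h1 h2; lra.
- move: (DF1 o1 o2 o3 o3) (DF2 o1 o2 o3 o3) (AS o2 o1 o3 o3) => h0 h1 h2; lra.
- move: (DF1 o2 o2 o3 o3) (AS o2 o2 o3 o3) => h0 h1; lra.
- move: (DF2 o2 o3 o3 o3) (AS o2 o3 o3 o3) => h0 h1; lra.
- move: (DF1 o0 o3 o3 o3) (DF2 o0 o3 o3 o3) (AS o3 o0 o3 o3) => h0 h1 h2; lra.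
- move: (DF1 o1 o3 o3 o3) (DF2 o1 o3 o3 o3) (AS o3 o1 o3 o3) => h0 h1 h2; lra.
- move: (DF1 o2 o3 o3 o3) (DF2 o2 o3 o3 o3) (AS o3 o2 o3 o3) => h0 h1 h2; lra.
- move: (DF1 o3 o3 o3 o3) => h0; lra.
Qed.
Lemma E5 : Y = V5.
Proof.
fx; case: (ord4_cases a) => ->; case: (ord4_cases b) => ->.
all: first [exact: E5_00 | exact: E5_01 | exact: E5_02 | exact: E5_03 | exact: E5_10 | exact: E5_11 | exact: E5_12 | exact: E5_13 | exact: E5_20 | exact: E5_21 | exact: E5_22 | exact: E5_23 | exact: E5_30 | exact: E5_31 | exact: E5_32 | exact: E5_33].
Qed.
Lemma eta5 : XXgoal Y.
Proof using DF1 DF2 AS U5.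
rewrite E5; exact: eta5'.
Qed.
End Eta5.

End G2.

Section F.
Variable R : realFieldType.
Notation e := (minkowski R).

Lemma ginv_frame (g P : 'M[R]_4) : P \in unitmx -> P^T *m g *m P = e ->
  P *m e *m P^T = ginv g.
Proof.
move=> Pu hPg.
have PPi : P *m invmx P = 1%:M by rewrite mulmxV.
set K := P *m e *m P^T.
have Kg : K *m g = 1%:M.
  have KgP : K *m g *m P = P.
    by rewrite /K -!mulmxA [P^T *m _]mulmxA hPg e_sq mulmx1.
  by rewrite -[K *m g]mulmx1 -PPi mulmxA KgP.
have [_ gu] := mulmx1_unit Kg.
by rewrite /ginv -[invmx g]mul1mx -Kg -mulmxA mulmxV // mulmx1.
Qed.

End F.

Unset Implicit Arguments.

Theorem propositionV2 (R : realFieldType) (g : 'M[R]_4) (X : tensor4 R) :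
  lorentzian_metric g -> irreducible_df g X ->
  forall a b : 'I_4, XX g X a b = invI g X * (a == b)%:R.
Proof.
case=> gT [P [Pu hPg]] [[DF1 DF2] Hs].
apply: (frame gT Pu hPg).
have hG := ginv_frame Pu hPg.
case: Hs => [S1|[S2|[S3|[S4|[S5|S6]]]]].
- case: S1 => Sy [Bi [T1 [T2 [T3 [T4 [T5 T6]]]]]].
  apply: eta1.
  + exact: (anti_tr (TT_sw12 P) DF1).
  + exact: (anti_tr (TT_sw34 P) DF2).
  + exact: (sym_tr (TT_swP P) Sy).
  + exact: (bianchi_tr P Bi).
  + exact: (tr_transfer hG T1).
  + exact: (tr_tr (TT_sw23 P) hG T2).
  + exact: (tr_tr (TT_cyA P) hG T3).
  + exact: (tr_tr (TT_pA P) hG T4).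
  + exact: (tr_tr (TT_pB P) hG T5).
  + exact: (tr_tr (TT_swP P) hG T6).
- case: S2 => h [hT [htr0 ->]].
  rewrite gh_tr //; apply: eta2.
  + by rewrite !trmx_mul trmxK hT mulmxA.
  + exact: (htr hG htr0).
- case: S3 => lam ->.
  rewrite gg_tr //; exact: eta3'.
- case: S4 => A1 [A2 [A3 [A4 [A5 A6]]]].
  apply: eta4.
  + exact: (anti_tr (TT_sw12 P) A1).
  + exact: (anti_tr (TT_sw13 P) A2).
  + exact: (anti_tr (TT_sw14 P) A3).
  + exact: (anti_tr (TT_sw23 P) A4).
  + exact: (anti_tr (TT_sw24 P) A5).
  + exact: (anti_tr (TT_sw34 P) A6).
- case: S5 => As Tr.
  apply: eta5.
  + exact: (anti_tr (TT_sw12 P) DF1).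
  + exact: (anti_tr (TT_sw34 P) DF2).
  + exact: (anti_tr (TT_swP P) As).
  + exact: (tr_tr (TT_pB P) hG Tr).
- case: S6 => h [hT ->].
  rewrite gh_tr //; apply: eta6.
  by rewrite !trmx_mul trmxK hT mulNmx mulmxN mulmxA.
Qed.
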